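(* Let $a,b,c\geq 1$ be integers, put $v=a+b+c+1$ and $L=\{1^a,2^b,6^c\}$, and suppose $6\leq\lfloor v/2\rfloor$. Then there exists a Hamiltonian path $H$ of $K_v$ with $\ell(H)=L$ if and only if for every divisor $d$ of $v$, the number of elements of $L$ (with multiplicity) that are multiples of $d$ does not exceed $v-d$.
   Context: $K_v$ is the complete graph on $\{0,1,\dots,v-1\}$. The length of an edge $[x,y]$ is $\ell(x,y)=\min(|x-y|,\,v-|x-y|)$, and for a subgraph $\Gamma$, $\ell(\Gamma)$ is the multiset of lengths of its edges. $\{1^a,2^b,6^c\}$ is the multiset with $a$ copies of $1$, $b$ copies of $2$, $c$ copies of $6$. (The paper phrases this as ''$\mathrm{BHR}(\{1^a,2^b,6^c\})$ holds''.) *)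

(* Defs.v *)
From mathcomp Require Import all_boot.
Set Implicit Arguments. Unset Strict Implicit. Unset Printing Implicit Defensive.

Definition edge_len (v x y : nat) : nat :=
  let d := maxn x y - minn x y in minn d (v - d).

Definition ham_path (v : nat) (p : seq nat) : Prop := perm_eq p (iota 0 v).

Definition path_lengths (v : nat) (p : seq nat) : seq nat :=
  match p with
  | [::] => [::]
  | x :: s => pairmap (edge_len v) x s
  end.

Definition L126 (a b c : nat) : seq nat := nseq a 1 ++ nseq b 2 ++ nseq c 6.

(* Main.v *)
Require Import Defs.
From mathcomp Require Import all_boot.
From mathcomp Require Import zify.
Set Implicit Arguments. Unset Strict Implicit. Unset Printing Implicit Defensive.

Definition edges (p : seq nat) : seq (nat * nat) :=
  match p with [::] => [::] | x :: s => pairmap pair x s end.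
Definition und (e : nat * nat) := (minn e.1 e.2, maxn e.1 e.2).

Definition gE (G k x y : nat) : bool :=
  if maxn x y - minn x y <= 6 then
    ((minn x y < G) && (G <= maxn x y)) ==> ((maxn x y - minn x y == k) && (maxn x y < G + k))
  else (minn x y < G) && (G <= maxn x y).

Definition blockok (v : nat) (p : seq nat) (G k : nat) : bool :=
  [&& 0 < k, k <= G, G + k <= v,
      all (fun j => (G - k + j, G + j) \in map und (edges p)) (iota 0 k)
    & all (fun e => gE G k e.1 e.2) (edges p)].

Definition sepb (G H m : nat) := (H + m <= G) || (G + m <= H).

Section Ins.
Variables (G k : nat).
Definition fs (x : nat) := if x < G then x else x + k.
Definition shift := fs.
Definition isblk (x y : nat) := (maxn x y - minn x y == k) && (G <= maxn x y) && (maxn x y < G + k).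
Fixpoint insf (x : nat) (s : seq nat) : seq nat :=
  match s with
  | [::] => [:: fs x]
  | y :: s' => fs x :: (if isblk x y then maxn x y :: insf y s' else insf y s')
  end.
Definition ins (p : seq nat) := match p with [::] => [::] | x :: s => insf x s end.
Definition exE (x y : nat) : seq (nat * nat) :=
  if isblk x y then [:: (fs x, maxn x y); (maxn x y, fs y)] else [:: (fs x, fs y)].

Lemma insf_head x s : exists r, insf x s = fs x :: r.
Proof. by case: s => [|y s] /=; eexists. Qed.

Lemma edges_ins x s : edges (insf x s) = flatten (pairmap exE x s).
Proof.
elim: s x => [|y s IH] x //=.
rewrite /exE; case: ifP => _ /=.
  by have [r Er] := insf_head y s; rewrite -IH /= Er.
by have [r Er] := insf_head y s; rewrite -IH /= Er.
Qed.

Lemma ins_perm x s :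
  perm_eq (insf x s) (map fs (x :: s) ++
     [seq maxn e.1 e.2 | e <- pairmap pair x s & isblk e.1 e.2]).
Proof.
elim: s x => [|y s IH] x /=; first by [].
case: ifP => _ /=.
  rewrite perm_cons.
  set M := [seq maxn e.1 e.2 | e <- pairmap pair y s & isblk e.1 e.2].
  rewrite (_ : fs y :: map fs s ++ maxn x y :: M = (fs y :: map fs s) ++ [:: maxn x y] ++ M) //.
  rewrite perm_sym perm_catCA /= perm_cons perm_sym; apply: IH.
by rewrite perm_cons; apply: IH.
Qed.
End Ins.

Lemma fs_mono G k x y : x <= y -> fs G k x <= fs G k y.
Proof. rewrite /fs; case: (ltnP x G); case: (ltnP y G); lia. Qed.

Ltac arith x y :=
  let h := fresh "h" in (case: (leqP x y) => h; [rewrite ?(maxn_idPr h) ?(minn_idPl h) ?(maxn_idPr (fs_mono _ _ h)) ?(minn_idPl (fs_mono _ _ h)) | rewrite ?(maxn_idPl (ltnW h)) ?(minn_idPr (ltnW h)) ?(maxn_idPl (fs_mono _ _ (ltnW h))) ?(minn_idPr (fs_mono _ _ (ltnW h)))]);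
  rewrite /shift /fs; repeat match goal with |- context [if ?a < ?b then _ else _] => case: (ltnP a b) => ? end;
  rewrite /gE /isblk /edge_len /sepb; cbv beta zeta;
  repeat case: ifP => ?; move=> *; (repeat split); lia.

Lemma L1 v G k x y : 0 < k -> k <= 6 -> k <= G -> G + k <= v -> 12 <= v -> x < v -> y < v ->
  isblk G k x y -> [/\ edge_len v x y = k, edge_len (v+k) (fs G k x) (maxn x y) = k
     & edge_len (v+k) (maxn x y) (fs G k y) = k].
Proof. arith x y. Qed.

Lemma L2 v G k x y : 0 < k -> k <= 6 -> k <= G -> G + k <= v -> 12 <= v -> x < v -> y < v ->
  0 < edge_len v x y <= 6 -> gE G k x y -> ~~ isblk G k x y ->
  edge_len (v+k) (fs G k x) (fs G k y) = edge_len v x y.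
Proof. arith x y. Qed.

Lemma L3 v G k x y : 0 < k -> k <= 6 -> k <= G -> G + k <= v -> 12 <= v -> x < v -> y < v ->
  0 < edge_len v x y <= 6 -> gE G k x y -> ~~ isblk G k x y ->
  gE (G+k) k (fs G k x) (fs G k y).
Proof. arith x y. Qed.

Lemma L4 v G k x y : 0 < k -> k <= 6 -> k <= G -> G + k <= v -> 12 <= v -> x < v -> y < v ->
  isblk G k x y -> gE (G+k) k (fs G k x) (maxn x y) && gE (G+k) k (maxn x y) (fs G k y).
Proof. arith x y. Qed.

Lemma L5 v G k H k' x y : 0 < k -> k <= 6 -> k <= G -> G + k <= v -> 12 <= v -> x < v -> y < v ->
  0 < k' -> k' <= 6 -> sepb G H (maxn k k') ->
  isblk G k x y -> gE (shift G k H) k' (fs G k x) (maxn x y) && gE (shift G k H) k' (maxn x y) (fs G k y).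
Proof. arith x y. Qed.

Lemma gE_sym G k x y : gE G k x y = gE G k y x.
Proof. by rewrite /gE maxnC minnC. Qed.
Lemma isblk_sym G k x y : isblk G k x y = isblk G k y x.
Proof. by rewrite /isblk maxnC minnC. Qed.
Lemma elen_sym v x y : edge_len v x y = edge_len v y x.
Proof. by rewrite /edge_len (maxnC y) (minnC y). Qed.

Lemma L6c v G k H k' x y : x <= y -> 0 < k -> k <= 6 -> k <= G -> G + k <= v -> 12 <= v -> y < v ->
  0 < k' -> k' <= 6 -> sepb G H (maxn k k') -> 0 < edge_len v x y <= 6 ->
  gE G k x y -> gE H k' x y -> ~~ isblk G k x y -> gE (shift G k H) k' (fs G k x) (fs G k y).
Proof.
move=> h hk hk6 hkG hGv hv hy hk' hk'6 hs hl h1 h2 h3.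
have F1 : (y - x <= 6 -> (y < G) || (G <= x)) /\ (6 < y - x -> (x < G) && (G <= y)).
  move: h1 h3; rewrite /gE /isblk (maxn_idPr h) (minn_idPl h); case: (leqP (y - x) 6) => /= ?; lia.
have F2 : (y - x <= 6 -> (x < H <= y) ==> (y - x == k') && (y < H + k')) /\ (6 < y - x -> (x < H) && (H <= y)).
  move: h2; rewrite /gE (maxn_idPr h) (minn_idPl h); case: (leqP (y - x) 6) => /= ?; lia.
have F3 : 6 < y - x -> y - x + 6 >= v.
  move: hl; rewrite /edge_len (maxn_idPr h) (minn_idPl h) /=; lia.
clear h1 h2 h3 hl.
rewrite /gE (maxn_idPr (fs_mono _ _ h)) (minn_idPl (fs_mono _ _ h)).
move: hs; rewrite /sepb /shift /fs => hs.
case: (leqP (y - x) 6) => hd; last first.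
{ have := F1.2 hd; have := F2.2 hd; have := F3 hd; clear F1 F2 F3 => C B A.
  case: (ltnP x G) => hx; case: (ltnP y G) => hy'; case: (ltnP H G) => hH /=; case: ifP => ? //.
  all: lia. }
  have := F1.1 hd; have := F2.1 hd; clear F1 F2 F3 => B A.
  case: (ltnP x G) => hx; case: (ltnP y G) => hy'; case: (ltnP H G) => hH /=; case: ifP => ? //.
  all: lia.
Qed.

Lemma L6 v G k H k' x y : 0 < k -> k <= 6 -> k <= G -> G + k <= v -> 12 <= v -> x < v -> y < v ->
  0 < k' -> k' <= 6 -> sepb G H (maxn k k') -> 0 < edge_len v x y <= 6 ->
  gE G k x y -> gE H k' x y -> ~~ isblk G k x y -> gE (shift G k H) k' (fs G k x) (fs G k y).
Proof.
move=> hk hk6 hkG hGv hv hx hy hk' hk'6 hs hl h1 h2 h3.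
case: (leqP x y) => h.
  exact: (@L6c v G k H k' x y h hk hk6 hkG hGv hv hy hk' hk'6 hs hl h1 h2 h3).
rewrite gE_sym; apply: (@L6c v G k H k' y x (ltnW h) hk hk6 hkG hGv hv hx hk' hk'6 hs).
- by rewrite elen_sym.
- by rewrite gE_sym.
- by rewrite gE_sym.
- by rewrite isblk_sym.
Qed.

Lemma L7 v G k H k' j x y : 0 < k -> k <= 6 -> k <= G -> G + k <= v -> 12 <= v ->
  0 < k' -> k' <= 6 -> k' <= H -> j < k' -> sepb G H (maxn k k') ->
  minn x y = H - k' + j -> maxn x y = H + j ->
  ~~ isblk G k x y /\ minn (fs G k x) (fs G k y) = shift G k H - k' + j /\ maxn (fs G k x) (fs G k y) = shift G k H + j.
Proof. arith x y. Qed.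

Lemma L8 G k x y : k <= G -> isblk G k x y ->
  ((minn (fs G k x) (maxn x y) == maxn x y) && (maxn (fs G k x) (maxn x y) == maxn x y + k)) ||
  ((minn (maxn x y) (fs G k y) == maxn x y) && (maxn (maxn x y) (fs G k y) == maxn x y + k)).
Proof. arith x y. Qed.

Lemma isblk_und G k x y : isblk G k (minn x y) (maxn x y) = isblk G k x y.
Proof. rewrite /isblk; case: (leqP x y) => h; lia. Qed.

Lemma fs_inj G k : injective (fs G k).
Proof. move=> x y; rewrite /fs; case: ifP; case: ifP; lia. Qed.

Lemma pairmap_pairE (U : Type) (f : nat -> nat -> U) x s :
  pairmap f x s = map (fun e => f e.1 e.2) (pairmap pair x s).
Proof. by elim: s x => //= y s IH x; rewrite IH. Qed.

Lemma path_lengthsE v p : path_lengths v p = map (fun e => edge_len v e.1 e.2) (edges p).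
Proof. case: p => //= x s; exact: pairmap_pairE. Qed.

Lemma edges_insE G k p : edges (ins G k p) = flatten (map (fun e => exE G k e.1 e.2) (edges p)).
Proof. case: p => //= x s; rewrite edges_ins; exact: congr1 (pairmap_pairE _ _ _). Qed.

Lemma edges_mem p e : e \in edges p -> (e.1 \in p) && (e.2 \in p).
Proof.
case: p => // x s /=; elim: s x => //= y s IH x.
rewrite in_cons => /orP [/eqP -> | /IH /andP [h1 h2]].
  by rewrite /= !in_cons !eqxx !orbT.
by rewrite in_cons h1 orbT in_cons h2 orbT.
Qed.

Lemma minn_mem (T : nat -> bool) a b : T a -> T b -> T (minn a b) && T (maxn a b).
Proof. by move=> ha hb; case: (leqP a b) => h; apply/andP. Qed.

Lemma und_uniq x s : uniq (x :: s) -> uniq (map und (pairmap pair x s)).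
Proof.
elim: s x => //= y s IH x /andP [hx hu].
rewrite IH // andbT; apply/negP => /mapP [e he heq].
have /andP [h1 h2] := edges_mem (p := y :: s) he.
have /andP [m1 m2] := @minn_mem (fun z => z \in y :: s) _ _ h1 h2.
move: heq; rewrite /und /= => -[e1 e2].
rewrite in_cons negb_or in hx; case/andP: hx => hxy hxs.
move: m1 m2; rewrite -e1 -e2; case: (leqP x y) => h.
  by rewrite in_cons (negbTE hxy) (negbTE hxs).
by move=> _; rewrite in_cons (negbTE hxy) (negbTE hxs).
Qed.

Lemma flat_if (T : Type) (P : pred T) (g : T -> nat) c s :
  perm_eq (flatten (map (fun e => if P e then [:: g e; c] else [:: g e]) s)) (map g s ++ nseq (count P s) c).
Proof.
elim: s => //= e s IH; case: (P e) => /=; rewrite perm_cons //.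
rewrite add0n.
rewrite -(perm_cons c) in IH; apply: (perm_trans IH).
by rewrite perm_sym (perm_catCA (map g s) [:: c]).
Qed.

Lemma blk_edge_gen p' G' k' j : all (fun j => (G' - k' + j, G' + j) \in map und (edges p')) (iota 0 k') ->
  j < k' -> exists2 e, e \in edges p' & und e = (G' - k' + j, G' + j).
Proof.
move=> /allP h hj; have := h j; rewrite mem_iota add0n hj => /(_ isT) /mapP [e he ->].
by exists e.
Qed.

Section Main.
Variables (v G k : nat) (p : seq nat).
Hypotheses (Hv : 12 <= v) (Hk : k <= 6) (Hp : perm_eq p (iota 0 v))
  (Hl : all (fun l => (0 < l) && (l <= 6)) (path_lengths v p)) (Hb : blockok v p G k).

Let E := edges p.
Let M := [seq maxn e.1 e.2 | e <- E & isblk G k e.1 e.2].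

Lemma Hk0 : 0 < k. Proof. by case/and5P: Hb. Qed.
Lemma HkG : k <= G. Proof. by case/and5P: Hb. Qed.
Lemma HGv : G + k <= v. Proof. by case/and5P: Hb. Qed.
Lemma HbE : all (fun j => (G - k + j, G + j) \in map und E) (iota 0 k). Proof. by case/and5P: Hb. Qed.
Lemma HgE : all (fun e => gE G k e.1 e.2) E. Proof. by case/and5P: Hb. Qed.

Lemma memE e : e \in E -> (e.1 < v) && (e.2 < v).
Proof. by move/edges_mem; rewrite !(perm_mem Hp) !mem_iota. Qed.
Lemma lenE e : e \in E -> 0 < edge_len v e.1 e.2 <= 6.
Proof.
move=> he; move/allP: Hl; apply; rewrite path_lengthsE.
exact: (map_f (fun e => edge_len v e.1 e.2) he).
Qed.
Lemma gEE e : e \in E -> gE G k e.1 e.2.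
Proof. by move=> he; move/allP: HgE; apply. Qed.

Lemma uniqp : uniq p. Proof. by rewrite (perm_uniq Hp) iota_uniq. Qed.
Lemma uniqUE : uniq (map und E).
Proof. by rewrite /E; case: p uniqp => // x s; apply: und_uniq. Qed.

Lemma M_mem z : (z \in M) = (G <= z < G + k).
Proof.
have hkg := HkG; have hgv := HGv; have hk0 := Hk0.
apply/idP/idP.
  by case/mapP => e; rewrite mem_filter => /andP [hb he] ->; move: hb; rewrite /isblk; lia.
move=> hz; have [e he hu] := blk_edge_gen (j := z - G) HbE (ltac:(lia)).
move: hu; rewrite /und => -[h1 h2].
apply/mapP; exists e; last by rewrite h2; lia.
by rewrite mem_filter he andbT /isblk h1 h2; lia.
Qed.

Lemma M_uniq : uniq M.
Proof.
have -> : M = map snd (filter (fun e => isblk G k e.1 e.2) (map und E)).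
  rewrite filter_map -map_comp /M; apply: congr1; apply: eq_filter => e /=; by rewrite isblk_und.
have le_und : forall e, e \in map und E -> e.1 <= e.2 by move=> e /mapP [e' _ ->] /=; lia.
rewrite map_inj_in_uniq; first by rewrite filter_uniq // uniqUE.
move=> [a1 b1] [a2 b2]; rewrite !mem_filter /= => /andP [p1 /le_und /= l1] /andP [p2 /le_und /= l2] eq.
move: p1 p2; rewrite /isblk /= => p1 p2.
have -> : a1 = a2 by lia.
by rewrite eq.
Qed.

Lemma M_perm : perm_eq M (iota G k).
Proof. apply: uniq_perm; [exact: M_uniq | exact: iota_uniq | by move=> z; rewrite M_mem mem_iota]. Qed.

Lemma cnt : count (fun e => isblk G k e.1 e.2) E = k.
Proof. by rewrite -size_filter -(size_map (fun e => maxn e.1 e.2)) (perm_size M_perm) size_iota. Qed.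

Lemma ins_perm' q : perm_eq (ins G k q) (map (fs G k) q ++ [seq maxn e.1 e.2 | e <- edges q & isblk G k e.1 e.2]).
Proof. by case: q => //= x s; apply: ins_perm. Qed.

Lemma ins_ham : perm_eq (ins G k p) (iota 0 (v + k)).
Proof.
have hkg := HkG; have hgv := HGv; have hk0 := Hk0.
apply: (perm_trans (ins_perm' p)); apply: uniq_perm; last first.
- move=> z; rewrite mem_cat M_mem mem_iota add0n; apply/idP/idP.
    case/orP => [/mapP [x hx ->] | ?]; last lia.
    by move: hx; rewrite (perm_mem Hp) mem_iota /fs; case: ifP; lia.
  move=> hz; case: (ltnP z G) => h1.
    apply/orP; left; apply/mapP; exists z; first by rewrite (perm_mem Hp) mem_iota; lia.
    by rewrite /fs h1.
  case: (ltnP z (G + k)) => h2; first by apply/orP; right; lia.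
  apply/orP; left; apply/mapP; exists (z - k); first by rewrite (perm_mem Hp) mem_iota; lia.
  by rewrite /fs; case: ifP; lia.
- exact: iota_uniq.
rewrite cat_uniq M_uniq andbT (map_inj_uniq (@fs_inj G k)) uniqp /=.
apply/hasPn => z; rewrite M_mem => hz; apply/negP => /mapP [x _ hx].
by move: hz; rewrite hx /fs; case: ifP; lia.
Qed.

Lemma ins_len : perm_eq (path_lengths (v + k) (ins G k p)) (path_lengths v p ++ nseq k k).
Proof.
rewrite !path_lengthsE edges_insE map_flatten -map_comp.
have eqF : {in E, (map (fun e => edge_len (v + k) e.1 e.2) \o (fun e => exE G k e.1 e.2)) =1
   (fun e => if isblk G k e.1 e.2 then [:: edge_len v e.1 e.2; k] else [:: edge_len v e.1 e.2])}.
  move=> [x y] he /=; have /andP [hx hy] := memE he; have hl := lenE he; have hg := gEE he.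
  rewrite /exE; case: ifP => hb /=.
    by have [h1 h2 h3] := L1 Hk0 Hk HkG HGv Hv hx hy hb; rewrite h1 h2 h3.
  by rewrite (L2 Hk0 Hk HkG HGv Hv hx hy hl hg (negbT hb)).
rewrite (proj1 (eq_in_map _ _ _) eqF).
have := flat_if (fun e => isblk G k e.1 e.2) (fun e => edge_len v e.1 e.2) k E.
by rewrite cnt.
Qed.

Lemma mem_edges_ins e e' : e \in E -> e' \in exE G k e.1 e.2 -> e' \in edges (ins G k p).
Proof. by move=> he he'; rewrite edges_insE; apply/flatten_mapP; exists e. Qed.

Lemma ins_self : blockok (v + k) (ins G k p) (G + k) k.
Proof.
have hkg := HkG; have hgv := HGv; have hk0 := Hk0.
apply/and5P; split => //; try lia.
- apply/allP => j; rewrite mem_iota add0n => hj.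
  have [[x y] he hu] := blk_edge_gen HbE hj.
  have hb : isblk G k x y by move: hu; rewrite /und /isblk /= => -[-> ->]; lia.
  have hm : maxn x y = G + j by move: hu; rewrite /und => -[_ ->].
  have := L8 HkG hb; case/orP => /andP [/eqP h1 /eqP h2]; apply/mapP.
    exists (fs G k x, maxn x y); last by rewrite /und /= h1 h2 hm; congr pair; lia.
    by apply: (mem_edges_ins he); rewrite /exE hb in_cons eqxx.
  exists (maxn x y, fs G k y); last by rewrite /und /= h1 h2 hm; congr pair; lia.
  by apply: (mem_edges_ins he); rewrite /exE hb !in_cons eqxx orbT.
- apply/allP => e'; rewrite edges_insE => /flatten_mapP [[x y] he]. 
  have /andP [hx hy] := memE he; have hl := lenE he; have hg := gEE he.
  rewrite /exE /=; case: ifP => hb.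
    have /andP [g1 g2] := L4 Hk0 Hk HkG HGv Hv hx hy hb.
    by rewrite !in_cons in_nil orbF => /orP [] /eqP ->.
  rewrite in_cons in_nil orbF => /eqP -> /=.
  exact: (L3 Hk0 Hk HkG HGv Hv hx hy hl hg (negbT hb)).
Qed.

Lemma ins_other H k' : k' <= 6 -> sepb G H (maxn k k') -> blockok v p H k' ->
  blockok (v + k) (ins G k p) (shift G k H) k'.
Proof.
have hkg := HkG; have hgv := HGv; have hk0 := Hk0.
move=> hk' hs /and5P [h0 h1 h2 h3 h4].
apply/and5P; split => //; try (rewrite /shift /fs; case: ifP; lia).
- apply/allP => j; rewrite mem_iota add0n => hj.
  have [[x y] he hu] := blk_edge_gen h3 hj.
  move: hu; rewrite /und /= => -[u1 u2].
  have [hb [w1 w2]] := L7 Hk0 Hk HkG HGv Hv h0 hk' h1 hj hs u1 u2.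
  apply/mapP; exists (fs G k x, fs G k y); last by rewrite /und /= w1 w2.
  by apply: (mem_edges_ins he); rewrite /exE (negbTE hb) in_cons eqxx.
- apply/allP => e'; rewrite edges_insE => /flatten_mapP [[x y] he].
  have /andP [hx hy] := memE he; have hl := lenE he; have hg := gEE he.
  have hg' : gE H k' x y by exact: (allP h4 (x, y) he).
  rewrite /exE /=; case: ifP => hb.
    have /andP [g1 g2] := L5 Hk0 Hk HkG HGv Hv hx hy h0 hk' hs hb.
    by rewrite !in_cons in_nil orbF => /orP [] /eqP ->.
  rewrite in_cons in_nil orbF => /eqP -> /=.
  exact: (L6 Hk0 Hk HkG HGv Hv hx hy h0 hk' hs hl hg hg' (negbT hb)).
Qed.
End Main.

Lemma eqadj (f : nat -> nat) x s :
  count id (pairmap (fun a b => f a == f b) x s) + size (undup (map f (x :: s))) <= (size s).+1.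
Proof.
elim: s x => [|y s IH] x /=; first by [].
have := IH y; rewrite /=.
case: ifP => hy; case: ifP => hx; case: eqP => hxy /=; try lia.
all: try by move: hx; rewrite in_cons hxy eqxx.

Qed.

Lemma len_mod v d x y : d %| v -> x < v -> y < v -> d %| edge_len v x y -> x %% d = y %% d.
Proof.
move=> dv hx hy; rewrite /edge_len.
set D := maxn x y - minn x y.
have hD : D <= v by rewrite /D; lia.
have key : d %| D -> x %% d = y %% d.
  rewrite /D; case: (leqP x y) => h.
    by rewrite -eqn_mod_dvd // => /eqP.
  by rewrite -eqn_mod_dvd ?(ltnW h) // => /eqP.
case: (leqP D (v - D)) => h.
  by apply: key.
move=> hd; apply: key.
have -> : D = v - (v - D) by lia.
exact: dvdn_sub.
Qed.

Lemma cnt_mono v d x s : d %| v -> all (fun z => z < v) (x :: s) ->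
  count (fun l => d %| l) (pairmap (edge_len v) x s) <= count id (pairmap (fun a b => a %% d == b %% d) x s).
Proof.
move=> dv; elim: s x => [|y s IH] x; first by [].
move=> /= /and3P [hx hy hs].
have := IH y; rewrite /= hy hs => /(_ isT) h.
have [hd|hd] := boolP (d %| edge_len v x y); last by rewrite /=; lia.
by rewrite (len_mod dv hx hy hd) eqxx /=; lia.
Qed.

Lemma necessity v p L d : 0 < v -> perm_eq p (iota 0 v) -> perm_eq (path_lengths v p) L ->
  d %| v -> count (fun x => d %| x) L <= v - d.
Proof.
move=> v0 Hp Hl dv.
rewrite -(permP Hl).
have dv' : d <= v := dvdn_leq v0 dv.
have d0 : 0 < d by case: d dv {dv'} => // ; rewrite dvd0n; lia.
case: p Hp Hl => [|x s] Hp Hl; first by have := perm_size Hp; rewrite size_iota /=; lia.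
have hall : all (fun z => z < v) (x :: s) by apply/allP => z; rewrite (perm_mem Hp) mem_iota.
have h1 := cnt_mono dv hall.
have h2 : count id (pairmap (fun a b => a %% d == b %% d) x s) + size (undup (map (fun z => z %% d) (x :: s))) <= (size s).+1 := eqadj (fun z => z %% d) x s.
have h3 : size (iota 0 d) <= size (undup (map (fun z => z %% d) (x :: s))).
  apply: uniq_leq_size; first exact: iota_uniq.
  move=> i; rewrite mem_iota add0n => hi; rewrite mem_undup.
  apply/mapP; exists i; last by rewrite (modn_small hi).
  by rewrite (perm_mem Hp) mem_iota; lia.
rewrite size_iota in h3.
have h4 : (size s).+1 = v by have := perm_size Hp; rewrite size_iota.
rewrite /=; apply: (leq_trans h1); lia.
Qed.

Definition flags v a b c p G1 G2 G6 :=
  [&& (9 <= a) ==> blockok v p G1 1, (10 <= b) ==> blockok v p G2 2, (9 <= c) ==> blockok v p G6 6,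
      (9 <= a) && (10 <= b) ==> sepb G1 G2 2, (9 <= a) && (9 <= c) ==> sepb G1 G6 6
    & (10 <= b) && (9 <= c) ==> sepb G2 G6 6].

Definition Good a b c := exists p G1 G2 G6,
  [/\ perm_eq p (iota 0 (a + b + c + 1)), perm_eq (path_lengths (a + b + c + 1) p) (L126 a b c)
    & flags (a + b + c + 1) a b c p G1 G2 G6].

Lemma sep_sym G H m : sepb G H m = sepb H G m.
Proof. by rewrite /sepb orbC. Qed.
Lemma sep_self G k H m : 0 < m -> sepb G H m -> sepb (G + k) (shift G k H) m.
Proof. rewrite /sepb /shift /fs; case: ifP; lia. Qed.
Lemma sep_shift G k H1 H2 m : sepb H1 H2 m -> sepb (shift G k H1) (shift G k H2) m.
Proof. rewrite /sepb /shift /fs; case: ifP; case: ifP; lia. Qed.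

Lemma L126_all a b c : all (fun l => (0 < l) && (l <= 6)) (L126 a b c).
Proof. by rewrite /L126 !all_cat !all_nseq /= !orbT. Qed.

Lemma L126_perm1 a b c : perm_eq (L126 a b c ++ nseq 1 1) (L126 a.+1 b c).
Proof. apply/permP => P; rewrite /L126 !count_cat !count_nseq; lia. Qed.
Lemma L126_perm2 a b c : perm_eq (L126 a b c ++ nseq 2 2) (L126 a b.+2 c).
Proof. apply/permP => P; rewrite /L126 !count_cat !count_nseq; lia. Qed.
Lemma L126_perm6 a b c : perm_eq (L126 a b c ++ nseq 6 6) (L126 a b (c + 6)).
Proof. apply/permP => P; rewrite /L126 !count_cat !count_nseq; lia. Qed.

Lemma step_a a b c : 9 <= a -> 1 <= b -> 1 <= c -> Good a b c -> Good a.+1 b c.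
Proof.
move=> ha hb hc [p [G1 [G2 [G6 [Hp Hl Hf]]]]].
set v := a + b + c + 1 in Hp Hl Hf.
have hv : 12 <= v by rewrite /v; lia.
have Hall : all (fun l => (0 < l) && (l <= 6)) (path_lengths v p) by rewrite (perm_all _ Hl) L126_all.
move: Hf => /and5P [f1 f2 f3 f4 /andP [f5 f6]].
rewrite ha /= in f1 f4 f5.
exists (ins G1 1 p), (G1 + 1), (shift G1 1 G2), (shift G1 1 G6).
have -> : a.+1 + b + c + 1 = v + 1 by rewrite /v; lia.
split.
- by apply: ins_ham.
- apply: perm_trans (ins_len _ _ _ _ _) _ => //.
  exact: perm_trans (perm_cat Hl (perm_refl _)) (L126_perm1 a b c).
- have ha' : 9 <= a.+1 by lia.
  rewrite /flags ha' /=; apply/and5P; split.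
  + by apply: ins_self.
  + apply/implyP => h; apply: ins_other => //; [exact: (implyP f4 h) | exact: (implyP f2 h)].
  + apply/implyP => h; apply: ins_other => //; [exact: (implyP f5 h) | exact: (implyP f3 h)].
  + apply/implyP => h; apply: sep_self => //; exact: (implyP f4 h).
  + apply/andP; split; apply/implyP => h.
      apply: sep_self => //; exact: (implyP f5 h).
    apply: sep_shift; exact: (implyP f6 h).
Qed.

Lemma step_b a b c : 10 <= b -> 1 <= a -> 1 <= c -> Good a b c -> Good a b.+2 c.
Proof.
move=> hb ha hc [p [G1 [G2 [G6 [Hp Hl Hf]]]]].
set v := a + b + c + 1 in Hp Hl Hf.
have hv : 12 <= v by rewrite /v; lia.
have Hall : all (fun l => (0 < l) && (l <= 6)) (path_lengths v p) by rewrite (perm_all _ Hl) L126_all.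
move: Hf => /and5P [f1 f2 f3 f4 /andP [f5 f6]].
rewrite hb /= andbT in f2 f4 f6.
exists (ins G2 2 p), (shift G2 2 G1), (G2 + 2), (shift G2 2 G6).
have -> : a + b.+2 + c + 1 = v + 2 by rewrite /v; lia.
split.
- by apply: ins_ham.
- apply: perm_trans (ins_len _ _ _ _ _) _ => //.
  exact: perm_trans (perm_cat Hl (perm_refl _)) (L126_perm2 a b c).
- have hb' : 10 <= b.+2 by lia.
  rewrite /flags hb' /= andbT; apply/and5P; split.
  + apply/implyP => h; apply: ins_other => //; [rewrite sep_sym; exact: (implyP f4 h) | exact: (implyP f1 h)].
  + by apply: ins_self.
  + apply/implyP => h; apply: ins_other => //; [exact: (implyP f6 h) | exact: (implyP f3 h)].
  + apply/implyP => h; rewrite sep_sym; apply: sep_self => //; rewrite sep_sym; exact: (implyP f4 h).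
  + apply/andP; split; apply/implyP => h.
      apply: sep_shift; exact: (implyP f5 h).
    apply: sep_self => //; exact: (implyP f6 h).
Qed.

Lemma step_c a b c : 9 <= c -> 1 <= a -> 1 <= b -> Good a b c -> Good a b (c + 6).
Proof.
move=> hc ha hb [p [G1 [G2 [G6 [Hp Hl Hf]]]]].
set v := a + b + c + 1 in Hp Hl Hf.
have hv : 12 <= v by rewrite /v; lia.
have Hall : all (fun l => (0 < l) && (l <= 6)) (path_lengths v p) by rewrite (perm_all _ Hl) L126_all.
move: Hf => /and5P [f1 f2 f3 f4 /andP [f5 f6]].
rewrite hc /= !andbT in f3 f5 f6.
exists (ins G6 6 p), (shift G6 6 G1), (shift G6 6 G2), (G6 + 6).
have -> : a + b + (c + 6) + 1 = v + 6 by rewrite /v; lia.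
split.
- by apply: ins_ham.
- apply: perm_trans (ins_len _ _ _ _ _) _ => //.
  exact: perm_trans (perm_cat Hl (perm_refl _)) (L126_perm6 a b c).
- have hc' : 9 <= c + 6 by lia.
  rewrite /flags hc' /= !andbT; apply/and5P; split.
  + apply/implyP => h; apply: ins_other => //; [rewrite sep_sym; exact: (implyP f5 h) | exact: (implyP f1 h)].
  + apply/implyP => h; apply: ins_other => //; [rewrite sep_sym; exact: (implyP f6 h) | exact: (implyP f2 h)].
  + by apply: ins_self.
  + apply/implyP => h; apply: sep_shift; exact: (implyP f4 h).
  + apply/andP; split; apply/implyP => h.
      rewrite sep_sym; apply: sep_self => //; rewrite sep_sym; exact: (implyP f5 h).
    rewrite sep_sym; apply: sep_self => //; rewrite sep_sym; exact: (implyP f6 h).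
Qed.

Definition table : seq (nat * nat * nat * (seq nat * nat * nat * nat)) := [::
  ((9,10,9),([::5;11;10;4;6;12;18;20;19;17;16;14;8;7;13;15;9;3;2;1;24;26;28;0;27;25;23;22;21],2,19,9));
 ((9,10,10),([::20;22;23;29;0;28;27;26;24;25;1;2;4;6;8;14;13;7;9;15;21;19;18;12;10;16;17;11;5;3],23,5,13));
 ((9,10,11),([::9;10;4;2;3;5;30;1;7;8;6;0;29;28;27;26;20;18;24;23;17;15;21;22;16;14;12;11;13;19;25],27,13,21));
 ((9,10,12),([::10;9;15;21;22;16;14;20;19;13;7;8;6;12;18;17;11;5;4;3;1;27;25;23;24;26;28;2;0;30;29;31],4,27,17));
 ((9,10,13),([::18;12;13;19;17;11;9;7;1;28;27;25;26;24;23;21;15;14;20;22;16;10;8;2;0;6;5;32;31;29;30;3;4],28,10,17));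
 ((9,10,14),([::10;8;6;7;9;11;12;14;20;21;15;17;23;22;16;18;24;26;28;0;1;29;30;2;3;31;32;4;5;33;27;25;19;13],12,8,20));
 ((9,11,9),([::4;6;12;10;16;17;23;25;19;18;24;26;20;22;28;29;0;2;1;3;5;7;8;9;11;13;14;15;21;27],29,5,23));
 ((9,11,10),([::29;28;27;21;19;17;11;10;16;14;8;9;15;13;7;1;3;4;2;0;30;5;6;12;18;20;22;23;25;26;24],28,19,12));
 ((9,11,11),([::0;1;27;21;19;17;18;16;15;13;11;5;4;2;3;29;23;25;31;30;24;22;28;26;20;14;12;6;7;8;10;9],5,13,26));
 ((9,11,12),([::27;29;28;26;32;30;3;4;5;11;17;19;21;23;24;25;31;0;1;2;8;14;16;10;9;15;13;7;6;12;18;20;22],24,22,12));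
 ((9,11,13),([::28;26;24;18;12;6;7;13;14;8;2;4;10;11;5;3;9;15;21;19;20;22;16;17;23;25;27;29;31;30;32;33;0;1],1,25,8));
 ((9,11,14),([::24;18;20;26;25;19;21;27;28;29;31;32;30;1;3;2;8;7;9;10;4;33;34;5;11;13;15;17;23;22;16;14;12;6;0],29,13,22));
 ((1,10,9),([::2;0;15;17;19;13;7;8;14;12;6;4;10;16;18;20;1;3;9;11;5],0,2,9));
 ((1,10,10),([::5;11;13;7;1;3;9;15;17;19;21;20;18;16;14;8;2;0;6;12;10;4],0,17,10));
 ((1,10,11),([::13;15;17;19;2;8;10;4;21;0;6;12;11;5;22;1;7;9;3;20;18;16;14],0,17,6));
 ((1,10,12),([::14;20;2;4;10;16;22;0;18;12;6;8;7;5;3;1;23;21;15;9;11;17;19;13],0,3,16));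
 ((1,10,13),([::0;6;12;14;20;19;17;23;4;10;8;2;21;15;13;11;5;3;9;7;1;24;22;16;18],0,14,7));
 ((1,10,14),([::11;5;3;1;25;23;21;15;9;7;13;19;17;16;10;4;2;22;24;18;12;6;8;14;20;0],0,3,11));
 ((1,11,9),([::2;0;20;18;16;10;4;6;12;14;8;7;13;15;9;3;1;21;19;17;11;5],0,2,9));
 ((1,11,10),([::18;12;6;4;10;8;2;0;21;15;17;19;20;14;16;22;1;3;9;11;5;7;13],0,2,8));
 ((1,11,11),([::15;21;23;17;11;13;19;1;3;5;7;9;10;8;2;4;6;0;18;12;14;20;22;16],0,9,17));
 ((1,11,12),([::23;0;2;8;14;16;10;4;6;12;13;7;5;11;17;19;21;15;9;3;1;24;18;20;22],0,2,8));
 ((1,11,13),([::3;1;25;23;21;15;9;7;13;19;17;11;5;6;12;18;16;10;8;14;20;0;24;22;2;4],0,3,11));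
 ((1,11,14),([::2;8;10;4;5;11;17;19;25;23;21;0;6;12;14;16;18;20;26;1;7;13;15;9;3;24;22],0,19,7));
 ((2,10,9),([::11;17;1;21;15;9;7;6;8;10;16;18;12;14;20;0;2;4;5;3;19;13],0,9,16));
 ((2,10,10),([::8;2;3;9;15;17;19;21;0;1;7;13;11;5;22;20;18;16;10;4;6;12;14],0,19,7));
 ((2,10,11),([::9;11;13;19;21;15;14;20;18;12;10;4;2;8;6;0;22;16;17;23;5;3;1;7],0,12,18));
 ((2,10,12),([::12;18;17;11;9;15;21;19;13;7;5;3;1;24;23;4;2;0;6;8;14;20;22;16;10],0,7,15));
 ((2,10,13),([::19;13;14;20;0;6;8;10;12;18;24;4;2;22;16;15;21;23;17;11;9;7;5;25;1;3],0,10,19));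
 ((2,10,14),([::4;6;7;13;19;25;0;2;23;21;15;9;8;14;16;10;12;18;24;26;20;22;1;3;5;11;17],0,5,13));
 ((2,11,9),([::15;21;20;14;16;22;0;2;4;6;8;10;12;18;1;7;5;3;9;11;17;19;13],0,11,17));
 ((2,11,10),([::6;0;18;16;14;12;13;15;17;19;21;23;5;11;9;3;1;7;8;2;20;22;4;10],0,17,6));
 ((2,11,11),([::17;23;21;15;14;20;1;3;5;7;9;8;10;16;22;24;18;12;6;4;2;0;19;13;11],0,2,18));
 ((2,11,12),([::10;16;18;19;17;11;5;3;9;15;13;7;1;25;23;21;22;20;0;24;4;6;12;14;8;2],0,18,11));
 ((2,11,13),([::23;21;19;13;7;5;11;17;15;16;14;8;2;0;25;4;10;9;3;24;26;1;22;20;18;12;6],0,22,9));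
 ((2,11,14),([::14;20;22;24;25;27;5;11;17;19;21;23;1;3;9;15;13;7;6;12;18;16;10;4;26;0;2;8],0,22,8));
 ((3,10,9),([::12;6;4;10;9;3;20;22;1;0;21;19;2;8;14;16;18;17;15;13;7;5;11],0,17,9));
 ((3,10,10),([::19;13;15;21;22;16;10;11;17;23;1;3;5;7;9;8;14;20;18;12;6;4;2;0],0,2,17));
 ((3,10,11),([::20;18;17;19;21;23;4;10;12;6;0;1;7;9;3;22;24;5;11;13;15;16;14;8;2],0,19,7));
 ((3,10,12),([::1;2;3;5;11;9;7;13;15;21;23;17;19;25;0;20;14;8;10;12;6;4;24;18;16;22],0,5,20));
 ((3,10,13),([::6;4;2;3;24;18;16;22;1;7;9;8;10;12;14;20;26;0;21;15;17;23;25;19;13;11;5],0,13,21));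
 ((3,10,14),([::11;5;3;9;10;4;26;0;6;12;14;8;2;24;22;23;1;7;13;15;17;19;25;27;21;20;18;16],0,18,6));
 ((3,11,9),([::4;2;1;23;0;22;16;10;12;18;20;14;8;6;7;5;3;21;15;13;19;17;11;9],0,4,16));
 ((3,11,10),([::19;13;14;20;1;3;5;7;8;10;12;6;4;2;0;23;17;11;9;15;21;22;16;18;24],0,3,19));
 ((3,11,11),([::7;13;12;6;8;14;20;18;19;17;11;5;3;1;25;23;21;15;9;10;16;22;24;4;2;0],0,23,11));
 ((3,11,12),([::8;9;15;21;0;25;19;13;11;17;23;2;4;10;16;18;12;14;20;22;24;26;1;3;5;6;7],0,3,15));
 ((3,11,13),([::18;12;13;19;17;11;9;7;5;3;1;23;24;2;0;22;16;10;8;6;4;26;20;14;15;21;27;25],0,5,16));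
 ((3,11,14),([::23;22;28;1;3;5;11;17;18;24;26;20;21;15;9;7;13;19;25;27;0;2;4;10;16;14;8;6;12],0,4,11));
 ((4,10,9),([::1;3;5;7;13;14;8;9;15;21;23;0;2;4;6;12;18;20;22;16;10;11;17;19],0,2,13));
 ((4,10,10),([::18;16;14;8;6;12;10;4;2;0;19;20;21;22;24;23;17;11;5;7;13;15;9;3;1],0,3,9));
 ((4,10,11),([::7;8;10;12;11;9;3;23;17;15;21;19;13;14;20;22;16;18;24;4;2;0;6;5;25;1],0,10,19));
 ((4,10,12),([::19;13;11;5;7;9;10;16;22;20;14;8;6;12;18;24;26;25;0;1;3;4;2;23;17;15;21],0,3,18));
 ((4,10,13),([::20;19;13;11;17;15;9;8;14;16;10;4;2;0;6;12;18;24;26;27;5;7;1;3;25;23;21;22],0,25,14));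
 ((4,10,14),([::27;25;23;17;11;5;4;2;0;6;12;13;7;8;14;20;22;24;1;28;26;3;9;15;21;19;18;16;10],0,24,11));
 ((4,11,9),([::9;15;13;7;6;4;2;1;24;0;23;21;19;17;11;12;18;20;14;8;10;16;22;3;5],0,4,13));
 ((4,11,10),([::8;2;3;9;7;1;0;6;12;14;20;22;16;18;24;25;23;21;19;17;15;13;11;5;4;10],0,13,7));
 ((4,11,11),([::11;5;4;3;24;22;20;18;12;6;0;2;8;14;16;10;9;15;13;7;1;26;25;23;21;19;17],0,22,11));
 ((4,11,12),([::10;16;15;9;7;13;14;8;6;4;5;27;25;3;1;23;21;19;17;11;12;18;20;26;24;2;0;22],0,19,13));
 ((4,11,13),([::14;20;21;15;13;7;8;10;4;2;1;3;9;11;5;28;26;24;18;16;22;23;17;19;25;27;0;6;12],0,26,20));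
 ((4,11,14),([::11;9;8;10;12;13;19;25;1;3;27;21;22;28;0;24;18;16;14;20;26;2;4;6;7;5;29;23;17;15],0,10,23));
 ((5,10,9),([::2;3;1;7;13;12;6;0;24;22;20;18;16;10;8;14;15;9;11;17;19;21;23;4;5],0,20,12));
 ((5,10,10),([::13;19;18;12;14;20;22;24;4;10;16;17;11;5;6;8;7;9;15;21;23;25;1;3;2;0],0,23,16));
 ((5,10,11),([::21;15;16;22;24;18;17;23;2;4;10;8;7;9;11;13;19;25;0;1;26;20;14;12;6;5;3],0,4,19));
 ((5,10,12),([::15;13;7;6;12;10;4;2;8;14;16;17;19;21;23;1;0;22;24;25;3;9;11;5;27;26;20;18],0,20,9));
 ((5,10,13),([::1;2;4;10;8;7;9;3;26;20;21;27;28;5;11;13;15;17;23;25;19;18;24;22;16;14;12;6;0],0,14,22));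
 ((5,10,14),([::17;23;25;27;28;29;0;2;3;1;7;5;11;13;19;21;15;9;8;14;20;22;16;10;4;6;12;18;24;26],0,25,18));
 ((5,11,9),([::10;16;14;8;2;0;1;25;5;3;4;6;7;13;19;21;23;24;22;20;18;12;11;17;15;9],0,22,13));
 ((5,11,10),([::7;13;19;25;24;23;21;22;20;18;12;6;4;2;0;26;1;3;5;11;17;15;9;8;14;16;10],0,5,13));
 ((5,11,11),([::13;12;10;8;2;0;27;25;19;18;24;26;4;6;7;1;3;5;11;9;15;21;23;17;16;22;20;14],0,26,20));
 ((5,11,12),([::21;23;0;2;3;9;15;17;18;16;14;8;6;12;10;4;27;26;25;19;20;22;24;1;28;5;11;13;7],0,17,10));
 ((5,11,13),([::0;1;2;8;14;13;15;21;23;17;19;25;27;29;5;11;12;10;16;22;24;18;20;26;28;4;6;7;9;3],0,28,21));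
 ((5,11,14),([::20;26;24;18;17;23;29;0;6;4;2;8;9;3;1;7;5;30;28;22;16;15;14;12;10;11;13;19;25;27;21],0,12,22));
 ((6,10,9),([::16;18;12;14;15;17;19;13;11;5;3;9;10;4;24;22;20;21;23;25;0;6;7;1;2;8],0,24,6));
 ((6,10,10),([::14;8;2;3;9;10;4;5;11;17;19;21;22;20;18;16;15;13;7;1;26;24;23;25;0;6;12],0,18,9));
 ((6,10,11),([::7;13;14;8;9;15;17;23;21;22;24;18;16;10;4;2;0;6;12;11;5;3;1;27;25;26;20;19],0,17,11));
 ((6,10,12),([::23;17;16;22;20;14;12;18;19;13;7;5;28;27;21;15;9;11;10;8;6;4;3;1;24;26;25;2;0],0,6,18));
 ((6,10,13),([::21;15;16;22;28;0;2;4;3;1;25;23;29;27;26;24;18;12;6;5;7;13;19;20;14;8;10;9;11;17],0,3,17));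
 ((6,10,14),([::19;13;12;18;17;11;9;15;16;10;4;5;7;1;3;28;26;25;27;2;0;6;8;14;20;22;24;30;29;23;21],0,23,15));
 ((6,11,9),([::11;5;4;25;23;17;18;24;26;0;2;1;3;9;7;6;8;10;12;14;20;22;16;15;21;19;13],0,25,19));
 ((6,11,10),([::22;24;2;3;5;11;17;15;9;8;14;16;10;12;18;19;13;7;6;4;26;0;1;27;25;23;21;20],0,23,13));
 ((6,11,11),([::4;5;6;7;9;15;14;8;2;3;26;28;1;24;22;16;10;12;18;20;21;19;13;11;17;23;25;27;0],0,24,14));
 ((6,11,12),([::10;9;11;17;23;29;0;2;4;6;8;7;5;3;1;25;19;13;14;12;18;24;22;16;15;21;27;28;26;20],0,3,21));
 ((6,11,13),([::17;23;24;18;12;11;13;19;20;14;15;21;22;16;10;4;6;8;2;0;29;27;25;26;28;30;5;7;1;3;9],0,29,18));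
 ((6,11,14),([::16;22;21;15;9;8;14;20;18;12;6;7;13;19;25;27;29;31;30;28;26;24;23;17;11;5;3;1;0;2;4;10],0,27,10));
 ((7,10,9),([::18;12;11;17;19;13;7;8;14;16;10;9;15;21;23;22;20;26;24;25;0;1;3;5;6;4;2],0,5,13));
 ((7,10,10),([::8;14;16;10;9;15;17;11;12;18;20;22;0;26;27;5;6;4;3;1;2;24;25;23;21;19;13;7],0,22,13));
 ((7,10,11),([::24;18;17;23;25;19;20;26;28;22;16;10;8;7;9;11;13;12;14;15;21;27;4;5;3;1;2;0;6],0,9,23));
 ((7,10,12),([::26;25;23;17;15;21;19;13;11;5;6;0;24;22;16;14;20;18;12;10;9;7;8;2;1;29;28;4;3;27],0,24,18));
 ((7,10,13),([::23;25;19;17;15;14;16;18;24;26;28;29;30;5;11;13;7;1;0;6;12;10;4;3;9;8;2;27;21;22;20],0,16,6));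
 ((7,10,14),([::4;2;28;26;24;22;20;19;13;7;8;14;16;10;9;15;21;23;25;31;30;29;27;1;0;6;12;18;17;11;5;3],0,23,14));
 ((7,11,9),([::19;25;27;1;7;8;2;0;6;12;14;16;18;17;15;13;11;5;3;9;10;4;26;24;23;22;21;20],0,17,6));
 ((7,11,10),([::10;8;9;11;13;19;20;14;12;6;4;5;28;26;27;25;24;18;16;22;21;15;17;23;0;2;3;1;7],0,13,19));
 ((7,11,11),([::29;27;26;24;18;12;6;8;14;13;7;1;25;23;21;22;20;19;17;11;10;16;15;9;3;5;4;2;0;28],0,25,12));
 ((7,11,12),([::19;13;7;5;11;17;16;10;8;14;12;6;4;2;0;29;28;27;26;25;23;22;21;15;9;3;1;30;24;18;20],0,2,12));
 ((7,11,13),([::8;6;7;9;11;10;12;13;15;21;27;1;31;25;19;18;24;30;28;29;3;5;4;2;0;26;20;14;16;22;23;17],0,8,22));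
 ((7,11,14),([::31;4;5;3;2;0;6;8;14;20;26;25;19;13;15;21;22;16;10;12;18;17;11;9;7;1;32;30;28;27;29;23;24],0,8,16));
 ((8,10,9),([::7;9;11;12;10;8;2;0;1;3;4;6;5;27;26;20;14;13;15;21;22;16;18;24;25;19;17;23],0,9,20));
 ((8,10,10),([::13;19;17;11;12;18;20;21;15;9;3;4;10;16;14;8;7;6;5;28;1;2;0;27;25;23;22;24;26],0,26,14));
 ((8,10,11),([::6;12;10;8;7;9;15;17;23;25;19;18;24;26;20;21;27;3;5;11;13;14;16;22;28;29;0;1;2;4],0,4,22));
 ((8,10,12),([::5;11;12;6;0;2;8;7;1;26;27;25;23;21;15;14;13;19;17;16;18;20;22;24;30;28;29;4;10;9;3],0,24,7));
 ((8,10,13),([::3;2;1;0;26;20;19;25;31;30;24;18;12;10;8;6;4;5;7;9;11;13;14;16;22;28;27;21;15;17;23;29],0,11,25));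
 ((8,10,14),([::0;31;25;19;21;27;29;23;24;30;28;22;20;26;32;5;6;4;10;12;13;14;15;16;18;17;11;9;3;1;7;8;2],0,11,25));
 ((8,11,9),([::7;13;15;9;8;14;20;22;28;1;2;0;27;25;26;24;23;21;19;17;11;10;16;18;12;6;5;4;3],0,22,13));
 ((8,11,10),([::25;27;3;9;11;5;4;10;12;6;0;28;29;1;7;8;2;26;24;23;22;20;18;17;16;14;15;13;19;21],0,20,6));
 ((8,11,11),([::17;15;9;7;13;12;6;5;11;10;4;29;0;2;1;3;28;30;24;22;23;21;20;26;27;25;19;18;16;14;8],0,17,10));
 ((8,11,12),([::19;25;23;17;11;9;10;4;3;1;7;8;2;0;30;28;29;31;5;6;12;13;15;14;16;22;24;18;20;26;27;21],0,30,22));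
 ((8,11,13),([::7;5;3;2;4;6;8;10;12;18;16;15;9;11;17;23;29;27;21;22;28;1;0;32;26;24;30;31;25;19;20;14;13],0,4,27));
 ((8,11,14),([::29;31;25;24;26;32;30;28;27;33;5;6;12;18;19;21;23;22;20;14;8;7;13;15;9;3;1;0;2;4;10;16;17;11],0,22,12));
 ((9,1,9),([::2;1;15;9;8;14;0;19;18;12;11;17;16;10;4;3;5;6;7;13],2,0,13));
 ((9,1,10),([::12;6;7;13;11;5;4;10;9;3;18;19;20;0;1;16;15;14;8;2;17],16,0,8));
 ((9,1,11),([::8;2;3;9;15;16;10;4;5;11;17;18;19;20;21;0;6;12;14;13;7;1],21,0,7));
 ((9,1,12),([::14;20;21;15;9;3;4;5;6;7;13;19;18;12;11;17;0;1;2;8;10;16;22],1,0,16));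
 ((9,1,13),([::22;21;20;2;3;9;15;14;8;7;6;12;18;16;10;4;5;11;17;23;0;1;19;13],3,0,14));
 ((9,1,14),([::13;7;6;12;18;17;11;5;4;10;16;22;23;24;0;19;21;15;9;8;14;20;1;2;3],3,0,12));
 ((9,2,9),([::13;7;5;11;12;6;4;10;16;17;18;19;20;14;8;9;15;0;1;2;3],3,0,10));
 ((9,2,10),([::12;6;5;11;13;7;1;21;0;16;15;14;8;2;3;9;10;4;20;19;18;17],16,0,7));
 ((9,2,11),([::7;13;12;6;8;14;20;21;19;18;17;11;5;4;10;16;22;0;1;2;3;9;15],2,0,11));
 ((9,2,12),([::16;10;9;15;14;8;7;13;12;6;4;3;21;20;2;1;19;18;0;22;23;17;11;5],4,0,11));
 ((9,2,13),([::14;15;21;2;8;10;4;3;9;11;5;24;0;6;12;13;7;1;20;19;18;17;16;22;23],15,0,7));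
 ((9,2,14),([::1;25;5;11;17;18;12;6;0;2;3;9;15;16;10;4;24;23;22;21;20;19;13;7;8;14],24,0,13));
 ((9,3,9),([::3;9;10;4;20;18;17;19;21;5;11;12;13;14;15;16;0;6;7;1;2;8],14,0,6));
 ((9,3,10),([::2;0;6;8;14;15;9;10;16;17;11;12;18;19;13;7;1;3;4;5;22;21;20],22,0,13));
 ((9,3,11),([::16;15;21;20;22;23;5;11;17;18;19;13;14;12;6;0;1;7;8;2;4;10;9;3],23,0,6));
 ((9,3,12),([::24;22;21;15;9;8;7;6;5;11;17;23;0;19;13;14;20;1;2;3;4;10;16;18;12],3,0,16));
 ((9,3,13),([::18;19;20;21;23;17;16;15;9;3;4;10;12;6;0;1;7;13;14;8;2;22;24;25;5;11],16,0,9));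
 ((9,3,14),([::5;6;7;8;2;23;17;19;25;4;3;9;10;11;12;18;24;26;20;14;13;15;21;0;1;22;16],10,0,21));
 ((9,4,9),([::5;4;6;7;8;9;3;2;1;0;17;11;13;19;18;12;10;16;22;20;14;15;21],1,0,16));
 ((9,4,10),([::18;16;10;9;15;14;8;7;13;12;6;5;23;0;2;20;21;22;4;3;1;19;17;11],6,0,12));
 ((9,4,11),([::16;10;12;18;24;22;20;14;13;19;0;1;2;3;4;5;11;17;23;21;15;9;8;7;6],5,0,16));
 ((9,4,12),([::13;14;20;0;24;18;19;25;1;21;15;17;23;3;4;5;6;12;11;10;9;7;8;2;22;16],14,0,20));
 ((9,4,13),([::1;3;24;26;5;11;17;16;10;4;25;0;2;23;22;21;20;19;18;12;6;7;13;14;8;9;15],19,0,11));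
 ((9,4,14),([::7;6;8;9;15;21;20;14;13;19;25;26;4;2;3;1;0;27;5;11;17;23;22;16;10;12;18;24],26,0,18));
 ((9,5,9),([::13;7;1;0;6;12;10;4;2;3;9;11;5;23;22;21;20;18;19;17;16;15;14;8],22,0,9));
 ((9,5,10),([::6;12;18;17;11;9;15;16;10;4;5;7;13;19;20;21;22;24;23;0;1;3;2;8;14],22,0,13));
 ((9,5,11),([::11;10;9;8;2;0;25;5;6;7;1;3;4;24;18;12;14;20;19;13;15;21;23;17;16;22],10,0,19));
 ((9,5,12),([::21;15;16;22;20;14;12;18;24;3;1;26;0;2;23;17;11;10;9;8;7;6;5;4;25;19;13],5,0,17));
 ((9,5,13),([::22;16;15;14;12;11;10;9;8;6;0;27;21;20;26;4;2;24;18;17;23;1;7;5;3;25;19;13],9,0,22));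
 ((9,5,14),([::9;15;16;10;12;18;19;25;27;0;23;24;1;28;22;21;20;26;3;4;2;8;14;13;7;6;5;11;17],19,0,13));
 ((9,6,9),([::3;9;10;4;6;12;13;19;20;21;22;23;0;2;8;7;1;24;5;11;17;18;16;14;15],20,0,7));
 ((9,6,10),([::16;10;11;17;15;9;7;5;4;3;23;24;0;25;1;2;22;21;20;14;8;6;12;18;19;13],4,0,14));
 ((9,6,11),([::4;10;12;6;7;13;19;17;23;22;21;20;18;24;25;26;5;11;9;3;1;0;2;8;14;15;16],25,0,9));
 ((9,6,12),([::22;16;15;13;19;25;27;21;20;26;0;1;23;17;18;24;2;3;4;5;11;9;10;8;14;12;6;7],4,0,22));
 ((9,6,13),([::26;20;18;24;23;17;11;12;10;9;7;1;0;6;5;28;27;25;19;13;15;21;22;16;14;8;2;3;4],28,0,21));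
 ((9,6,14),([::22;16;14;12;11;5;29;1;2;8;7;6;0;28;4;10;9;3;27;26;20;19;25;24;18;17;23;21;15;13],12,0,21));
 ((9,7,9),([::22;23;3;9;8;2;1;7;6;0;24;25;19;17;15;21;20;18;16;14;13;12;10;4;5;11],14,0,6));
 ((9,7,10),([::24;3;5;26;25;0;1;22;16;17;23;2;4;6;7;9;8;10;11;12;18;19;13;15;21;20;14],12,0,18));
 ((9,7,11),([::12;6;5;11;9;3;4;10;8;2;0;22;23;24;26;20;21;15;14;13;7;1;27;25;19;18;16;17],14,0,7));
 ((9,7,12),([::5;11;13;14;12;10;4;27;26;20;22;16;17;18;19;25;24;23;21;15;9;3;2;8;6;0;28;1;7],27,0,6));
 ((9,7,13),([::10;16;22;28;4;2;26;20;19;25;27;21;23;29;1;0;24;18;12;13;14;15;17;11;9;8;7;6;5;3],9,0,24));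
 ((9,7,14),([::6;4;5;3;9;10;12;11;17;23;25;19;13;7;8;2;1;0;30;29;27;21;15;14;20;26;24;18;16;22;28],30,0,22));
 ((9,8,9),([::8;7;5;4;3;9;10;11;17;19;13;15;21;23;24;25;26;1;2;0;6;12;18;20;14;16;22],25,0,17));
 ((9,8,10),([::7;9;15;21;27;0;26;4;5;6;8;14;16;10;12;18;17;11;13;19;20;22;23;24;25;3;1;2],6,0,14));
 ((9,8,11),([::18;12;11;17;15;9;3;26;28;0;27;4;2;1;24;25;23;22;21;20;19;13;7;5;6;8;14;16;10],21,0,14));
 ((9,8,12),([::10;12;18;19;13;14;20;26;2;4;6;7;8;9;11;17;23;25;24;22;16;15;21;27;3;5;29;28;0;1],8,0,18));
 ((9,8,13),([::0;1;30;29;4;5;7;13;19;21;22;20;26;28;3;2;27;25;24;23;17;11;10;16;18;12;6;8;14;15;9],5,0,13));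
 ((9,8,14),([::6;7;5;4;3;2;1;31;0;30;29;23;17;16;22;28;26;20;14;8;10;12;18;24;25;19;13;11;9;15;21;27],2,0,22));
 ((9,9,9),([::15;9;8;7;6;0;1;27;5;4;2;3;25;26;24;22;23;21;19;13;11;17;16;10;12;18;20;14],9,0,15));
 ((9,9,10),([::23;22;21;20;18;19;17;15;9;10;16;14;8;7;13;11;5;4;2;25;24;1;3;26;28;27;0;6;12],23,0,11));
 ((9,9,11),([::13;14;20;21;15;16;22;28;0;24;18;19;25;23;17;11;9;7;8;10;12;6;5;4;3;1;29;27;26;2],6,0,20));
 ((9,9,12),([::30;28;27;26;20;19;13;12;6;0;29;4;10;11;5;3;9;7;1;2;8;14;15;17;16;18;24;22;21;23;25],27,0,7));
 ((9,9,13),([::15;9;3;1;31;30;29;23;22;21;20;19;13;7;5;11;17;18;12;10;16;14;8;6;0;26;24;25;27;28;2;4],23,0,14));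
 ((9,9,14),([::15;9;3;30;24;22;21;20;18;12;6;4;5;7;13;19;17;11;10;16;14;8;2;1;0;27;28;26;25;23;29;31;32],21,0,13));
 ((9,10,1),([::7;5;4;2;3;1;20;19;0;6;8;10;9;11;12;14;13;15;16;17;18],17,7,0));
 ((9,10,2),([::9;11;10;8;7;6;5;4;3;2;0;16;18;20;19;21;1;17;15;13;12;14],3,10,0));
 ((9,10,3),([::1;0;6;4;3;2;19;20;21;22;5;7;8;9;11;13;15;17;18;16;14;12;10],9,13,0));
 ((9,10,4),([::4;5;3;2;0;22;20;21;15;14;16;18;17;23;1;19;13;12;11;10;8;6;7;9],13,8,0));
 ((9,10,5),([::8;6;12;14;13;19;18;17;15;16;10;11;5;7;9;3;4;2;1;24;0;23;21;20;22],2,22,0));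
 ((9,10,6),([::7;5;4;2;3;1;21;19;17;11;12;6;8;14;13;15;9;10;16;18;20;22;23;24;25;0],5,18,0));
 ((9,10,7),([::21;22;1;0;26;24;3;9;11;10;8;2;23;25;4;6;5;7;13;12;14;15;16;18;20;19;17],22,18,0));
 ((9,10,8),([::10;9;3;5;4;26;25;23;21;15;13;14;12;11;17;16;18;19;20;22;24;2;8;6;0;27;1;7],10,24,0));
 ((9,11,1),([::17;15;13;11;10;9;7;8;6;12;14;16;18;19;20;21;0;1;3;5;4;2],19,3,0));
 ((9,11,2),([::17;15;9;8;6;7;13;11;10;12;14;16;18;19;20;22;21;0;2;1;3;4;5],4,16,0));
 ((9,11,3),([::19;17;15;16;18;20;21;3;1;23;22;4;2;0;6;5;7;8;9;10;11;13;12;14],21,18,0));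
 ((9,11,4),([::16;18;17;19;20;14;15;21;22;23;4;6;12;13;11;9;10;8;7;5;3;1;24;0;2],22,6,0));
 ((9,11,5),([::7;8;9;11;17;19;20;21;23;25;5;3;1;0;6;4;2;22;24;18;16;15;14;13;12;10],9,11,0));
 ((9,11,6),([::15;17;19;18;16;14;13;11;9;7;8;10;12;6;5;4;25;24;3;1;2;23;22;20;26;0;21],5,16,0));
 ((9,11,7),([::1;2;8;7;5;6;4;3;9;11;17;19;20;22;16;18;24;23;25;26;0;27;21;15;13;14;12;10],2,11,0));
 ((9,11,8),([::20;21;19;18;17;15;13;14;8;10;16;22;23;24;25;2;0;1;3;26;28;5;7;9;11;12;6;4;27],25,6,0));
 ((1,1,10),([::5;11;12;6;0;7;1;8;2;4;10;3;9],0,0,6));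
 ((1,1,11),([::11;5;3;9;1;7;13;12;6;0;8;2;10;4],0,0,7));
 ((1,1,12),([::6;12;3;9;0;13;7;1;10;4;5;11;2;8;14],0,0,8));
 ((1,1,13),([::7;1;11;5;15;9;3;13;14;4;10;0;6;8;2;12],0,0,6));
 ((1,1,14),([::6;12;10;4;15;9;3;14;8;2;13;7;1;0;11;5;16],0,0,8));
 ((1,2,9),([::4;10;12;6;0;7;1;8;2;3;9;11;5],0,0,6));
 ((1,2,10),([::3;9;1;7;13;11;5;4;10;12;6;0;8;2],0,0,6));
 ((1,2,11),([::14;8;2;4;10;1;7;13;12;6;0;9;3;5;11],0,0,6));
 ((1,2,12),([::7;13;11;5;15;9;3;1;2;12;6;0;10;4;14;8],0,0,10));
 ((1,2,13),([::11;5;3;9;15;4;10;16;14;8;2;13;7;1;0;6;12],0,0,10));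
 ((1,3,9),([::4;10;8;2;0;12;6;5;11;3;9;1;7;13],0,0,7));
 ((1,3,10),([::12;6;8;14;0;9;3;5;11;2;4;10;1;7;13],0,0,9));
 ((1,3,11),([::10;4;2;12;6;8;14;0;15;9;3;13;7;1;11;5],0,0,9));
 ((1,3,12),([::14;16;10;4;15;0;6;12;1;7;13;2;8;9;3;5;11],0,0,8));
 ((1,3,14),([::4;10;12;6;0;17;18;5;11;13;7;1;14;8;2;15;9;3;16],0,0,7));
 ((1,4,9),([::3;9;11;5;6;12;14;8;2;0;13;7;1;10;4],0,0,8));
 ((1,4,10),([::5;11;13;7;1;3;9;15;14;12;6;0;10;4;2;8],0,0,7));
 ((1,4,11),([::10;4;3;9;11;5;16;1;7;13;2;8;14;12;6;0;15],0,0,6));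
 ((1,4,12),([::9;3;15;13;7;1;17;11;5;4;10;16;14;8;2;0;12;6],0,0,9));
 ((1,4,13),([::6;12;10;4;3;16;18;5;11;17;0;13;7;9;15;2;8;14;1],0,0,10));
 ((1,4,14),([::17;19;5;11;13;7;9;15;1;3;4;18;12;6;0;14;8;2;16;10],0,0,11));
 ((1,5,9),([::5;11;1;15;9;3;13;7;8;14;0;2;4;10;12;6],0,0,9));
 ((1,5,10),([::7;13;11;5;3;9;15;4;10;16;1;0;2;8;14;12;6],0,0,8));
 ((1,5,11),([::13;7;1;3;9;11;5;17;15;16;10;4;2;8;14;12;6;0],0,0,7));
 ((1,5,12),([::17;4;10;11;5;3;9;15;2;8;6;0;13;7;1;18;12;14;16],0,0,6));
 ((1,5,13),([::6;12;14;0;18;16;10;4;2;8;9;3;17;15;1;7;13;19;5;11],0,0,8));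
 ((1,5,14),([::11;5;3;9;10;4;2;8;14;20;18;12;6;0;15;17;19;13;7;1;16],0,0,9));
 ((1,6,9),([::11;5;3;9;15;13;7;1;12;14;16;0;6;8;2;4;10],0,0,6));
 ((1,6,10),([::9;15;17;11;5;3;1;13;7;8;14;16;10;4;2;0;12;6],0,0,12));
 ((1,6,11),([::9;3;4;10;12;6;0;17;11;5;7;13;15;2;8;14;1;18;16],0,0,8));
 ((1,6,12),([::6;12;18;16;10;8;14;0;2;4;3;1;7;13;19;5;11;17;15;9],0,0,13));
 ((1,6,13),([::9;15;17;11;12;18;3;5;20;14;8;6;4;10;16;1;7;13;19;0;2],0,0,13));
 ((1,6,14),([::17;11;9;7;1;3;19;13;15;21;5;4;20;14;8;2;0;6;12;18;16;10],0,0,16));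
 ((1,7,9),([::7;13;15;9;3;5;11;17;1;2;8;10;4;6;12;0;16;14],0,0,8));
 ((1,7,10),([::0;17;4;2;15;9;3;1;7;13;11;5;6;12;14;8;10;16;18],0,0,11));
 ((1,7,11),([::19;5;11;13;7;1;15;9;3;17;16;18;0;2;4;10;12;6;8;14],0,0,9));
 ((1,7,12),([::3;18;12;6;5;20;14;8;10;16;1;7;9;15;17;11;13;19;0;2;4],0,0,15));
 ((1,7,13),([::21;1;7;9;3;19;17;15;13;11;5;6;12;18;2;8;14;20;0;16;10;4],0,0,7));
 ((1,7,14),([::20;14;12;18;19;13;7;9;15;21;4;6;0;17;11;5;3;1;22;16;10;8;2],0,0,15));
 ((1,8,9),([::0;2;8;14;16;10;9;15;13;7;5;3;1;18;12;6;4;17;11],0,0,12));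
 ((1,8,10),([::19;13;11;17;3;5;7;1;15;9;8;14;16;10;12;18;0;6;4;2],0,0,14));
 ((1,8,11),([::2;4;10;12;6;0;15;9;8;14;16;18;20;1;7;13;19;17;11;5;3],0,0,10));
 ((1,8,12),([::9;15;17;11;5;7;13;19;3;1;21;20;18;12;10;16;0;6;4;2;8;14],0,0,14));
 ((1,8,13),([::19;21;20;14;8;6;12;10;4;2;0;17;11;5;22;16;18;1;3;9;15;13;7],0,0,10));
 ((1,8,14),([::21;23;1;7;13;11;5;3;9;15;17;19;18;12;6;0;2;8;14;20;22;16;10;4],0,0,10));
 ((1,9,9),([::1;19;5;11;13;7;9;15;17;3;2;4;10;12;6;0;18;16;14;8],0,0,10));
 ((1,9,10),([::3;9;15;17;11;5;6;12;14;8;10;16;18;20;1;7;13;19;0;2;4],0,0,12));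
 ((1,9,11),([::6;12;18;2;4;20;14;8;10;16;0;21;15;13;19;17;11;9;7;5;3;1],0,0,16));
 ((1,9,12),([::3;9;11;5;4;10;8;2;19;17;15;13;7;1;18;16;22;20;14;12;6;0;21],0,0,6));
 ((1,9,13),([::3;9;11;17;23;21;15;13;19;1;7;5;4;2;0;18;12;10;16;22;20;14;8;6],0,0,16));
 ((1,9,14),([::16;10;4;23;21;19;18;12;6;0;2;8;14;20;22;24;1;7;13;11;5;3;9;15;17],0,0,11));
 ((1,10,1),([::1;3;5;7;9;2;0;11;12;10;8;6;4],0,9,0));
 ((1,10,2),([::6;0;2;4;12;10;8;9;11;13;1;3;5;7],0,11,0));
 ((1,10,3),([::2;4;5;7;9;11;13;0;6;8;14;1;3;12;10],0,7,0));
 ((1,10,4),([::9;7;5;15;13;3;1;11;10;12;14;8;6;4;2;0],0,8,0));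
 ((1,10,5),([::7;5;16;10;12;6;4;2;0;15;13;11;9;8;14;3;1],0,6,0));
 ((1,10,6),([::2;4;10;8;14;16;0;12;6;5;3;1;13;15;17;11;9;7],0,4,0));
 ((1,10,7),([::9;7;5;18;0;13;11;17;15;2;4;6;12;10;8;14;16;3;1],0,6,0));
 ((1,10,8),([::2;4;6;12;14;0;18;16;10;8;7;13;19;17;15;1;3;9;11;5],0,3,0));
 ((1,11,1),([::1;3;5;7;9;11;13;0;2;4;12;10;8;6],0,10,0));
 ((1,11,2),([::4;2;0;14;12;6;8;10;1;3;5;7;9;11;13],0,4,0));
 ((1,11,3),([::6;4;2;12;14;0;10;8;9;11;13;15;1;7;5;3],0,10,0));
 ((1,11,4),([::4;2;1;12;6;8;10;16;14;3;5;7;9;11;13;15;0],0,4,0));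
 ((1,11,5),([::6;4;16;14;12;10;8;2;0;17;15;13;1;7;5;3;9;11],0,10,0));
 ((1,11,6),([::4;2;0;17;15;13;11;5;18;12;10;8;6;7;9;3;16;14;1],0,12,0));
 ((1,11,7),([::3;5;11;17;15;9;7;13;19;1;0;14;16;18;12;10;8;6;4;2],0,4,0));
 ((1,11,8),([::7;9;15;17;18;16;1;3;5;20;14;12;10;8;2;0;6;4;19;13;11],0,9,0));
 ((2,1,9),([::10;4;3;9;2;8;1;7;0;11;5;6;12],0,0,7));
 ((2,1,10),([::13;7;5;11;3;9;10;4;12;6;0;8;2;1],0,0,8));
 ((2,1,11),([::5;11;12;6;0;9;3;2;8;14;1;7;13;4;10],0,0,9));
 ((2,1,12),([::2;8;9;3;13;7;1;11;5;15;14;12;6;0;10;4],0,0,6));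
 ((2,1,13),([::13;7;6;12;1;2;0;11;5;16;10;4;15;9;3;14;8],0,0,10));
 ((2,2,9),([::7;1;13;12;6;0;8;2;4;10;9;3;11;5],0,0,7));
 ((2,2,10),([::8;14;13;7;5;11;2;1;10;4;6;12;3;9;0],0,0,9));
 ((2,2,11),([::2;8;10;4;14;0;1;7;13;3;9;15;5;11;12;6],0,0,8));
 ((2,2,12),([::5;11;13;7;6;12;1;0;2;8;14;3;9;15;4;10;16],0,0,10));
 ((2,2,14),([::11;5;4;10;16;3;9;15;2;0;13;7;1;14;8;6;12;18;17],0,0,10));
 ((2,3,9),([::8;2;1;7;13;0;14;5;11;9;3;12;6;4;10],0,0,7));
 ((2,3,10),([::11;5;6;12;2;4;10;0;14;8;7;13;3;9;15;1],0,0,9));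
 ((2,3,11),([::7;13;2;4;10;11;5;16;1;12;6;0;15;9;8;14;3],0,0,10));
 ((2,3,12),([::0;6;12;10;4;16;15;9;3;5;11;17;1;7;13;14;8;2],0,0,6));
 ((2,3,13),([::10;4;2;8;9;3;16;14;15;17;11;5;18;12;6;0;13;7;1],0,0,7));
 ((2,3,14),([::14;8;2;1;3;9;15;17;11;5;7;13;19;0;6;12;18;4;10;16],0,0,13));
 ((2,4,9),([::13;3;9;8;2;4;10;12;14;0;6;7;1;11;5;15],0,0,6));
 ((2,4,10),([::15;4;10;11;5;7;13;2;8;14;12;6;0;16;1;3;9],0,0,8));
 ((2,4,11),([::16;14;8;2;3;9;15;17;5;11;13;7;1;0;12;6;4;10],0,0,8));
 ((2,4,12),([::16;10;8;14;12;6;7;13;0;2;15;9;3;4;17;11;5;18;1],0,0,12));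
 ((2,4,13),([::19;13;12;18;0;6;4;10;16;14;8;2;1;15;9;3;17;11;5;7],0,0,14));
 ((2,4,14),([::7;13;14;8;6;12;10;4;19;0;15;9;3;18;16;1;2;17;11;5;20],0,0,9));
 ((2,5,9),([::3;9;8;2;1;16;14;12;6;0;11;5;7;13;15;4;10],0,0,8));
 ((2,5,10),([::15;3;9;10;4;2;8;6;0;12;14;16;17;5;11;13;7;1],0,0,6));
 ((2,5,11),([::1;14;8;6;12;13;7;5;11;17;0;2;15;9;3;4;10;16;18],0,0,10));
 ((2,5,12),([::16;10;12;18;4;2;0;6;5;11;17;19;13;7;1;3;9;15;14;8],0,0,13));
 ((2,5,13),([::1;2;8;10;4;19;0;6;12;14;20;5;11;17;16;18;3;9;15;13;7],0,0,8));
 ((2,5,14),([::4;10;12;6;5;11;13;19;3;9;7;1;17;15;21;20;14;8;2;18;16;0],0,0,7));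
 ((2,6,9),([::10;4;6;12;14;2;8;9;3;15;13;7;5;11;17;1;0;16],0,0,8));
 ((2,6,10),([::14;8;2;0;18;1;3;9;15;13;7;5;11;17;16;10;4;6;12],0,0,10));
 ((2,6,11),([::4;10;16;15;9;11;17;3;5;19;1;7;13;14;8;6;12;18;0;2],0,0,13));
 ((2,6,12),([::13;7;5;11;10;4;19;17;16;18;12;6;0;2;8;14;20;1;3;9;15],0,0,8));
 ((2,6,13),([::20;4;2;3;9;15;17;11;5;21;19;13;7;1;0;6;8;14;16;10;12;18],0,0,14));
 ((2,6,14),([::4;10;9;3;5;11;13;12;6;0;17;15;21;19;2;8;14;20;22;16;18;1;7],0,0,7));
 ((2,7,9),([::15;9;7;13;14;8;6;12;18;1;3;5;11;17;16;10;4;2;0],0,0,13));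
 ((2,7,10),([::5;11;12;6;4;10;16;18;0;14;8;2;3;9;7;1;19;13;15;17],0,0,7));
 ((2,7,11),([::17;2;8;14;12;6;0;15;13;7;5;11;9;3;1;20;19;18;16;10;4],0,0,8));
 ((2,7,12),([::21;19;13;7;5;11;17;1;3;9;10;4;6;12;14;8;2;18;20;0;16;15],0,0,8));
 ((2,7,13),([::8;14;13;7;1;2;4;10;16;18;12;6;0;21;19;17;15;9;3;20;22;5;11],0,0,11));
 ((2,7,14),([::2;8;14;12;6;4;10;9;3;21;19;1;7;13;15;17;11;5;23;0;18;20;22;16],0,0,9));
 ((2,8,9),([::0;19;1;7;13;15;9;3;5;11;17;18;16;10;8;14;12;6;4;2],0,0,12));
 ((2,8,10),([::3;9;8;2;17;19;4;10;12;14;16;18;20;5;11;13;15;0;6;7;1],0,0,6));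
 ((2,8,11),([::1;3;9;8;2;18;20;0;6;12;14;16;10;4;5;11;17;19;21;15;13;7],0,0,8));
 ((2,8,12),([::22;0;21;15;13;19;2;8;6;4;10;16;17;11;5;7;9;3;1;18;12;14;20],0,0,16));
 ((2,8,13),([::18;12;11;17;23;5;3;1;19;13;7;9;15;21;20;22;0;2;8;14;16;10;4;6],0,0,13));
 ((2,8,14),([::2;8;14;20;19;21;23;17;15;13;7;5;11;9;3;1;0;6;12;18;24;22;16;10;4],0,0,8));
 ((2,9,9),([::10;16;18;12;6;0;19;13;11;17;15;9;7;5;4;2;3;1;20;14;8],0,0,15));
 ((2,9,10),([::16;10;9;15;17;11;13;19;21;5;7;1;3;4;6;12;18;20;0;2;8;14],0,0,14));
 ((2,9,11),([::6;12;14;8;10;16;22;21;0;2;19;17;11;9;15;13;7;1;18;20;3;5;4],0,0,12));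
 ((2,9,12),([::21;15;13;19;17;11;9;7;5;6;12;18;0;2;8;14;20;22;16;10;4;3;1;23],0,0,17));
 ((2,9,13),([::8;2;0;1;24;23;21;15;17;19;13;7;5;11;9;3;22;16;10;4;6;12;18;20;14],0,0,8));
 ((2,9,14),([::22;16;18;17;23;3;1;25;5;11;13;7;9;15;21;19;20;14;8;2;4;10;12;6;0;24],0,0,10));
 ((2,10,1),([::13;1;9;11;10;12;0;2;4;6;8;7;5;3],0,4,0));
 ((2,10,2),([::9;7;8;14;12;10;1;3;5;6;4;2;0;13;11],0,2,0));
 ((2,10,3),([::13;15;14;12;10;8;6;4;2;0;1;7;5;11;9;3],0,14,0));
 ((2,10,4),([::0;16;14;12;6;4;2;8;10;9;7;1;3;5;11;13;15],0,14,0));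
 ((2,10,5),([::17;11;9;3;5;4;2;0;6;8;10;12;14;16;15;13;1;7],0,11,0));
 ((2,10,6),([::3;1;18;12;11;13;0;2;15;17;4;6;8;14;16;10;9;7;5],0,6,0));
 ((2,10,7),([::2;4;10;16;15;17;3;5;7;9;11;13;19;1;0;18;12;6;8;14],0,4,0));
 ((2,10,8),([::20;18;12;14;16;17;15;0;6;4;19;13;11;9;3;5;7;1;2;8;10],0,10,0));
 ((2,11,1),([::0;1;3;5;7;9;11;2;4;6;8;10;12;14;13],0,10,0));
 ((2,11,2),([::3;1;15;13;14;0;10;8;6;4;2;12;11;9;7;5],0,8,0));
 ((2,11,3),([::2;0;16;1;3;14;12;10;4;6;8;9;7;5;11;13;15],0,12,0));
 ((2,11,4),([::7;9;11;12;0;6;8;10;16;14;2;4;5;3;1;17;15;13],0,9,0));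
 ((2,11,5),([::13;15;17;4;2;1;7;9;11;5;3;16;14;12;10;8;6;0;18],0,16,0));
 ((2,11,6),([::10;16;15;13;7;9;11;5;3;1;19;17;18;0;2;8;14;12;6;4],0,2,0));
 ((2,11,7),([::6;5;7;8;10;16;14;12;18;20;1;3;9;11;17;2;4;19;0;15;13],0,10,0));
 ((2,11,8),([::7;6;8;2;0;20;18;12;14;16;10;4;5;11;17;19;21;1;3;9;15;13],0,19,0));
 ((3,1,9),([::10;4;3;9;1;7;8;2;0;6;12;11;5;13],0,0,7));
 ((3,1,10),([::3;9;11;5;4;10;1;7;13;12;6;0;14;8;2],0,0,6));
 ((3,1,11),([::6;12;13;7;1;11;5;15;14;8;2;0;10;4;3;9],0,0,9));
 ((3,1,12),([::13;7;1;0;11;5;6;12;14;8;2;3;9;15;4;10;16],0,0,10));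
 ((3,1,14),([::9;15;13;7;8;14;1;0;6;12;18;5;11;17;4;10;16;3;2],0,0,12));
 ((3,2,9),([::12;6;7;13;14;8;2;0;9;3;1;10;4;5;11],0,0,9));
 ((3,2,10),([::13;7;5;11;10;4;14;8;2;1;3;9;15;0;6;12],0,0,9));
 ((3,2,11),([::15;9;3;5;11;10;4;2;8;14;13;7;1;12;6;0;16],0,0,10));
 ((3,2,12),([::3;9;15;16;10;4;2;8;14;13;7;1;17;5;11;12;0;6],0,0,6));
 ((3,2,13),([::18;16;10;9;15;2;8;14;1;7;13;0;6;12;11;5;3;4;17],0,0,11));
 ((3,2,14),([::11;17;3;9;15;13;7;6;5;19;1;0;14;8;2;16;10;4;18;12],0,0,13));
 ((3,3,9),([::5;11;13;3;9;10;4;14;12;6;0;15;1;7;8;2],0,0,7));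
 ((3,3,10),([::11;5;3;9;7;1;16;0;6;12;13;2;8;14;15;4;10],0,0,6));
 ((3,3,11),([::8;14;13;7;1;3;9;15;16;10;4;2;0;6;12;11;5;17],0,0,10));
 ((3,3,12),([::10;16;14;8;9;15;17;11;5;18;12;6;0;13;7;1;2;4;3],0,0,12));
 ((3,3,13),([::8;14;0;19;18;12;6;4;10;16;2;1;7;13;15;9;3;5;11;17],0,0,11));
 ((3,3,14),([::14;8;2;1;3;18;12;6;4;10;16;17;11;5;20;0;15;9;7;13;19],0,0,12));
 ((3,4,9),([::16;10;9;15;4;3;5;11;13;7;1;0;2;8;14;12;6],0,0,11));
 ((3,4,10),([::1;3;9;15;17;11;5;6;12;13;7;8;14;2;4;10;16;0],0,0,10));
 ((3,4,11),([::1;0;17;15;2;4;10;16;3;9;11;5;18;12;6;7;13;14;8],0,0,9));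
 ((3,4,12),([::16;10;9;15;14;8;2;0;18;4;6;12;11;5;19;13;7;1;3;17],0,0,11));
 ((3,4,13),([::18;20;0;2;8;14;12;6;5;11;17;16;10;4;19;13;7;1;3;9;15],0,0,10));
 ((3,4,14),([::10;4;3;9;11;5;21;20;18;2;8;14;12;6;0;16;15;17;1;7;13;19],0,0,6));
 ((3,5,9),([::3;9;15;14;13;7;1;17;5;11;12;6;4;10;8;2;0;16],0,0,7));
 ((3,5,10),([::18;16;14;8;7;13;0;6;12;10;4;5;11;17;15;2;1;3;9],0,0,9));
 ((3,5,11),([::8;14;12;6;5;11;17;3;9;15;16;10;4;2;0;18;19;1;7;13],0,0,11));
 ((3,5,12),([::19;13;7;1;16;10;4;2;3;5;11;17;15;9;8;14;12;6;0;20;18],0,0,10));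
 ((3,5,13),([::7;13;14;8;9;15;17;11;5;3;19;21;1;2;18;20;4;10;16;0;6;12],0,0,10));
 ((3,5,14),([::6;7;1;18;12;13;19;2;0;21;4;3;9;15;17;11;5;22;20;14;8;10;16],0,0,15));
 ((3,6,9),([::9;3;16;10;4;6;12;11;5;18;1;2;0;17;15;13;7;8;14],0,0,9));
 ((3,6,10),([::15;9;3;4;10;12;6;8;14;0;18;16;17;11;5;7;13;19;1;2],0,0,10));
 ((3,6,11),([::18;20;0;1;16;10;4;6;12;14;8;2;3;5;11;17;15;9;7;13;19],0,0,10));
 ((3,6,12),([::21;15;9;8;2;18;12;10;16;0;20;14;13;19;17;11;5;7;1;3;4;6],0,0,15));
 ((3,6,13),([::4;10;9;3;5;11;12;14;16;22;21;15;17;0;6;8;2;19;13;7;1;18;20],0,0,6));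
 ((3,6,14),([::3;9;11;5;7;13;12;6;4;10;16;22;0;18;17;23;1;19;21;15;14;8;2;20],0,0,9));
 ((3,7,9),([::7;13;19;1;15;9;10;16;14;8;6;12;11;5;3;17;18;0;2;4],0,0,11));
 ((3,7,10),([::20;14;8;9;15;16;10;12;18;17;11;5;3;1;7;13;19;0;2;4;6],0,0,15));
 ((3,7,11),([::14;20;18;12;13;19;3;4;6;8;2;0;16;10;11;17;1;21;15;9;7;5],0,0,16));
 ((3,7,12),([::14;20;21;19;13;12;18;16;10;8;2;4;6;0;22;5;11;17;15;9;3;1;7],0,0,15));
 ((3,7,13),([::3;5;6;8;10;16;22;4;2;0;18;12;11;17;23;1;19;13;7;9;15;21;20;14],0,0,16));
 ((3,7,14),([::21;19;13;12;18;16;10;8;14;20;22;3;9;15;17;11;5;24;23;4;2;0;6;7;1],0,0,15));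
 ((3,8,9),([::9;15;16;10;8;14;12;6;7;13;19;17;11;5;3;18;20;1;0;2;4],0,0,11));
 ((3,8,10),([::18;20;0;1;7;13;15;9;3;2;8;10;4;6;12;14;16;17;11;5;21;19],0,0,7));
 ((3,8,11),([::11;17;0;21;15;14;20;22;16;10;12;18;1;3;5;4;6;8;9;7;13;19;2],0,0,17));
 ((3,8,12),([::2;4;10;12;6;5;11;13;7;1;19;20;18;0;22;16;14;8;9;15;17;23;21;3],0,0,10));
 ((3,8,13),([::14;20;18;12;6;5;7;1;3;22;16;10;4;23;21;15;13;19;17;11;9;8;2;0;24],0,0,17));
 ((3,8,14),([::7;13;19;20;14;12;18;24;22;21;23;3;1;25;5;11;17;15;9;8;2;0;6;4;10;16],0,0,15));
 ((3,9,9),([::20;4;10;8;2;18;16;17;19;21;0;6;12;14;15;13;11;5;3;9;7;1],0,0,6));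
 ((3,9,10),([::19;13;14;20;22;16;10;4;2;0;21;15;9;11;17;18;12;6;8;7;5;3;1],0,0,17));
 ((3,9,11),([::3;9;10;4;5;11;17;23;1;19;21;15;13;7;6;12;14;8;2;0;22;20;18;16],0,0,9));
 ((3,9,12),([::4;6;12;14;8;7;13;15;9;10;16;18;19;21;2;0;23;17;11;5;24;1;20;22;3],0,0,12));
 ((3,9,13),([::12;6;0;2;1;25;5;11;17;19;21;23;22;20;18;24;4;10;16;14;8;7;13;15;9;3],0,0,9));
 ((3,9,14),([::19;21;20;14;8;10;16;18;12;6;0;1;3;9;15;13;7;5;11;17;23;2;4;25;26;24;22],0,0,13));
 ((3,10,1),([::3;1;7;9;11;13;14;12;10;8;6;5;4;2;0],0,8,0));
 ((3,10,2),([::12;2;0;10;8;6;4;5;7;9;11;13;14;15;1;3],0,8,0));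
 ((3,10,3),([::5;11;13;12;10;4;2;0;15;14;16;1;3;9;7;6;8],0,12,0));
 ((3,10,4),([::5;17;15;13;11;12;14;16;0;2;1;7;9;3;4;10;8;6],0,13,0));
 ((3,10,5),([::12;10;9;11;13;15;17;18;5;3;16;14;1;7;8;6;0;2;4],0,11,0));
 ((3,10,6),([::5;7;13;19;18;17;3;1;15;9;11;12;14;16;10;8;6;4;2;0],0,6,0));
 ((3,10,7),([::6;4;19;17;15;13;14;8;7;9;11;5;3;18;12;10;16;1;20;0;2],0,5,0));
 ((3,10,8),([::7;9;10;12;6;0;1;21;5;11;13;15;17;19;3;4;20;18;16;14;8;2],0,19,0));
 ((3,11,1),([::9;7;6;8;10;12;11;13;15;1;3;5;4;14;0;2],0,8,0));
 ((3,11,2),([::5;6;8;10;12;14;16;15;0;2;13;11;9;7;1;3;4],0,10,0));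
 ((3,11,3),([::10;9;7;5;6;8;14;12;0;16;4;2;3;1;17;15;13;11],0,8,0));
 ((3,11,4),([::1;2;0;18;17;15;13;11;9;7;5;3;16;10;8;14;12;6;4],0,5,0));
 ((3,11,5),([::17;16;14;12;10;8;6;4;3;1;15;9;11;5;7;13;19;18;0;2],0,2,0));
 ((3,11,6),([::13;14;20;18;3;5;7;1;16;15;17;2;0;19;4;6;8;10;12;11;9],0,11,0));
 ((3,11,7),([::6;4;5;7;8;14;20;18;12;10;16;0;2;3;19;21;1;17;15;13;11;9],0,6,0));
 ((3,11,8),([::2;19;18;17;15;9;11;13;7;5;4;21;0;6;8;10;12;14;20;3;1;22;16],0,7,0));
 ((4,1,9),([::3;9;0;1;7;8;2;11;5;14;13;12;6;4;10],0,0,7));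
 ((4,1,10),([::4;10;9;3;5;11;1;7;13;14;15;0;6;12;2;8],0,0,8));
 ((4,1,11),([::9;3;14;15;16;10;4;5;11;13;2;8;7;1;12;6;0],0,0,7));
 ((4,1,12),([::11;17;5;4;16;10;9;15;3;2;14;8;6;12;0;1;7;13],0,0,12));
 ((4,1,13),([::0;13;7;1;14;8;6;12;18;17;11;5;4;3;16;10;9;15;2],0,0,13));
 ((4,1,14),([::5;11;13;7;1;2;8;14;15;9;3;17;16;10;4;18;12;6;0;19],0,0,10));
 ((4,2,9),([::12;11;5;15;14;13;7;1;3;9;8;2;4;10;0;6],0,0,6));
 ((4,2,10),([::11;5;16;10;8;14;13;7;9;15;4;3;2;1;12;6;0],0,0,11));
 ((4,2,11),([::4;10;16;17;11;9;15;3;5;6;12;0;1;13;7;8;14;2],0,0,12));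
 ((4,2,12),([::0;13;7;5;11;10;4;6;12;18;17;16;3;9;15;2;1;14;8],0,0,10));
 ((4,2,13),([::12;6;4;10;16;17;11;5;19;18;0;14;13;7;1;15;9;3;2;8],0,0,7));
 ((4,2,14),([::2;1;3;9;15;0;20;5;11;17;18;12;6;7;13;19;4;10;16;14;8],0,0,13));
 ((4,3,9),([::14;8;9;15;4;10;16;0;2;13;7;6;12;11;5;3;1],0,0,11));
 ((4,3,10),([::9;15;16;0;12;6;4;10;11;5;17;1;13;7;8;14;2;3],0,0,10));
 ((4,3,11),([::6;12;13;7;9;15;17;11;5;4;10;16;3;2;8;14;1;18;0],0,0,11));
 ((4,3,12),([::15;16;14;8;2;1;7;13;12;6;0;18;4;10;9;3;17;19;5;11],0,0,6));
 ((4,3,13),([::8;14;12;6;7;13;11;5;20;19;4;10;16;18;3;9;15;0;1;2;17],0,0,9));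
 ((4,3,14),([::17;1;3;5;11;12;6;7;13;19;18;2;0;16;10;4;20;14;8;9;15;21],0,0,11));
 ((4,4,9),([::0;6;12;10;4;5;11;13;7;1;2;3;9;15;17;16;14;8],0,0,9));
 ((4,4,10),([::8;14;16;10;9;15;17;0;6;12;18;5;11;13;7;1;2;3;4],0,0,11));
 ((4,4,11),([::2;8;14;0;19;17;15;9;3;1;7;13;12;6;5;11;10;4;18;16],0,0,8));
 ((4,4,12),([::14;8;7;13;11;5;3;9;10;4;19;20;18;12;6;0;15;17;2;1;16],0,0,9));
 ((4,4,13),([::5;11;17;19;20;14;8;2;18;12;10;16;15;9;3;4;6;0;21;1;7;13],0,0,13));
 ((4,4,14),([::20;18;12;6;0;2;8;14;15;9;3;1;7;13;19;17;16;22;21;4;10;11;5],0,0,8));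
 ((4,5,9),([::5;11;17;18;16;15;14;12;6;4;10;9;3;1;7;13;0;2;8],0,0,8));
 ((4,5,10),([::9;15;17;11;5;6;8;14;13;7;1;19;0;2;16;10;12;18;4;3],0,0,13));
 ((4,5,11),([::12;18;19;13;7;5;20;1;2;17;11;10;16;14;8;6;4;3;9;15;0],0,0,14));
 ((4,5,12),([::14;8;6;12;10;4;20;19;17;16;18;2;3;9;15;21;5;11;13;7;1;0],0,0,10));
 ((4,5,13),([::12;6;0;22;16;10;8;14;20;18;1;2;3;5;4;21;15;9;7;13;19;17;11],0,0,12));
 ((4,5,14),([::9;15;21;20;2;1;23;22;4;10;16;18;0;6;12;14;8;7;13;19;17;11;5;3],0,0,10));
 ((4,6,9),([::12;6;5;11;10;4;2;1;7;13;15;9;3;17;19;0;18;16;14;8],0,0,9));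
 ((4,6,10),([::0;19;17;18;12;6;7;13;15;9;8;14;20;1;16;10;4;2;3;5;11],0,0,10));
 ((4,6,11),([::10;16;17;11;9;8;14;20;18;12;6;4;2;3;19;13;15;21;5;7;1;0],0,0,16));
 ((4,6,12),([::2;19;17;11;5;3;9;15;21;20;22;0;1;7;13;14;8;10;16;18;12;6;4],0,0,12));
 ((4,6,13),([::0;6;12;13;7;8;14;15;9;3;5;11;17;23;1;19;21;22;4;2;20;18;16;10],0,0,11));
 ((4,6,14),([::14;8;7;13;15;9;3;1;20;22;21;2;4;10;16;18;24;23;17;19;0;6;12;11;5],0,0,10));
 ((4,7,9),([::16;17;2;8;10;4;19;0;1;20;18;3;9;11;5;6;12;14;15;13;7],0,0,8));
 ((4,7,10),([::13;7;1;0;20;14;12;6;5;11;9;3;4;10;8;2;18;16;17;19;21;15],0,0,8));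
 ((4,7,11),([::6;4;21;15;14;20;18;12;10;16;22;5;7;13;19;17;11;9;8;2;3;1;0],0,0,16));
 ((4,7,12),([::1;2;8;10;4;22;16;17;11;5;3;9;15;13;7;6;12;14;20;18;0;23;21;19],0,0,8));
 ((4,7,13),([::8;2;21;15;17;16;10;4;5;11;9;3;1;20;18;24;22;23;0;19;13;7;6;12;14],0,0,8));
 ((4,7,14),([::15;9;11;17;23;24;18;19;13;7;8;14;12;6;0;2;4;10;16;22;20;21;1;25;5;3],0,0,12));
 ((4,8,9),([::15;21;19;13;11;17;16;10;4;5;7;9;8;6;0;20;14;12;18;2;1;3],0,0,16));
 ((4,8,10),([::17;11;5;22;21;20;3;9;7;1;0;2;8;10;4;6;12;14;16;18;19;13;15],0,0,7));
 ((4,8,11),([::4;10;11;5;6;12;14;8;2;0;1;7;13;15;9;3;21;19;17;23;22;20;18;16],0,0,10));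
 ((4,8,12),([::12;6;4;5;11;13;7;1;24;18;17;15;9;10;16;14;8;2;21;23;0;19;20;22;3],0,0,11));
 ((4,8,13),([::25;0;24;4;3;23;17;11;5;7;13;15;9;10;16;14;8;6;12;18;20;22;2;1;21;19],0,0,13));
 ((4,8,14),([::7;13;14;8;6;12;18;17;11;5;4;10;16;22;24;26;1;3;9;15;21;23;2;0;25;19;20],0,0,12));
 ((4,9,9),([::5;7;9;15;16;10;11;17;0;2;4;6;8;14;20;22;21;19;13;12;18;1;3],0,0,14));
 ((4,9,10),([::4;5;11;12;6;8;14;15;9;7;13;19;17;23;1;3;21;22;0;2;20;18;16;10],0,0,11));
 ((4,9,11),([::15;14;8;2;21;19;13;11;5;4;10;12;6;0;23;24;1;7;9;3;22;20;18;16;17],0,0,7));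
 ((4,9,12),([::23;24;4;6;12;13;7;5;25;0;2;22;20;14;8;10;16;18;19;17;11;9;15;21;1;3],0,0,12));
 ((4,9,13),([::19;17;15;21;22;20;14;8;2;0;6;12;13;11;5;3;9;7;1;26;25;4;10;16;18;24;23],0,0,6));
 ((4,9,14),([::20;26;24;18;17;23;1;7;6;0;2;4;5;3;9;15;21;27;25;19;13;11;12;10;8;14;16;22],0,0,22));
 ((4,10,1),([::5;7;6;8;10;12;13;15;14;0;2;4;3;1;11;9],0,10,0));
 ((4,10,2),([::16;15;4;6;8;10;12;14;13;11;9;7;1;0;2;3;5],0,13,0));
 ((4,10,3),([::7;6;8;10;12;14;15;13;11;9;3;4;16;0;2;1;17;5],0,14,0));
 ((4,10,4),([::2;0;1;14;15;17;4;6;8;9;7;5;3;16;18;12;10;11;13],0,7,0));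
 ((4,10,5),([::4;6;8;2;0;19;17;18;16;15;1;7;9;3;5;11;13;14;12;10],0,13,0));
 ((4,10,6),([::9;8;6;12;13;7;5;3;18;20;1;16;14;15;17;11;10;4;2;0;19],0,4,0));
 ((4,10,7),([::13;12;11;17;18;20;14;16;10;8;6;0;2;4;5;7;9;15;21;19;3;1],0,7,0));
 ((4,10,8),([::17;11;13;12;10;16;22;20;18;1;3;9;15;14;8;7;5;6;4;2;19;21;0],0,3,0));
 ((4,11,1),([::12;14;16;15;0;1;3;4;2;13;11;9;7;5;6;8;10],0,3,0));
 ((4,11,2),([::8;10;16;17;15;14;13;11;9;7;5;3;1;0;2;4;6;12],0,6,0));
 ((4,11,3),([::13;12;14;8;6;7;9;15;17;0;2;4;5;3;1;18;16;10;11],0,8,0));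
 ((4,11,4),([::10;9;15;16;18;0;2;4;5;3;1;19;17;11;13;7;6;8;14;12],0,3,0));
 ((4,11,5),([::7;6;0;20;14;12;10;8;9;11;13;15;17;19;4;2;1;16;18;3;5],0,11,0));
 ((4,11,6),([::5;3;2;18;16;15;21;1;0;20;4;6;8;14;12;10;11;9;7;13;19;17],0,5,0));
 ((4,11,7),([::17;15;9;8;6;12;10;4;2;0;21;22;16;14;20;19;18;1;3;5;7;13;11],0,3,0));
 ((4,11,8),([::6;7;9;11;13;19;21;20;22;4;2;8;10;16;14;15;17;23;5;3;1;0;18;12],0,9,0));
 ((5,1,9),([::4;10;8;2;3;9;15;14;13;7;1;0;6;12;11;5],0,0,7));
 ((5,1,10),([::5;11;12;6;7;13;15;9;3;14;8;2;1;0;16;10;4],0,0,11));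
 ((5,1,11),([::14;2;8;10;4;3;9;15;16;17;11;5;6;12;0;1;7;13],0,0,7));
 ((5,1,12),([::0;1;2;8;14;13;7;6;12;18;5;11;17;15;9;3;4;10;16],0,0,8));
 ((5,1,13),([::7;6;0;18;12;13;19;5;11;17;16;10;4;3;9;15;1;2;8;14],0,0,14));
 ((5,1,14),([::4;10;16;18;12;6;0;1;2;17;11;5;20;19;13;7;8;14;15;9;3],0,0,12));
 ((5,2,9),([::8;2;4;10;11;5;16;0;6;12;13;14;15;9;3;1;7],0,0,6));
 ((5,2,10),([::0;16;10;4;3;15;9;8;14;2;1;17;5;11;12;6;7;13],0,0,11));
 ((5,2,11),([::9;3;4;10;16;14;8;7;13;12;6;0;1;2;15;17;11;5;18],0,0,9));
 ((5,2,12),([::14;0;2;8;10;4;3;9;15;16;17;11;5;6;12;18;19;13;7;1],0,0,8));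
 ((5,2,13),([::19;20;14;8;7;13;11;5;3;4;10;16;1;2;17;18;12;6;0;15;9],0,0,10));
 ((5,2,14),([::15;9;8;14;20;18;17;1;7;13;19;3;2;4;10;16;0;21;5;11;12;6],0,0,10));
 ((5,3,9),([::11;5;3;9;7;1;2;8;14;15;13;12;6;0;17;16;10;4],0,0,6));
 ((5,3,10),([::13;7;8;14;1;2;15;17;16;3;9;11;5;4;10;12;6;0;18],0,0,9));
 ((5,3,11),([::9;3;1;15;16;10;4;6;12;13;7;5;11;17;18;19;0;14;8;2],0,0,9));
 ((5,3,12),([::0;15;16;14;12;6;4;10;9;3;18;17;11;5;20;19;13;7;1;2;8],0,0,7));
 ((5,3,13),([::0;21;15;9;8;14;20;18;12;6;7;13;19;3;1;2;4;10;16;17;11;5],0,0,16));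
 ((5,3,14),([::9;3;5;11;13;14;20;19;2;8;7;1;18;17;0;6;12;10;4;21;15;16;22],0,0,6));
 ((5,4,9),([::13;0;1;7;9;3;4;10;8;2;15;14;16;18;17;11;5;6;12],0,0,7));
 ((5,4,10),([::1;7;13;14;0;19;17;15;16;2;8;9;3;5;11;10;4;6;12;18],0,0,8));
 ((5,4,11),([::5;11;17;19;13;7;8;14;20;1;0;15;9;10;16;18;12;6;4;3;2],0,0,13));
 ((5,4,12),([::11;5;3;19;17;1;0;21;20;14;8;9;15;13;7;6;12;18;2;4;10;16],0,0,10));
 ((5,4,13),([::0;6;12;13;11;5;4;10;16;22;1;7;9;3;20;21;15;17;18;19;2;8;14],0,0,6));
 ((5,4,14),([::0;1;7;8;2;20;14;15;13;19;18;16;22;4;10;12;6;5;11;17;23;21;3;9],0,0,7));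
 ((5,5,9),([::5;11;12;18;4;10;8;2;3;9;7;1;15;13;14;16;17;19;0;6],0,0,6));
 ((5,5,10),([::18;12;11;17;15;9;7;13;19;20;1;0;6;5;3;2;8;14;16;10;4],0,0,13));
 ((5,5,11),([::11;17;18;12;10;16;0;20;14;13;19;21;15;9;3;5;4;6;7;1;2;8],0,0,16));
 ((5,5,12),([::10;16;22;1;0;17;11;12;18;20;14;8;9;15;21;4;6;7;5;3;2;19;13],0,0,14));
 ((5,5,13),([::10;16;18;12;6;7;9;15;21;23;17;11;5;3;4;22;0;1;2;8;14;20;19;13],0,0,14));
 ((5,5,14),([::22;3;9;11;5;7;13;15;16;17;19;18;24;23;4;10;12;6;0;1;20;14;8;2;21],0,0,9));
 ((5,6,9),([::3;9;10;4;2;1;16;14;8;6;12;18;17;19;20;0;15;13;7;5;11],0,0,9));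
 ((5,6,10),([::5;11;17;18;12;6;4;3;2;1;21;19;13;7;9;15;16;10;8;14;20;0],0,0,11));
 ((5,6,11),([::5;11;9;3;4;10;8;2;19;13;7;1;18;17;15;16;14;12;6;0;22;20;21],0,0,8));
 ((5,6,12),([::7;13;12;6;0;2;1;19;20;18;16;10;4;22;23;21;3;5;11;17;15;9;8;14],0,0,12));
 ((5,6,13),([::11;13;19;20;14;16;22;24;18;17;23;0;1;7;8;2;21;15;9;3;5;4;10;12;6],0,0,19));
 ((5,6,14),([::22;16;10;9;15;14;8;6;12;18;17;11;5;25;23;3;1;2;4;24;0;20;21;19;13;7],0,0,11));
 ((5,7,9),([::10;4;2;8;14;16;0;6;12;13;11;5;3;9;7;1;21;20;19;18;17;15],0,0,7));
 ((5,7,10),([::10;4;2;0;6;12;13;7;9;15;16;22;1;3;5;11;17;18;19;21;20;14;8],0,0,10));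
 ((5,7,11),([::5;11;9;3;2;8;14;15;16;17;23;21;19;13;7;1;0;22;20;18;12;6;4;10],0,0,8));
 ((5,7,12),([::12;18;19;13;14;20;1;3;4;10;16;22;24;5;6;8;7;9;11;17;23;0;2;21;15],0,0,17));
 ((5,7,13),([::2;1;7;13;19;17;11;10;16;14;8;9;15;21;22;24;0;20;18;12;6;4;5;25;23;3],0,0,13));
 ((5,7,14),([::13;7;8;14;16;10;4;5;6;12;18;24;23;17;11;9;15;21;19;25;0;2;3;1;22;20;26],0,0,12));
 ((5,8,9),([::7;5;22;20;14;13;19;18;12;6;8;10;16;17;11;9;15;21;0;2;1;3;4],0,0,16));
 ((5,8,10),([::6;5;11;17;16;10;4;2;0;22;23;1;3;9;7;8;14;20;18;12;13;19;21;15],0,0,16));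
 ((5,8,11),([::5;11;17;19;20;21;23;22;3;9;7;1;24;18;12;14;13;15;16;10;4;2;8;6;0],0,0,6));
 ((5,8,12),([::24;4;10;11;5;6;12;13;15;14;8;2;0;20;18;16;22;21;19;17;23;3;9;7;1;25],0,0,7));
 ((5,8,13),([::14;20;22;16;10;8;7;1;2;23;24;18;12;6;4;5;3;9;15;17;11;13;19;21;0;25;26],0,0,15));
 ((5,8,14),([::17;23;1;7;13;11;5;4;10;8;2;0;26;27;25;3;9;15;16;22;24;18;19;21;20;14;12;6],0,0,7));
 ((5,9,9),([::0;6;5;7;13;19;17;11;10;16;18;12;14;20;22;21;23;1;3;4;2;8;9;15],0,0,15));
 ((5,9,10),([::23;21;22;24;5;3;9;15;17;11;13;19;0;1;2;4;6;7;8;14;20;18;12;10;16],0,0,14));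
 ((5,9,11),([::7;13;14;8;2;0;1;3;9;10;4;6;12;11;5;25;23;21;15;17;19;20;18;24;22;16],0,0,9));
 ((5,9,12),([::26;24;18;12;13;19;17;11;5;7;6;0;1;3;9;15;16;10;8;14;20;22;21;23;25;4;2],0,0,14));
 ((5,9,13),([::11;5;27;1;3;9;8;2;24;18;16;17;19;25;23;21;20;14;15;13;7;6;12;10;4;26;0;22],0,0,8));
 ((5,9,14),([::1;0;2;8;14;12;6;7;13;19;25;24;22;28;26;20;18;16;10;9;15;17;11;5;3;4;27;21;23],0,0,12));
 ((5,10,1),([::14;13;15;16;5;3;1;0;2;4;6;7;9;11;12;10;8],0,9,0));
 ((5,10,2),([::0;2;14;12;10;9;11;13;15;16;17;5;7;8;6;4;3;1],0,11,0));
 ((5,10,3),([::9;11;10;12;14;16;17;18;0;1;3;5;7;13;15;2;8;6;4],0,14,0));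
 ((5,10,4),([::3;17;15;9;10;12;13;11;5;7;6;4;2;0;1;19;18;16;14;8],0,16,0));
 ((5,10,5),([::17;19;20;5;7;8;6;0;2;4;3;1;16;10;9;11;13;15;14;12;18],0,7,0));
 ((5,10,6),([::10;8;9;11;12;14;15;13;7;6;4;2;18;16;0;20;21;5;3;19;17;1],0,14,0));
 ((5,10,7),([::1;0;21;15;13;12;14;16;22;20;18;17;19;2;8;10;4;3;9;11;5;7;6],0,14,0));
 ((5,10,8),([::22;23;17;11;12;18;20;14;16;10;8;2;0;1;3;4;6;5;7;9;15;13;19;21],0,2,0));
 ((5,11,1),([::10;12;14;15;17;16;0;2;3;1;13;11;9;8;6;4;5;7],0,6,0));
 ((5,11,2),([::12;14;16;10;8;9;7;6;4;3;5;11;13;15;17;0;18;1;2],0,5,0));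
 ((5,11,3),([::12;18;4;2;3;5;7;9;11;10;8;6;0;1;19;17;16;14;13;15],0,7,0));
 ((5,11,4),([::19;4;5;7;1;20;0;2;3;18;16;17;15;13;11;9;10;8;6;12;14],0,13,0));
 ((5,11,5),([::19;21;20;14;12;18;17;1;3;4;2;0;16;15;13;11;5;7;9;10;8;6],0,3,0));
 ((5,11,6),([::14;20;21;19;17;0;2;4;6;8;7;5;11;10;9;15;13;12;18;16;22;1;3],0,3,0));
 ((5,11,7),([::3;4;22;20;21;15;16;14;12;10;8;2;0;6;5;23;1;7;9;11;13;19;17;18],0,11,0));
 ((5,11,8),([::22;21;23;0;24;5;11;13;14;12;6;4;10;8;2;3;9;7;1;20;18;16;15;17;19],0,13,0));
 ((6,1,9),([::13;14;8;2;3;9;7;1;0;6;12;11;5;4;10;16;15],0,0,7));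
 ((6,1,10),([::3;1;2;8;14;13;7;6;12;0;17;11;5;4;10;16;15;9],0,0,12));
 ((6,1,11),([::4;10;9;3;2;8;14;1;7;13;15;16;17;18;5;11;12;6;0],0,0,9));
 ((6,1,12),([::4;5;11;17;16;10;9;15;14;8;2;3;1;7;13;19;0;6;12;18],0,0,11));
 ((6,1,13),([::3;9;10;4;19;20;14;13;7;1;0;15;16;18;12;6;5;11;17;2;8],0,0,7));
 ((6,1,14),([::4;2;8;14;20;21;15;9;3;19;13;12;18;17;11;5;6;7;1;0;16;10],0,0,15));
 ((6,2,9),([::4;10;16;17;1;0;6;12;11;5;7;13;14;8;9;15;3;2],0,0,10));
 ((6,2,10),([::12;6;8;14;13;7;1;2;0;18;5;11;17;16;15;9;3;4;10],0,0,9));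
 ((6,2,11),([::2;0;6;12;18;19;13;7;1;3;4;5;11;17;16;10;9;15;14;8],0,0,11));
 ((6,2,12),([::8;14;16;1;0;20;5;11;10;4;19;18;12;6;7;13;15;9;3;2;17],0,0,10));
 ((6,2,13),([::14;20;4;2;18;12;13;19;3;9;15;21;0;1;17;11;5;6;7;8;10;16],0,0,16));
 ((6,2,14),([::16;10;11;17;15;9;7;13;19;2;8;14;20;3;4;21;22;0;1;18;12;6;5],0,0,14));
 ((6,3,9),([::6;0;18;17;11;5;3;9;8;2;4;10;16;15;14;12;13;7;1],0,0,6));
 ((6,3,10),([::11;5;3;9;10;4;18;17;16;15;1;2;0;6;12;14;8;7;13;19],0,0,9));
 ((6,3,11),([::19;13;14;20;18;12;10;16;17;11;5;6;7;1;0;15;9;3;4;2;8],0,0,15));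
 ((6,3,12),([::6;12;14;8;7;13;19;18;20;0;21;5;11;17;1;2;3;9;15;16;10;4],0,0,12));
 ((6,3,13),([::1;7;13;14;8;2;19;17;11;5;4;3;20;18;16;10;9;15;21;22;0;6;12],0,0,11));
 ((6,3,14),([::1;7;8;2;20;18;19;17;11;5;23;0;6;12;13;14;16;10;4;22;21;3;9;15],0,0,7));
 ((6,4,9),([::5;11;10;4;6;12;13;14;15;9;3;17;19;0;18;16;2;8;7;1],0,0,7));
 ((6,4,10),([::11;17;19;13;12;18;3;5;4;6;7;1;2;8;14;16;10;9;15;0;20],0,0,14));
 ((6,4,11),([::14;15;21;1;7;8;2;18;20;19;13;12;6;4;10;9;3;5;11;17;16;0],0,0,7));
 ((6,4,12),([::6;0;1;7;9;3;5;11;12;18;17;15;21;22;16;10;4;2;8;14;13;19;20],0,0,6));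
 ((6,4,13),([::14;20;2;8;6;0;22;16;17;23;1;7;13;19;18;12;11;10;9;15;21;3;5;4],0,0,18));
 ((6,4,14),([::20;14;8;2;1;3;22;23;4;6;12;13;7;5;11;17;16;10;9;15;21;19;0;24;18],0,0,11));
 ((6,5,9),([::16;10;4;6;12;18;17;15;9;8;14;20;19;0;1;2;3;5;11;13;7],0,0,11));
 ((6,5,10),([::20;4;5;11;13;7;9;15;14;8;6;12;18;19;3;2;0;21;1;17;16;10],0,0,11));
 ((6,5,11),([::13;19;20;14;8;9;10;16;22;5;7;6;4;2;3;1;18;12;11;17;0;21;15],0,0,17));
 ((6,5,12),([::11;17;18;12;10;16;22;4;6;0;2;1;3;9;8;7;13;19;20;14;15;21;23;5],0,0,16));
 ((6,5,13),([::11;17;23;22;16;10;9;15;21;19;13;7;1;3;4;5;6;8;2;0;24;18;12;14;20],0,0,17));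
 ((6,5,14),([::23;24;22;16;10;8;9;15;21;19;13;7;1;2;3;4;6;0;20;14;12;18;17;11;5;25],0,0,16));
 ((6,6,9),([::21;20;4;10;16;0;2;8;7;1;3;9;11;5;6;12;14;13;15;17;18;19],0,0,7));
 ((6,6,10),([::8;2;1;7;9;3;4;10;12;6;5;11;17;16;14;20;22;0;21;15;13;19;18],0,0,7));
 ((6,6,11),([::6;12;18;0;22;16;10;9;15;14;8;7;13;19;17;11;5;4;2;3;1;23;21;20],0,0,12));
 ((6,6,12),([::10;4;3;9;15;21;20;1;7;13;12;6;5;11;17;19;18;16;14;8;2;0;23;22;24],0,0,9));
 ((6,6,13),([::16;14;8;2;1;25;5;11;17;15;13;7;6;12;18;19;20;0;24;4;10;9;3;23;21;22],0,0,9));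
 ((6,6,14),([::17;11;13;19;20;21;23;2;0;25;4;5;26;1;22;16;10;12;18;24;3;9;15;14;8;7;6],0,0,14));
 ((6,7,9),([::21;15;13;12;6;5;11;10;4;2;8;14;16;17;19;18;20;3;9;7;1;22;0],0,0,7));
 ((6,7,10),([::12;6;0;18;19;17;11;5;7;13;14;15;16;10;4;2;8;9;3;1;23;21;22;20],0,0,8));
 ((6,7,11),([::22;16;10;8;9;11;17;23;21;15;13;19;0;1;2;3;4;6;7;5;24;18;12;14;20],0,0,17));
 ((6,7,12),([::25;1;2;22;23;21;20;19;13;7;9;15;14;8;10;16;18;12;6;0;24;4;3;5;11;17],0,0,12));
 ((6,7,13),([::26;25;23;17;11;9;15;21;19;13;12;18;16;10;4;2;3;24;22;20;14;8;7;1;0;6;5],0,0,16));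
 ((6,7,14),([::8;14;12;6;4;5;11;17;19;25;26;0;27;21;20;22;23;1;7;13;15;9;3;2;24;18;16;10],0,0,11));
 ((6,8,9),([::21;23;5;3;2;1;0;18;12;13;19;20;22;4;6;8;14;16;10;11;17;15;9;7],0,0,14));
 ((6,8,10),([::21;23;22;3;4;6;12;14;8;2;1;24;0;19;20;18;16;10;9;15;17;11;5;7;13],0,0,11));
 ((6,8,11),([::12;6;4;10;11;5;7;13;14;8;9;15;16;18;24;0;25;1;21;19;17;23;3;2;22;20],0,0,10));
 ((6,8,12),([::26;5;7;13;14;8;9;15;16;10;12;18;19;25;4;6;0;2;1;3;24;22;20;21;23;17;11],0,0,13));
 ((6,8,13),([::16;22;20;14;12;18;24;26;25;3;2;1;23;21;15;13;19;17;11;5;27;0;6;7;9;8;10;4],0,0,17));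
 ((6,8,14),([::19;17;11;5;7;13;14;8;2;1;24;26;27;25;23;0;28;22;20;21;15;9;3;4;6;12;18;16;10],0,0,12));
 ((6,9,9),([::6;12;14;8;7;13;15;9;3;1;20;18;16;17;19;21;22;23;24;5;11;10;4;2;0],0,0,10));
 ((6,9,10),([::17;11;5;6;0;24;22;23;25;19;21;20;18;12;10;16;14;8;7;13;15;9;3;4;2;1],0,0,13));
 ((6,9,11),([::22;24;25;23;21;0;1;2;8;14;15;9;11;17;19;13;7;6;4;3;5;26;20;18;12;10;16],0,0,14));
 ((6,9,12),([::1;7;9;3;4;10;8;2;24;26;20;22;0;6;12;18;17;16;15;14;13;11;5;27;25;23;21;19],0,0,7));
 ((6,9,13),([::0;28;26;20;19;13;7;6;12;14;8;2;25;27;21;23;22;24;1;3;5;4;10;16;18;17;11;9;15],0,0,12));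
 ((6,9,14),([::17;23;22;16;18;24;0;2;26;20;14;8;6;12;10;11;9;7;1;3;4;5;29;28;27;25;19;13;15;21],0,0,21));
 ((6,10,1),([::1;0;12;10;8;6;4;2;3;5;7;9;11;13;14;15;16;17],0,9,0));
 ((6,10,2),([::10;8;2;0;18;17;16;14;12;11;13;15;9;7;6;4;5;3;1],0,9,0));
 ((6,10,3),([::3;1;19;13;15;16;17;18;0;14;12;10;8;2;4;5;6;7;9;11],0,10,0));
 ((6,10,4),([::19;4;5;11;13;12;10;9;7;6;8;2;0;20;1;3;18;16;14;15;17],0,12,0));
 ((6,10,5),([::0;21;19;18;12;6;4;2;1;3;5;11;9;10;8;7;13;15;17;16;14;20],0,5,0));
 ((6,10,6),([::5;3;4;2;19;17;0;22;20;21;15;13;14;16;10;8;6;7;9;11;12;18;1],0,10,0));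
 ((6,10,7),([::22;21;19;1;2;8;10;12;13;11;9;7;6;0;18;20;14;16;15;17;23;5;3;4],0,10,0));
 ((6,10,8),([::6;5;4;10;12;14;15;21;20;1;3;22;16;18;24;23;0;2;8;7;9;11;13;19;17],0,12,0));
 ((6,11,1),([::4;2;0;13;14;16;15;17;18;1;3;5;6;8;7;9;11;12;10],0,4,0));
 ((6,11,2),([::11;9;3;5;4;18;0;2;1;19;17;16;15;13;14;12;10;8;6;7],0,11,0));
 ((6,11,3),([::11;17;15;13;14;12;10;16;18;20;1;3;9;8;7;6;5;4;2;0;19],0,2,0));
 ((6,11,4),([::14;13;7;6;8;9;15;16;17;19;21;1;3;5;11;12;10;4;2;0;20;18],0,19,0));
 ((6,11,5),([::14;8;7;13;19;18;16;15;17;11;9;10;12;6;5;3;1;22;20;21;0;2;4],0,3,0));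
 ((6,11,6),([::9;8;14;12;18;20;22;0;1;2;3;5;7;6;4;10;16;15;17;11;13;19;21;23],0,21,0));
 ((6,11,7),([::19;21;15;17;16;14;12;10;8;9;3;22;20;18;24;0;23;4;2;1;7;6;5;11;13],0,13,0));
 ((6,11,8),([::11;9;7;1;25;24;22;16;10;8;14;15;17;19;13;12;18;20;21;23;3;4;2;0;6;5],0,23,0));
 ((7,1,9),([::0;17;1;13;7;6;12;11;5;4;10;16;15;14;8;2;3;9],0,0,9));
 ((7,1,10),([::11;17;16;10;4;5;6;8;14;15;9;3;2;1;7;13;0;18;12],0,0,13));
 ((7,1,11),([::16;10;4;5;11;13;7;6;12;18;19;0;1;2;8;14;15;9;3;17],0,0,9));
 ((7,1,12),([::8;14;15;9;11;17;2;3;18;12;13;19;4;10;16;1;0;20;5;6;7],0,0,14));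
 ((7,1,13),([::15;9;11;17;18;12;6;0;1;7;13;14;8;2;3;19;20;21;5;4;10;16],0,0,13));
 ((7,1,14),([::3;20;21;4;2;1;18;12;6;5;11;17;0;22;16;10;9;15;14;8;7;13;19],0,0,12));
 ((7,2,9),([::17;11;5;4;6;12;18;0;1;2;3;9;15;16;10;8;14;13;7],0,0,12));
 ((7,2,10),([::12;18;17;11;5;7;6;0;14;8;9;15;16;10;4;3;2;1;19;13],0,0,14));
 ((7,2,11),([::0;15;9;7;13;19;20;14;8;10;16;1;2;3;4;5;6;12;18;17;11],0,0,15));
 ((7,2,12),([::5;11;13;7;1;2;18;12;6;0;21;20;19;17;16;10;4;3;9;15;14;8],0,0,9));
 ((7,2,13),([::13;19;18;17;15;14;8;2;1;7;9;3;20;21;4;10;16;22;0;6;12;11;5],0,0,7));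
 ((7,2,14),([::10;8;2;4;22;16;17;23;0;18;12;11;5;6;7;1;19;13;14;20;21;15;9;3],0,0,18));
 ((7,3,9),([::4;18;19;1;2;0;6;12;13;7;8;14;15;9;10;16;17;11;5;3],0,0,12));
 ((7,3,10),([::15;9;10;16;17;11;13;19;18;12;6;8;14;20;5;4;3;2;0;1;7],0,0,14));
 ((7,3,11),([::14;8;7;13;11;5;21;19;20;4;10;16;15;17;18;12;6;0;1;2;3;9],0,0,9));
 ((7,3,12),([::21;22;0;2;8;9;3;1;7;13;19;20;14;15;16;10;4;6;12;18;17;11;5],0,0,7));
 ((7,3,13),([::14;20;18;17;16;10;4;3;9;8;2;0;6;12;11;5;23;22;21;15;13;7;1;19],0,0,8));
 ((7,3,14),([::12;6;0;19;17;11;5;24;18;16;10;4;3;2;1;7;13;14;8;9;15;21;20;22;23],0,0,11));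
 ((7,4,9),([::5;11;17;2;1;20;0;19;18;3;4;6;12;13;7;8;14;16;10;9;15],0,0,11));
 ((7,4,10),([::15;9;8;14;16;10;11;17;19;13;7;1;0;21;20;4;2;3;5;6;12;18],0,0,13));
 ((7,4,11),([::3;5;7;6;0;2;1;18;12;13;19;20;14;8;9;15;17;11;10;16;22;21;4],0,0,14));
 ((7,4,12),([::8;14;16;10;4;22;23;1;0;2;3;5;11;17;18;12;6;7;13;19;20;21;15;9],0,0,12));
 ((7,4,13),([::6;0;24;22;23;21;20;19;13;7;1;3;9;15;16;10;4;5;11;17;18;12;14;8;2],0,0,6));
 ((7,4,14),([::18;24;22;16;17;23;21;15;9;11;10;12;6;7;1;0;20;14;8;2;3;4;5;25;19;13],0,0,20));
 ((7,5,9),([::15;9;8;14;20;4;10;16;17;18;19;21;1;0;2;3;5;11;13;7;6;12],0,0,11));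
 ((7,5,10),([::4;10;16;15;14;8;7;13;19;2;0;17;18;20;21;22;1;3;9;11;5;6;12],0,0,9));
 ((7,5,11),([::15;9;10;16;22;0;1;3;21;20;18;19;17;23;5;11;12;6;7;13;14;8;2;4],0,0,11));
 ((7,5,12),([::0;6;7;1;20;18;19;21;15;17;11;5;24;23;22;3;9;8;2;4;10;16;14;13;12],0,0,6));
 ((7,5,13),([::17;18;16;22;24;25;19;20;0;6;12;13;7;1;2;8;10;4;5;11;9;3;23;21;15;14],0,0,8));
 ((7,5,14),([::19;20;18;17;11;5;4;10;9;3;24;23;2;8;14;12;6;0;25;26;1;7;13;15;21;22;16],0,0,7));
 ((7,6,9),([::11;5;3;9;10;4;2;8;6;0;1;7;13;15;16;22;21;20;19;17;18;12;14],0,0,6));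
 ((7,6,10),([::17;11;5;6;4;22;23;0;1;3;21;15;13;19;20;14;12;18;16;10;9;7;8;2],0,0,16));
 ((7,6,11),([::16;10;8;14;20;1;2;4;6;5;7;13;15;9;3;22;21;23;24;0;19;18;12;11;17],0,0,13));
 ((7,6,12),([::9;8;6;0;20;14;12;13;19;25;23;17;15;21;22;16;18;24;4;3;2;1;7;5;11;10],0,0,19));
 ((7,6,13),([::8;2;0;26;24;3;9;11;5;4;10;16;17;19;25;23;22;1;7;13;14;15;21;20;18;12;6],0,0,8));
 ((7,6,14),([::5;27;0;6;12;18;20;14;16;22;21;15;9;7;13;19;25;26;24;23;17;11;10;8;2;1;3;4],0,0,18));
 ((7,7,9),([::6;7;9;8;2;4;3;1;0;18;12;10;11;13;19;20;14;16;22;21;15;17;23;5],0,0,18));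
 ((7,7,10),([::21;15;16;10;4;5;11;13;12;14;8;2;3;9;7;1;24;23;22;20;18;17;19;0;6],0,0,6));
 ((7,7,11),([::2;22;21;20;19;13;7;6;12;18;16;10;8;14;15;9;11;17;23;25;0;24;4;5;3;1],0,0,12));
 ((7,7,12),([::8;2;23;25;19;20;22;21;15;14;13;7;1;3;9;11;5;4;10;12;6;0;26;24;18;16;17],0,0,8));
 ((7,7,13),([::23;25;27;5;4;10;16;18;12;11;17;15;9;8;14;20;26;24;2;3;1;0;6;7;13;19;21;22],0,0,13));
 ((7,7,14),([::12;6;7;13;15;9;3;5;11;17;18;16;10;8;14;20;21;22;23;0;1;24;26;28;27;4;2;25;19],0,0,11));
 ((7,8,9),([::7;13;19;0;2;8;10;16;15;9;11;17;18;12;14;20;21;22;23;24;1;3;5;4;6],0,0,15));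
 ((7,8,10),([::15;9;8;14;20;21;22;24;0;6;4;2;1;25;23;3;5;7;13;19;18;12;11;17;16;10],0,0,15));
 ((7,8,11),([::11;5;26;25;0;6;12;18;16;10;9;15;17;19;20;21;23;24;22;1;3;4;2;8;14;13;7],0,0,11));
 ((7,8,12),([::9;15;14;8;6;12;18;17;11;5;7;13;19;25;23;21;20;22;16;10;4;2;3;1;0;27;26;24],0,0,13));
 ((7,8,13),([::6;8;14;20;26;28;5;7;9;10;4;3;2;0;1;24;22;16;15;21;27;25;23;17;11;12;18;19;13],0,0,18));
 ((7,8,14),([::2;1;3;9;15;16;10;8;14;20;22;28;29;0;24;26;27;21;19;25;23;17;18;12;6;4;5;11;13;7],0,0,11));
 ((7,9,9),([::23;24;4;3;5;6;12;18;20;22;21;19;17;11;10;16;14;8;9;15;13;7;1;25;0;2],0,0,12));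
 ((7,9,10),([::7;13;14;8;9;15;17;11;5;3;4;10;12;6;0;26;24;25;23;21;19;20;18;16;22;1;2],0,0,10));
 ((7,9,11),([::19;13;15;21;27;5;3;9;10;16;17;11;12;18;20;14;8;7;6;4;2;0;1;23;25;26;24;22],0,0,16));
 ((7,9,12),([::15;21;20;14;16;22;28;1;2;4;3;5;6;0;27;26;25;19;13;7;9;11;17;23;24;18;12;10;8],0,0,19));
 ((7,9,13),([::9;11;17;18;12;13;19;25;1;0;6;4;28;27;29;23;21;15;14;20;26;24;22;16;10;8;7;5;3;2],0,0,17));
 ((7,9,14),([::7;1;30;5;11;13;12;6;4;10;8;2;3;9;15;21;19;18;24;23;17;16;14;20;22;28;27;29;0;25;26],0,0,7));
 ((7,10,1),([::15;16;18;17;0;1;2;4;6;8;14;12;13;11;10;9;7;5;3],0,7,0));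
 ((7,10,2),([::18;16;15;17;3;2;4;5;6;8;10;12;14;13;11;9;7;1;0;19],0,17,0));
 ((7,10,3),([::7;1;0;19;20;18;16;14;12;6;5;4;3;2;17;15;13;11;9;10;8],0,14,0));
 ((7,10,4),([::18;16;0;6;4;3;2;1;7;5;21;20;19;17;15;13;14;12;10;8;9;11],0,11,0));
 ((7,10,5),([::13;19;21;15;17;11;12;14;20;18;16;22;0;2;1;3;4;5;6;8;10;9;7],0,8,0));
 ((7,10,6),([::13;7;6;4;22;16;14;15;17;23;21;20;19;18;0;2;1;3;5;11;9;8;10;12],0,16,0));
 ((7,10,7),([::20;18;17;19;21;2;0;1;7;13;12;11;9;3;5;24;22;23;4;6;8;10;16;15;14],0,20,0));
 ((7,10,8),([::1;3;5;11;17;23;21;19;13;15;14;12;18;24;25;0;2;4;6;7;8;9;10;16;22;20],0,2,0));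
 ((7,11,1),([::1;0;2;4;6;7;5;3;17;19;18;16;15;14;13;11;9;8;10;12],0,12,0));
 ((7,11,2),([::11;9;15;16;17;18;20;1;2;0;19;13;14;12;10;8;7;5;3;4;6],0,5,0));
 ((7,11,3),([::19;17;16;15;9;11;10;12;13;14;20;18;2;0;21;1;3;5;7;8;6;4],0,7,0));
 ((7,11,4),([::11;9;8;10;4;3;1;7;5;6;0;22;21;20;18;16;14;12;13;15;17;19;2],0,18,0));
 ((7,11,5),([::8;14;13;19;18;12;6;4;2;0;22;20;21;23;1;3;5;7;9;10;11;17;16;15],0,6,0));
 ((7,11,6),([::6;5;4;2;0;23;22;24;1;7;13;14;8;10;12;11;17;19;21;20;18;16;15;9;3],0,18,0));
 ((7,11,7),([::16;14;12;18;17;19;20;22;24;4;10;9;11;13;7;8;2;1;3;5;6;0;25;23;21;15],0,23,0));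
 ((7,11,8),([::23;24;26;1;22;20;21;0;25;4;10;12;11;13;7;6;5;3;2;8;14;16;18;19;17;15;9],0,16,0));
 ((8,1,9),([::10;4;6;12;13;7;8;14;15;9;3;2;1;0;18;5;11;17;16],0,0,10));
 ((8,1,10),([::2;1;3;9;15;14;8;7;13;19;0;6;12;11;5;4;10;16;17;18],0,0,9));
 ((8,1,11),([::7;1;2;8;6;0;20;5;11;12;18;17;16;10;4;3;9;15;14;13;19],0,0,6));
 ((8,1,12),([::21;19;13;7;8;14;20;4;10;11;5;6;12;18;17;16;0;1;2;3;9;15],0,0,9));
 ((8,1,13),([::2;19;20;21;22;16;10;4;3;5;11;17;18;12;6;0;1;7;13;14;8;9;15],0,0,10));
 ((8,1,14),([::8;14;16;10;4;5;11;17;23;22;21;15;9;3;2;1;0;18;12;6;7;13;19;20],0,0,11));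
 ((8,2,9),([::18;0;6;12;13;14;15;16;17;11;5;19;1;7;8;2;3;9;10;4],0,0,6));
 ((8,2,10),([::1;0;2;8;10;4;5;11;12;6;7;13;19;20;14;15;9;3;18;17;16],0,0,8));
 ((8,2,11),([::11;5;21;0;6;7;1;17;15;16;18;12;13;14;8;2;3;9;10;4;20;19],0,0,6));
 ((8,2,12),([::0;1;3;2;8;14;15;9;10;16;22;20;21;4;5;11;17;18;12;6;7;13;19],0,0,14));
 ((8,2,13),([::8;2;0;22;23;17;18;19;1;7;13;14;20;21;3;9;15;16;10;4;5;11;12;6],0,0,7));
 ((8,2,14),([::16;10;8;14;20;19;13;11;17;18;12;6;0;24;5;4;23;22;21;15;9;3;2;1;7],0,0,15));
 ((8,3,9),([::5;11;12;6;0;20;1;2;3;9;15;13;7;8;14;16;17;18;19;4;10],0,0,9));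
 ((8,3,10),([::1;7;6;0;21;20;4;10;9;3;19;17;15;16;18;2;8;14;13;12;11;5],0,0,6));
 ((8,3,11),([::5;6;0;22;16;14;20;18;12;13;19;17;11;10;4;21;15;9;8;7;1;2;3],0,0,17));
 ((8,3,12),([::20;18;19;13;15;21;22;23;17;16;10;4;5;11;12;6;0;1;7;9;3;2;8;14],0,0,6));
 ((8,3,13),([::11;17;19;13;14;20;1;0;24;18;12;10;4;23;22;16;15;21;2;8;7;6;5;3;9],0,0,17));
 ((8,3,14),([::9;15;17;11;13;19;20;14;12;18;24;4;10;16;22;23;3;2;8;7;6;5;25;0;1;21],0,0,15));
 ((8,4,9),([::21;15;9;3;1;7;8;2;4;10;11;5;6;12;13;14;16;0;20;19;18;17],0,0,7));
 ((8,4,10),([::13;7;5;11;17;19;2;1;0;22;21;20;3;4;6;12;18;16;10;9;15;14;8],0,0,12));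
 ((8,4,11),([::4;2;3;5;11;13;7;8;14;15;9;10;16;22;21;20;19;1;23;17;18;0;6;12],0,0,11));
 ((8,4,12),([::9;15;21;23;24;5;7;8;14;20;19;13;12;18;17;11;10;16;22;3;2;4;6;0;1],0,0,14));
 ((8,4,13),([::14;8;9;15;21;1;3;23;17;16;10;4;5;11;12;6;7;13;19;18;20;22;2;0;25;24],0,0,11));
 ((8,4,14),([::6;0;21;15;17;23;25;19;20;26;5;4;2;8;7;1;22;16;18;24;3;9;10;11;12;13;14],0,0,21));
 ((8,5,9),([::17;11;10;16;22;1;7;9;8;6;5;4;3;2;19;13;12;18;20;14;15;21;0],0,0,16));
 ((8,5,10),([::2;0;23;22;21;20;19;13;12;18;16;10;4;6;5;11;17;15;9;3;1;7;8;14],0,0,14));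
 ((8,5,11),([::0;19;20;14;8;6;12;18;17;11;5;7;13;15;9;10;16;22;21;23;24;1;2;3;4],0,0,12));
 ((8,5,12),([::16;22;24;18;12;13;19;21;15;17;23;3;4;10;9;11;5;6;7;8;14;20;0;25;1;2],0,0,19));
 ((8,5,13),([::24;18;16;22;1;7;13;11;10;8;9;15;21;0;26;25;19;17;23;2;3;4;5;6;12;14;20],0,0,20));
 ((8,5,14),([::20;26;27;25;3;9;15;16;18;24;2;1;0;22;21;23;17;19;13;7;8;14;12;6;5;11;10;4],0,0,10));
 ((8,6,9),([::19;18;12;6;8;14;20;21;22;0;23;1;2;3;4;10;16;17;15;9;7;13;11;5],0,0,10));
 ((8,6,10),([::8;6;4;2;0;1;7;5;3;22;23;24;18;12;11;17;16;10;9;15;21;20;14;13;19],0,0,15));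
 ((8,6,11),([::17;15;13;12;6;4;10;16;18;24;23;22;21;19;20;14;8;2;3;9;11;5;25;0;1;7],0,0,7));
 ((8,6,12),([::12;6;8;14;16;15;9;7;13;19;20;26;5;11;10;4;2;1;3;24;25;0;21;22;23;17;18],0,0,10));
 ((8,6,13),([::14;20;26;27;25;3;1;2;0;6;8;9;10;4;5;7;13;19;21;15;16;22;23;17;11;12;18;24],0,0,17));
 ((8,6,14),([::24;23;0;1;2;3;5;28;22;20;14;8;6;4;10;16;17;11;12;18;19;13;7;9;15;21;27;25;26],0,0,14));
 ((8,7,9),([::13;7;9;15;14;8;6;12;11;5;3;22;23;24;0;1;20;21;19;17;18;16;10;4;2],0,0,10));
 ((8,7,10),([::11;5;6;12;18;24;4;10;16;14;8;7;13;15;17;19;20;22;21;23;25;0;1;2;3;9],0,0,9));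
 ((8,7,11),([::5;11;17;16;18;24;26;1;7;9;3;4;10;8;2;23;22;21;20;19;25;0;6;12;13;15;14],0,0,6));
 ((8,7,12),([::18;24;22;16;10;11;9;3;25;19;20;26;27;21;15;17;23;1;0;2;4;6;5;7;8;14;13;12],0,0,21));
 ((8,7,13),([::27;21;22;20;14;15;13;12;6;5;11;10;4;2;8;7;1;24;18;16;17;19;25;23;0;28;26;3;9],0,0,7));
 ((8,7,14),([::3;4;5;6;7;13;14;8;9;15;21;27;25;19;20;18;12;10;16;22;24;0;28;26;2;1;29;23;17;11],0,0,13));
 ((8,8,9),([::10;16;14;8;7;13;15;9;11;17;19;20;18;12;6;5;3;2;0;1;21;22;23;25;24;4],0,0,12));
 ((8,8,10),([::12;18;24;3;4;6;8;2;0;1;26;20;19;25;23;17;16;22;21;15;14;13;11;5;7;9;10],0,0,21));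
 ((8,8,11),([::5;7;13;19;18;12;6;0;22;16;14;20;21;15;17;23;25;24;26;27;1;2;4;3;9;8;10;11],0,0,18));
 ((8,8,12),([::6;8;10;11;13;19;20;14;12;18;24;1;2;4;27;28;0;23;17;16;22;21;15;9;7;5;3;26;25],0,0,18));
 ((8,8,13),([::11;17;18;24;0;6;7;8;10;4;2;1;3;5;29;23;22;28;26;20;21;27;25;19;13;12;14;16;15;9],0,0,24));
 ((8,8,14),([::11;5;7;13;15;9;3;4;10;12;6;8;14;16;17;23;22;21;19;25;0;1;2;27;28;26;20;18;24;30;29],0,0,9));
 ((8,9,9),([::23;17;15;21;20;14;16;22;1;7;5;6;8;9;11;13;12;10;4;3;2;0;26;24;18;19;25],0,0,20));
 ((8,9,10),([::26;24;23;1;27;25;19;17;11;10;16;15;9;8;14;13;7;5;3;4;2;0;22;21;20;18;12;6],0,0,12));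
 ((8,9,11),([::17;11;5;6;0;28;26;27;21;23;25;24;22;20;19;13;12;18;16;10;4;2;3;1;7;9;15;14;8],0,0,14));
 ((8,9,12),([::23;29;0;1;2;4;6;12;11;17;16;10;8;14;13;15;9;7;5;3;27;21;22;28;26;20;18;24;25;19],0,0,24));
 ((8,9,13),([::18;12;11;17;19;13;7;8;14;15;9;10;16;22;21;27;29;4;6;5;3;1;2;0;25;23;24;30;28;26;20],0,0,14));
 ((8,9,14),([::19;25;23;17;18;24;26;20;21;27;1;7;6;0;30;29;31;5;11;10;8;9;15;13;12;14;16;22;28;2;4;3],0,0,23));
 ((8,10,1),([::12;14;16;17;15;13;7;9;11;10;8;6;5;3;4;2;1;0;19;18],0,14,0));
 ((8,10,2),([::13;12;10;4;5;3;1;2;0;20;19;18;16;14;15;17;11;9;7;8;6],0,11,0));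
 ((8,10,3),([::1;3;5;6;7;8;14;20;0;2;4;10;9;11;12;13;15;16;18;17;19;21],0,3,0));
 ((8,10,4),([::5;3;1;18;16;10;12;13;15;14;20;19;21;22;0;2;4;6;7;8;9;11;17],0,4,0));
 ((8,10,5),([::23;22;20;19;21;3;9;10;12;6;5;4;2;0;1;7;8;14;16;18;17;15;13;11],0,21,0));
 ((8,10,6),([::14;20;22;23;0;1;24;5;6;7;8;2;4;3;9;11;12;10;16;18;17;15;13;19;21],0,21,0));
 ((8,10,7),([::16;15;9;11;10;4;5;6;0;24;25;23;21;19;17;18;20;22;2;3;1;7;13;12;14;8],0,20,0));
 ((8,10,8),([::10;16;22;24;25;23;21;20;19;18;17;15;14;12;6;4;2;8;9;3;5;11;13;7;1;26;0],0,23,0));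
 ((8,11,1),([::0;1;2;8;6;4;3;5;7;9;11;10;12;13;14;15;17;19;20;18;16],0,17,0));
 ((8,11,2),([::21;15;17;11;12;13;14;16;18;19;20;0;1;2;4;6;8;10;9;7;5;3],0,5,0));
 ((8,11,3),([::18;1;22;5;3;20;19;21;0;2;4;6;7;9;8;10;11;12;13;14;16;17;15],0,16,0));
 ((8,11,4),([::18;12;10;11;13;7;9;8;2;0;22;20;14;15;16;17;19;21;23;1;3;4;5;6],0,2,0));
 ((8,11,5),([::14;16;17;15;13;12;10;11;9;7;6;4;23;22;24;5;3;1;0;19;18;20;21;2;8],0,15,0));
 ((8,11,6),([::6;8;7;5;4;3;23;21;15;14;16;10;9;11;17;19;13;12;18;20;22;24;25;1;2;0],0,22,0));
 ((8,11,7),([::10;12;14;20;22;16;17;18;19;21;15;13;11;5;4;2;1;7;6;8;9;3;24;26;0;25;23],0,14,0));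
 ((8,11,8),([::18;16;10;8;6;0;2;1;3;4;26;27;5;7;9;15;21;22;24;25;23;17;19;20;14;13;11;12],0,8,0));
 ((9,1,1),([::8;9;10;11;0;1;7;6;5;4;2;3],9,0,0));
 ((9,1,2),([::12;5;6;7;8;9;10;11;4;3;2;0;1],6,0,0));
 ((9,1,3),([::11;10;2;3;1;9;8;7;6;5;4;12;13;0],5,0,0));
 ((9,1,4),([::10;11;2;4;5;6;7;1;0;14;13;12;3;9;8],11,0,0));
 ((9,1,5),([::15;14;8;2;0;1;7;13;12;11;10;9;3;4;5;6],15,0,0));
 ((9,1,6),([::6;4;5;11;12;1;0;16;15;14;8;7;13;2;3;9;10],3,0,0));
 ((9,1,7),([::9;15;14;13;12;0;1;7;8;6;5;11;17;16;10;4;3;2],1,0,0));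
 ((9,1,8),([::17;11;13;12;18;0;6;5;4;3;9;10;16;15;14;1;7;8;2],10,0,0));
 ((9,2,1),([::4;11;12;10;9;8;7;6;5;3;2;1;0],10,0,0));
 ((9,2,2),([::5;6;7;8;10;9;11;3;4;12;13;0;1;2],7,0,0));
 ((9,2,3),([::7;9;3;2;1;0;14;8;6;5;4;10;11;12;13],3,0,0));
 ((9,2,4),([::1;15;14;8;9;10;0;2;3;4;5;11;12;13;7;6],4,0,0));
 ((9,2,5),([::3;5;6;7;8;14;13;2;4;15;9;10;11;12;1;0;16],6,0,0));
 ((9,2,6),([::6;8;9;10;12;11;5;17;0;1;7;13;14;2;3;4;16;15],14,0,0));
 ((9,2,7),([::11;10;8;9;3;2;1;7;13;12;6;0;18;5;4;17;16;14;15],17,0,0));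
 ((9,2,8),([::1;2;0;6;7;8;9;10;16;15;14;13;19;5;3;17;11;12;18;4],10,0,0));
 ((9,3,1),([::8;2;0;1;13;12;11;10;9;7;6;5;4;3],13,0,0));
 ((9,3,2),([::4;2;8;7;6;5;3;9;10;11;12;13;14;1;0],11,0,0));
 ((9,3,3),([::4;3;1;15;0;2;12;11;10;9;8;14;13;7;6;5],4,0,0));
 ((9,3,4),([::5;4;15;13;12;11;10;9;3;14;16;0;1;2;8;6;7],12,0,0));
 ((9,3,5),([::2;1;13;11;12;0;17;15;16;14;8;7;6;5;4;10;9;3],2,0,0));
 ((9,3,6),([::4;3;1;14;8;7;9;10;11;5;6;12;13;0;2;15;16;17;18],4,0,0));
 ((9,3,7),([::0;6;8;2;1;15;14;13;12;11;10;4;5;19;18;16;17;3;9;7],14,0,0));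
 ((9,3,8),([::19;4;2;1;3;18;17;16;15;0;6;12;13;14;20;5;11;10;9;7;8],14,0,0));
 ((9,4,1),([::7;5;4;3;2;0;1;14;13;12;6;8;9;10;11],4,0,0));
 ((9,4,2),([::8;6;4;5;7;13;12;11;10;9;3;2;1;0;14;15],3,0,0));
 ((9,4,3),([::12;1;0;6;5;7;8;9;10;11;13;14;16;15;4;2;3],9,0,0));
 ((9,4,4),([::14;2;1;3;4;6;7;8;9;10;16;15;13;11;12;0;17;5],7,0,0));
 ((9,4,5),([::18;1;3;4;10;9;8;2;0;17;16;15;14;13;7;6;12;11;5],14,0,0));
 ((9,4,6),([::5;19;1;2;4;18;0;6;7;13;12;11;10;8;9;3;17;16;15;14],16,0,0));
 ((9,4,7),([::18;17;16;1;0;2;3;4;5;11;10;8;14;20;19;13;15;9;7;6;12],5,0,0));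
 ((9,4,8),([::6;4;5;7;8;9;10;12;11;17;1;0;16;18;2;3;19;13;14;20;21;15],8,0,0));
 ((9,5,1),([::13;15;14;0;1;2;12;11;9;10;8;7;6;5;3;4],12,0,0));
 ((9,5,2),([::12;6;8;9;10;11;13;14;15;16;1;7;5;4;3;2;0],15,0,0));
 ((9,5,3),([::4;5;7;8;6;0;1;3;2;14;12;13;15;16;17;11;10;9],11,0,0));
 ((9,5,4),([::2;8;10;12;11;9;3;4;5;18;1;0;17;16;15;14;13;7;6],17,0,0));
 ((9,5,5),([::9;7;6;12;18;16;17;15;13;19;0;1;2;3;4;5;11;10;8;14],5,0,0));
 ((9,5,6),([::10;4;2;3;9;11;17;15;16;18;19;20;0;1;7;5;6;12;13;14;8],20,0,0));
 ((9,5,7),([::9;8;6;7;5;4;20;18;17;1;21;15;14;13;19;3;2;0;16;10;11;12],5,0,0));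
 ((9,5,8),([::0;1;22;5;11;13;12;18;17;19;20;21;4;6;7;8;2;3;9;15;14;16;10],21,0,0));
 ((9,6,1),([::0;15;9;7;8;6;5;4;3;2;1;16;14;13;12;10;11],6,0,0));
 ((9,6,2),([::2;0;6;12;13;14;16;15;17;1;3;4;5;7;8;9;10;11],14,0,0));
 ((9,6,3),([::16;17;15;13;7;9;11;10;8;14;12;18;0;1;2;3;4;5;6],1,0,0));
 ((9,6,4),([::3;4;5;11;13;14;16;15;17;18;0;19;1;7;6;12;10;9;8;2],14,0,0));
 ((9,6,5),([::14;8;6;12;11;17;15;13;19;18;16;10;9;7;5;4;3;2;1;0;20],4,0,0));
 ((9,6,6),([::2;4;10;9;15;13;19;20;21;0;1;3;5;11;12;6;7;8;14;16;18;17],20,0,0));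
 ((9,6,7),([::16;10;4;5;3;20;19;17;18;12;13;11;9;15;14;8;7;6;0;2;1;22;21],20,0,0));
 ((9,6,8),([::6;8;2;0;18;19;13;15;16;22;21;20;14;12;11;10;9;3;4;5;7;1;23;17],12,0,0));
 ((9,7,1),([::14;16;17;0;6;4;2;1;3;5;7;8;9;10;11;12;13;15],10,0,0));
 ((9,7,2),([::11;12;14;13;0;17;18;16;15;2;1;3;4;5;6;8;10;9;7],12,0,0));
 ((9,7,3),([::8;6;12;10;4;2;1;0;19;18;17;16;15;14;13;11;9;3;5;7],2,0,0));
 ((9,7,4),([::16;15;14;20;18;17;11;12;10;9;8;6;7;13;19;0;1;3;5;4;2],1,0,0));
 ((9,7,5),([::6;0;2;3;9;7;5;4;20;18;19;21;1;17;16;15;14;8;10;11;12;13],16,0,0));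
 ((9,7,6),([::1;3;20;19;17;11;12;18;16;14;13;15;21;22;5;4;2;0;6;7;8;9;10],10,0,0));
 ((9,7,7),([::8;7;6;0;2;1;23;21;19;18;12;11;17;16;10;9;15;13;14;20;22;4;5;3],8,0,0));
 ((9,7,8),([::23;24;22;3;1;0;19;17;11;12;13;15;9;10;16;18;20;14;8;7;6;5;4;2;21],5,0,0));
 ((9,8,1),([::3;2;0;18;17;15;16;14;12;13;11;10;9;8;6;4;5;7;1],10,0,0));
 ((9,8,2),([::19;13;12;11;9;7;5;6;8;10;4;3;1;2;0;18;17;16;15;14],12,0,0));
 ((9,8,3),([::10;9;8;2;1;0;19;20;18;17;11;13;15;16;14;12;6;7;5;3;4],1,0,0));
 ((9,8,4),([::0;2;18;16;15;9;8;7;5;6;4;3;1;21;19;20;14;13;12;10;11;17],9,0,0));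
 ((9,8,5),([::21;20;19;18;17;15;13;7;1;3;4;6;8;9;10;16;14;12;11;5;22;0;2],18,0,0));
 ((9,8,6),([::20;2;8;9;10;11;17;19;21;15;13;14;12;18;16;22;0;23;1;3;4;5;6;7],10,0,0));
 ((9,8,7),([::6;0;1;7;5;4;23;21;15;13;12;14;16;17;19;20;18;24;22;3;2;8;9;10;11],10,0,0));
 ((9,8,8),([::20;21;23;25;0;1;7;9;8;2;22;24;4;10;16;14;15;17;18;19;13;11;12;6;5;3],21,0,0));
 ((9,9,1),([::12;10;16;18;19;0;2;1;3;5;4;6;7;8;9;11;13;14;15;17],19,0,0));
 ((9,9,2),([::18;19;17;11;9;8;6;7;5;3;4;2;1;20;0;15;16;14;13;12;10],2,0,0));
 ((9,9,3),([::15;17;19;20;21;1;2;0;6;8;7;5;4;3;9;10;11;13;14;12;18;16],20,0,0));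
 ((9,9,4),([::6;12;14;16;10;11;17;15;13;19;18;20;22;21;0;1;2;3;4;5;7;9;8],2,0,0));
 ((9,9,5),([::3;1;0;18;20;19;13;11;10;9;7;5;4;2;8;6;12;14;15;16;17;23;21;22],1,0,0));
 ((9,9,6),([::14;15;21;23;22;3;5;11;10;8;9;7;1;24;0;2;4;6;12;13;19;20;18;17;16],13,0,0));
 ((9,9,7),([::22;24;23;3;4;2;0;1;25;5;6;7;8;10;16;14;12;18;17;11;9;15;13;19;20;21],20,0,0));
 ((9,9,8),([::17;19;18;16;14;20;22;24;26;25;0;21;15;13;12;6;7;1;3;4;5;11;10;9;8;2;23],13,0,0));
 ((1,3,8),([::5;6;8;2;9;3;10;4;11;0;7;1;12],0,0,0));
 ((1,4,6),([::9;3;1;7;5;11;0;6;4;10;8;2],0,0,0));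
 ((1,4,7),([::7;5;12;1;2;9;3;10;4;11;0;6;8],0,0,0));
 ((1,4,8),([::4;10;2;0;8;6;12;11;9;1;7;13;5;3],0,0,0));
 ((1,5,5),([::1;7;9;3;5;11;0;6;8;10;4;2],0,0,0));
 ((1,5,6),([::11;9;2;0;6;8;7;1;12;5;3;10;4],0,0,0));
 ((1,5,7),([::3;1;9;7;13;5;11;12;6;4;2;10;8;0],0,0,0));
 ((1,5,8),([::6;8;14;5;7;9;3;12;11;2;0;13;4;10;1],0,0,0));
 ((1,6,4),([::0;2;4;10;8;6;5;11;9;3;1;7],0,0,0));
 ((1,6,5),([::2;0;7;8;6;4;10;12;5;11;9;3;1],0,0,0));
 ((1,6,6),([::5;3;1;13;7;9;11;10;4;12;6;0;2;8],0,0,0));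
 ((1,6,7),([::8;9;11;13;7;5;14;1;10;4;2;0;6;12;3],0,0,0));
 ((1,6,8),([::8;14;4;2;0;6;12;10;11;5;15;1;3;9;7;13],0,0,0));
 ((1,7,3),([::3;1;11;9;7;5;4;10;0;6;8;2],0,0,0));
 ((1,7,4),([::9;11;12;10;3;5;7;1;8;6;0;2;4],0,0,0));
 ((1,7,5),([::7;9;3;11;5;13;1;2;4;6;0;12;10;8],0,0,0));
 ((1,7,6),([::2;4;3;5;7;13;11;9;0;6;12;10;1;14;8],0,0,0));
 ((1,7,7),([::6;12;10;4;14;0;2;8;9;11;13;7;1;15;5;3],0,0,0));
 ((1,7,8),([::3;4;10;16;1;7;5;11;9;15;13;2;0;6;8;14;12],0,0,0));
 ((1,8,2),([::6;0;10;8;2;4;3;5;7;9;11;1],0,0,0));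
 ((1,8,3),([::9;2;4;10;8;6;0;11;12;1;3;5;7],0,0,0));
 ((1,8,4),([::2;8;6;0;12;10;4;5;3;1;13;7;9;11],0,0,0));
 ((1,8,5),([::0;9;11;2;1;3;5;7;13;4;6;8;14;12;10],0,0,0));
 ((1,8,6),([::0;6;4;2;12;14;8;10;9;3;1;7;5;11;13;15],0,0,0));
 ((1,8,7),([::0;1;7;5;16;14;3;9;11;13;15;4;6;12;10;8;2],0,0,0));
 ((1,8,8),([::17;11;5;7;9;3;15;13;1;0;6;4;2;8;10;16;14;12],0,0,0));
 ((1,9,1),([::11;9;7;1;3;5;6;4;2;0;10;8],0,0,0));
 ((1,9,2),([::4;10;8;6;12;1;3;2;0;11;9;7;5],0,0,0));
 ((1,9,3),([::5;3;1;9;11;13;7;8;6;4;10;12;0;2],0,0,0));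
 ((1,9,4),([::14;12;11;9;3;5;7;1;10;8;6;4;13;0;2],0,0,0));
 ((1,9,5),([::11;13;3;5;15;9;7;1;2;4;6;8;10;0;14;12],0,0,0));
 ((1,9,6),([::7;13;15;9;11;12;14;8;6;0;2;4;10;16;1;3;5],0,0,0));
 ((1,9,7),([::7;5;3;1;13;11;17;15;9;8;10;16;0;12;6;4;2;14],0,0,0));
 ((1,9,8),([::12;10;11;13;15;9;3;16;18;5;7;1;14;8;6;4;17;0;2],0,0,0));
 ((2,2,8),([::6;0;12;5;3;10;4;11;9;2;8;7;1],0,0,0));
 ((2,3,6),([::2;8;6;0;1;7;5;11;9;3;4;10],0,0,0));
 ((2,3,7),([::11;10;8;1;7;0;6;12;5;3;4;2;9],0,0,0));
 ((2,3,8),([::11;9;7;13;5;6;12;4;10;2;8;0;1;3],0,0,0));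
 ((2,4,5),([::1;0;6;4;10;8;2;3;9;11;5;7],0,0,0));
 ((2,4,6),([::4;6;12;10;9;2;3;5;11;0;7;1;8],0,0,0));
 ((2,4,7),([::11;3;9;10;4;12;6;8;2;0;1;13;7;5],0,0,0));
 ((2,4,8),([::13;4;3;12;6;5;14;8;10;1;7;9;11;2;0],0,0,0));
 ((2,5,4),([::8;6;5;11;1;7;9;3;2;4;10;0],0,0,0));
 ((2,5,5),([::9;11;0;2;8;10;4;5;12;6;7;1;3],0,0,0));
 ((2,5,6),([::5;13;11;10;12;4;2;8;0;6;7;9;1;3],0,0,0));
 ((2,5,7),([::3;12;11;13;4;6;5;14;8;10;1;7;9;0;2],0,0,0));
 ((2,5,8),([::12;14;4;2;8;6;7;9;3;13;15;5;11;1;0;10],0,0,0));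
 ((2,6,3),([::2;1;3;9;7;5;11;0;10;4;6;8],0,0,0));
 ((2,6,4),([::12;6;7;0;2;4;11;9;10;8;1;3;5],0,0,0));
 ((2,6,5),([::3;5;7;8;6;12;4;10;2;0;1;9;11;13],0,0,0));
 ((2,6,6),([::11;12;10;4;2;1;14;8;6;0;9;3;5;7;13],0,0,0));
 ((2,6,7),([::1;7;6;12;14;8;2;4;10;0;15;13;11;9;3;5],0,0,0));
 ((2,6,8),([::8;6;4;10;12;13;7;1;2;0;15;9;3;14;16;5;11],0,0,0));
 ((2,7,2),([::2;3;9;7;5;11;1;0;10;8;6;4],0,0,0));
 ((2,7,3),([::9;2;0;12;10;8;6;4;3;1;7;5;11],0,0,0));
 ((2,7,4),([::6;5;11;9;3;1;13;7;8;10;4;2;0;12],0,0,0));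
 ((2,7,5),([::7;9;11;10;8;14;5;3;12;6;4;13;0;2;1],0,0,0));
 ((2,7,6),([::13;12;2;0;6;8;14;4;10;11;9;15;1;3;5;7],0,0,0));
 ((2,7,7),([::13;14;15;4;2;8;10;16;1;12;6;0;11;9;7;5;3],0,0,0));
 ((2,7,8),([::16;10;4;2;14;13;7;9;11;5;3;15;17;1;0;12;6;8],0,0,0));
 ((2,8,1),([::9;10;8;6;4;2;0;11;1;7;5;3],0,0,0));
 ((2,8,2),([::10;4;3;5;7;9;11;0;2;1;12;6;8],0,0,0));
 ((2,8,3),([::0;6;7;5;3;1;13;11;9;10;8;2;4;12],0,0,0));
 ((2,8,4),([::0;9;8;14;1;3;5;7;13;11;10;12;6;4;2],0,0,0));
 ((2,8,5),([::9;7;8;10;4;2;12;6;0;14;15;13;11;1;3;5],0,0,0));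
 ((2,8,6),([::11;9;7;5;6;12;1;16;14;3;4;10;8;2;13;15;0],0,0,0));
 ((2,8,7),([::12;13;1;3;15;9;11;17;5;7;6;8;14;16;0;2;4;10],0,0,0));
 ((2,8,8),([::7;13;0;2;15;14;16;3;1;18;5;11;9;8;10;12;6;4;17],0,0,0));
 ((2,9,1),([::7;9;2;0;11;12;1;3;5;4;6;8;10],0,0,0));
 ((2,9,2),([::7;8;0;12;10;2;4;6;5;3;1;13;11;9],0,0,0));
 ((2,9,3),([::12;10;8;2;3;4;6;0;13;11;9;7;5;14;1],0,0,0));
 ((2,9,4),([::13;15;5;3;1;7;9;8;6;4;2;12;14;0;10;11],0,0,0));
 ((2,9,5),([::13;14;3;2;0;11;9;7;5;16;1;12;10;8;6;4;15],0,0,0));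
 ((2,9,6),([::14;12;6;4;10;11;13;15;3;5;17;1;7;9;8;2;0;16],0,0,0));
 ((2,9,7),([::12;13;7;1;14;8;6;4;2;0;17;15;9;11;10;16;18;5;3],0,0,0));
 ((2,9,8),([::4;3;9;11;5;19;17;15;1;7;13;14;16;18;12;10;8;6;0;2],0,0,0));
 ((3,1,8),([::10;4;5;12;11;0;6;7;1;8;2;9;3],0,0,0));
 ((3,2,6),([::4;10;0;6;7;1;2;8;9;3;5;11],0,0,0));
 ((3,2,7),([::10;11;0;6;12;5;4;3;9;7;1;8;2],0,0,0));
 ((3,2,8),([::2;3;5;13;11;10;4;12;6;0;8;7;1;9],0,0,0));
 ((3,3,5),([::4;5;11;10;8;2;0;6;7;1;3;9],0,0,0));
 ((3,3,6),([::7;5;3;10;11;4;2;9;8;1;0;6;12],0,0,0));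
 ((3,3,7),([::4;10;12;0;8;2;3;9;1;13;7;6;5;11],0,0,0));
 ((3,3,8),([::9;0;6;12;13;4;3;5;7;1;14;8;2;11;10],0,0,0));
 ((3,4,4),([::6;0;10;11;5;3;4;2;8;9;7;1],0,0,0));
 ((3,4,5),([::7;9;8;1;2;4;3;10;12;5;11;0;6],0,0,0));
 ((3,4,6),([::3;9;8;7;1;13;11;5;6;12;0;2;10;4],0,0,0));
 ((3,4,7),([::4;5;6;0;9;3;1;10;12;14;8;7;13;11;2],0,0,0));
 ((3,4,8),([::1;11;10;12;14;0;6;4;5;15;9;3;13;7;8;2],0,0,0));
 ((3,5,3),([::6;0;10;11;5;7;9;8;2;4;3;1],0,0,0));
 ((3,5,4),([::12;0;11;5;4;2;1;7;9;3;10;8;6],0,0,0));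
 ((3,5,5),([::8;0;1;13;11;10;2;4;12;6;5;7;9;3],0,0,0));
 ((3,5,6),([::3;12;6;8;10;11;5;4;13;7;9;0;2;1;14],0,0,0));
 ((3,5,7),([::8;6;12;11;1;15;5;7;9;3;2;0;10;4;14;13],0,0,0));
 ((3,5,8),([::10;4;3;14;13;15;16;5;11;9;7;1;12;6;8;2;0],0,0,0));
 ((3,6,2),([::6;7;8;2;0;10;4;5;3;1;11;9],0,0,0));
 ((3,6,3),([::4;11;10;3;5;7;9;8;6;12;1;0;2],0,0,0));
 ((3,6,4),([::11;10;9;7;5;13;1;3;4;2;8;0;12;6],0,0,0));
 ((3,6,5),([::13;14;8;9;11;10;1;7;5;3;12;6;4;2;0],0,0,0));
 ((3,6,6),([::4;5;11;1;7;9;15;14;12;10;8;6;0;2;3;13],0,0,0));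
 ((3,6,7),([::3;5;6;12;11;9;10;4;15;13;7;1;16;14;8;2;0],0,0,0));
 ((3,6,8),([::6;8;14;16;17;5;4;10;12;0;2;3;15;9;11;13;7;1],0,0,0));
 ((3,7,1),([::0;1;11;9;10;8;2;4;6;7;5;3],0,0,0));
 ((3,7,2),([::6;7;0;2;4;10;8;9;11;12;1;3;5],0,0,0));
 ((3,7,3),([::4;5;13;11;3;9;7;6;8;10;12;0;2;1],0,0,0));
 ((3,7,4),([::2;1;7;9;0;14;13;11;5;3;12;10;8;6;4],0,0,0));
 ((3,7,5),([::3;2;4;10;8;9;11;5;7;13;15;1;0;6;12;14],0,0,0));
 ((3,7,6),([::8;14;13;7;6;0;2;4;15;9;11;12;10;16;1;3;5],0,0,0));
 ((3,7,7),([::3;5;11;13;7;8;2;1;17;15;9;10;16;14;12;0;6;4],0,0,0));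
 ((3,7,8),([::5;7;9;15;16;3;1;18;0;2;8;14;13;11;17;4;10;12;6],0,0,0));
 ((3,8,1),([::9;10;4;2;0;11;12;1;3;5;7;8;6],0,0,0));
 ((3,8,2),([::6;4;3;9;7;8;10;12;0;2;1;13;11;5],0,0,0));
 ((3,8,3),([::0;9;7;8;14;1;3;5;6;4;2;11;13;12;10],0,0,0));
 ((3,8,4),([::5;3;13;14;15;9;7;1;11;12;10;8;6;4;2;0],0,0,0));
 ((3,8,5),([::1;12;14;16;0;2;13;11;10;4;6;8;7;5;3;9;15],0,0,0));
 ((3,8,6),([::5;4;16;17;15;3;9;11;13;1;7;6;8;10;12;14;2;0],0,0,0));
 ((3,8,7),([::17;4;5;3;2;15;9;11;10;12;14;16;18;1;7;13;0;6;8],0,0,0));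
 ((3,8,8),([::17;15;16;18;0;19;1;7;13;11;5;3;9;10;4;2;8;14;12;6],0,0,0));
 ((3,9,1),([::12;4;2;0;13;1;3;5;7;6;8;10;9;11],0,0,0));
 ((3,9,2),([::14;1;0;6;8;2;4;3;5;7;9;11;13;12;10],0,0,0));
 ((3,9,3),([::6;4;2;12;11;1;15;13;14;0;10;8;9;7;5;3],0,0,0));
 ((3,9,4),([::1;12;6;5;7;9;3;4;2;0;15;13;11;10;8;14;16],0,0,0));
 ((3,9,5),([::7;13;11;9;3;1;0;2;4;16;10;12;14;15;17;5;6;8],0,0,0));
 ((3,9,6),([::9;15;14;16;10;8;2;0;18;1;3;5;7;13;11;12;6;4;17],0,0,0));
 ((3,9,7),([::16;15;14;8;6;4;2;0;18;12;10;9;11;5;19;17;3;1;7;13],0,0,0));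
 ((3,9,8),([::11;17;15;16;14;12;18;19;13;7;1;20;5;3;9;10;8;6;0;2;4],0,0,0));
 ((4,1,6),([::7;1;2;8;6;0;11;5;4;10;9;3],0,0,0));
 ((4,1,7),([::9;3;1;2;8;7;0;6;5;12;11;4;10],0,0,0));
 ((4,1,8),([::0;8;10;4;5;13;7;6;12;11;3;9;1;2],0,0,0));
 ((4,2,5),([::0;10;4;3;9;11;5;6;7;1;2;8],0,0,0));
 ((4,2,6),([::5;3;1;8;2;9;10;4;11;12;0;7;6],0,0,0));
 ((4,2,7),([::5;6;7;1;9;3;11;10;4;2;8;0;12;13],0,0,0));
 ((4,2,8),([::2;4;5;14;8;7;13;11;10;1;0;6;12;3;9],0,0,0));
 ((4,3,4),([::7;1;11;0;10;4;5;6;8;2;3;9],0,0,0));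
 ((4,3,5),([::0;12;1;8;10;3;2;9;7;6;5;11;4],0,0,0));
 ((4,3,6),([::2;4;12;13;7;8;6;0;1;9;3;5;11;10],0,0,0));
 ((4,3,7),([::3;12;6;4;5;7;9;0;1;10;11;2;8;14;13],0,0,0));
 ((4,3,8),([::12;13;15;1;11;5;7;6;0;10;9;3;4;14;8;2],0,0,0));
 ((4,4,3),([::10;4;3;5;11;1;0;2;8;9;7;6],0,0,0));
 ((4,4,4),([::2;1;7;0;11;9;3;4;5;6;12;10;8],0,0,0));
 ((4,4,5),([::8;0;13;5;4;10;12;6;7;9;11;3;1;2],0,0,0));
 ((4,4,6),([::14;5;7;6;0;2;11;12;13;4;10;8;9;3;1],0,0,0));
 ((4,4,7),([::8;9;15;14;4;2;3;5;11;13;7;1;0;10;12;6],0,0,0));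
 ((4,4,8),([::16;0;1;12;10;9;11;5;3;14;8;2;13;7;6;4;15],0,0,0));
 ((4,5,2),([::6;8;7;5;4;10;0;1;11;9;3;2],0,0,0));
 ((4,5,3),([::3;10;9;11;0;7;8;6;12;1;2;4;5],0,0,0));
 ((4,5,4),([::6;12;13;1;7;9;11;10;4;5;3;2;0;8],0,0,0));
 ((4,5,5),([::2;8;7;9;3;1;0;14;12;10;4;13;11;5;6],0,0,0));
 ((4,5,6),([::8;7;1;0;10;4;6;12;14;13;15;9;11;5;3;2],0,0,0));
 ((4,5,7),([::3;1;0;15;14;13;2;8;7;9;11;5;16;10;4;6;12],0,0,0));
 ((4,5,8),([::13;14;15;3;2;4;16;10;12;0;6;8;7;1;17;5;11;9],0,0,0));
 ((4,6,1),([::11;1;2;0;10;9;3;4;6;8;7;5],0,0,0));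
 ((4,6,2),([::3;2;9;8;6;4;5;7;0;11;10;12;1],0,0,0));
 ((4,6,3),([::0;8;9;11;3;2;4;6;5;7;1;13;12;10],0,0,0));
 ((4,6,4),([::8;14;5;3;9;10;12;11;13;7;6;4;2;0;1],0,0,0));
 ((4,6,5),([::11;12;2;8;10;4;6;0;1;3;5;7;9;15;14;13],0,0,0));
 ((4,6,6),([::9;15;14;3;1;0;11;12;13;2;4;6;8;10;16;5;7],0,0,0));
 ((4,6,7),([::15;9;7;6;12;0;1;3;2;4;10;8;14;16;17;5;11;13],0,0,0));
 ((4,6,8),([::3;9;7;1;18;5;6;8;14;13;0;2;4;10;16;15;17;11;12],0,0,0));
 ((4,7,1),([::10;12;5;6;8;7;9;11;0;1;3;4;2],0,0,0));
 ((4,7,2),([::4;12;10;2;3;5;6;8;7;9;11;13;1;0],0,0,0));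
 ((4,7,3),([::0;2;11;5;14;1;3;4;6;8;7;9;10;12;13],0,0,0));
 ((4,7,4),([::14;0;1;11;10;8;9;15;13;3;5;7;6;4;2;12],0,0,0));
 ((4,7,5),([::15;14;13;11;10;8;7;9;3;5;16;1;12;6;0;2;4],0,0,0));
 ((4,7,6),([::1;3;9;7;8;6;4;10;11;5;17;15;16;14;2;0;12;13],0,0,0));
 ((4,7,7),([::6;5;11;17;18;0;13;15;9;7;1;3;4;2;8;10;16;14;12],0,0,0));
 ((4,7,8),([::5;7;1;3;2;4;18;16;17;11;10;12;6;8;14;0;19;13;15;9],0,0,0));
 ((4,8,1),([::12;6;7;9;8;10;11;13;1;3;5;4;2;0],0,0,0));
 ((4,8,2),([::12;13;11;2;0;14;1;7;9;10;8;6;4;5;3],0,0,0));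
 ((4,8,3),([::8;14;0;15;1;11;9;10;12;13;3;5;7;6;4;2],0,0,0));
 ((4,8,4),([::8;9;11;12;10;16;0;15;13;2;4;6;5;7;1;3;14],0,0,0));
 ((4,8,5),([::16;0;2;14;15;9;10;8;7;13;11;17;1;3;5;4;6;12],0,0,0));
 ((4,8,6),([::3;9;7;8;2;0;17;11;13;15;16;14;1;18;12;10;4;5;6],0,0,0));
 ((4,8,7),([::10;4;3;9;8;2;0;18;17;11;13;15;1;19;5;7;6;12;14;16],0,0,0));
 ((4,8,8),([::10;12;11;9;8;6;7;13;15;0;19;4;2;17;18;3;1;16;14;20;5],0,0,0));
 ((4,9,1),([::14;12;11;5;7;9;10;8;6;4;3;1;2;0;13],0,0,0));
 ((4,9,2),([::10;12;6;8;2;0;1;3;4;5;7;9;11;13;15;14],0,0,0));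
 ((4,9,3),([::12;14;13;11;9;3;2;4;6;8;10;16;15;0;1;7;5],0,0,0));
 ((4,9,4),([::13;12;0;17;5;7;9;11;10;8;6;4;2;14;16;15;3;1],0,0,0));
 ((4,9,5),([::5;4;10;16;17;15;13;7;9;11;12;14;8;6;0;2;3;1;18],0,0,0));
 ((4,9,6),([::10;8;9;3;5;19;18;0;6;4;2;1;7;13;11;17;15;16;14;12],0,0,0));
 ((4,9,7),([::19;0;1;7;8;9;10;12;6;4;2;17;15;13;11;5;20;14;16;18;3],0,0,0));
 ((4,9,8),([::9;10;16;14;13;19;3;4;6;8;2;0;20;18;12;11;5;7;1;21;15;17],0,0,0));
 ((5,1,5),([::2;0;6;5;11;10;4;3;9;8;7;1],0,0,0));
 ((5,1,6),([::5;7;8;1;2;3;9;10;4;11;12;6;0],0,0,0));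
 ((5,1,7),([::1;7;9;8;0;6;5;13;12;4;3;11;10;2],0,0,0));
 ((5,1,8),([::6;5;3;12;11;2;8;14;0;1;7;13;4;10;9],0,0,0));
 ((5,2,4),([::9;8;10;4;3;2;1;7;5;11;0;6],0,0,0));
 ((5,2,5),([::2;9;3;5;12;0;1;8;7;6;4;10;11],0,0,0));
 ((5,2,6),([::3;9;1;7;8;10;2;4;5;11;12;13;0;6],0,0,0));
 ((5,2,7),([::11;5;7;9;8;14;0;6;12;13;4;10;1;2;3],0,0,0));
 ((5,2,8),([::4;5;7;9;15;14;8;2;1;11;10;0;6;12;13;3],0,0,0));
 ((5,3,3),([::5;4;2;3;9;11;10;8;7;1;0;6],0,0,0));
 ((5,3,4),([::12;6;8;2;0;1;7;5;4;3;9;10;11],0,0,0));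
 ((5,3,5),([::10;11;5;13;12;4;3;9;7;6;8;0;2;1],0,0,0));
 ((5,3,6),([::14;0;6;5;11;12;10;8;9;3;2;4;13;7;1],0,0,0));
 ((5,3,7),([::1;2;0;14;12;6;7;13;3;4;10;11;5;15;9;8],0,0,0));
 ((5,3,8),([::5;3;1;0;16;14;8;2;13;7;6;12;11;10;4;15;9],0,0,0));
 ((5,4,2),([::2;8;10;4;5;6;7;9;11;0;1;3],0,0,0));
 ((5,4,3),([::2;8;6;7;0;12;11;9;10;4;5;3;1],0,0,0));
 ((5,4,4),([::10;4;12;0;6;7;8;9;11;13;5;3;2;1],0,0,0));
 ((5,4,5),([::8;10;11;9;3;4;13;7;1;2;0;14;12;6;5],0,0,0));
 ((5,4,6),([::14;0;2;8;7;6;4;10;9;15;5;3;13;12;11;1],0,0,0));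
 ((5,4,7),([::5;11;12;10;9;7;13;15;4;3;14;8;2;1;16;0;6],0,0,0));
 ((5,4,8),([::0;17;1;2;14;12;6;8;9;15;3;4;16;10;11;5;7;13],0,0,0));
 ((5,5,1),([::10;0;2;3;1;11;5;4;6;7;8;9],0,0,0));
 ((5,5,2),([::9;11;4;10;12;1;0;2;3;5;6;7;8],0,0,0));
 ((5,5,3),([::8;10;4;5;3;2;1;9;11;13;12;0;6;7],0,0,0));
 ((5,5,4),([::3;2;8;6;5;7;1;0;9;11;10;12;14;13;4],0,0,0));
 ((5,5,5),([::9;8;7;13;3;5;15;0;6;4;2;1;11;10;12;14],0,0,0));
 ((5,5,6),([::0;1;12;6;7;8;14;16;15;13;2;4;10;11;9;3;5],0,0,0));
 ((5,5,7),([::13;7;9;8;10;4;6;5;11;17;16;15;3;1;2;14;12;0],0,0,0));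
 ((5,5,8),([::17;15;13;11;10;9;3;4;5;18;12;6;0;2;8;7;1;14;16],0,0,0));
 ((5,6,1),([::4;11;10;12;1;0;2;3;5;6;8;9;7],0,0,0));
 ((5,6,2),([::5;7;8;6;4;10;9;3;2;0;1;13;11;12],0,0,0));
 ((5,6,3),([::1;7;8;6;5;3;2;11;9;10;12;14;0;13;4],0,0,0));
 ((5,6,4),([::0;1;7;8;2;3;9;11;13;15;14;12;10;4;6;5],0,0,0));
 ((5,6,5),([::6;7;1;16;14;3;4;5;11;12;10;8;9;15;0;2;13],0,0,0));
 ((5,6,6),([::9;8;6;4;3;2;0;12;11;17;5;7;1;13;15;14;16;10],0,0,0));
 ((5,6,7),([::16;3;1;2;15;14;12;10;8;9;11;17;4;6;5;18;0;13;7],0,0,0));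
 ((5,6,8),([::18;19;17;3;1;0;14;15;16;10;4;2;8;6;12;13;7;5;11;9],0,0,0));
 ((5,7,1),([::12;6;5;3;4;2;0;1;13;11;10;8;9;7],0,0,0));
 ((5,7,2),([::3;5;11;2;4;6;7;8;9;10;12;14;1;0;13],0,0,0));
 ((5,7,3),([::8;9;3;5;7;13;11;10;12;14;15;0;6;4;2;1],0,0,0));
 ((5,7,4),([::7;5;6;0;15;13;11;12;14;16;1;2;8;9;3;4;10],0,0,0));
 ((5,7,5),([::5;3;1;17;11;12;10;4;6;7;13;14;15;9;8;2;0;16],0,0,0));
 ((5,7,6),([::10;4;17;0;13;11;9;15;16;14;12;18;1;3;2;8;7;6;5],0,0,0));
 ((5,7,7),([::19;13;15;1;0;14;16;18;4;3;17;11;12;10;9;7;5;6;8;2],0,0,0));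
 ((5,7,8),([::15;13;19;20;14;16;1;0;6;7;8;10;12;18;3;5;4;2;17;11;9],0,0,0));
 ((5,8,1),([::6;7;9;10;12;11;13;0;14;1;3;5;4;2;8],0,0,0));
 ((5,8,2),([::10;4;5;3;1;15;13;14;0;2;12;11;9;8;6;7],0,0,0));
 ((5,8,3),([::6;0;11;5;4;2;3;1;16;15;13;14;12;10;8;9;7],0,0,0));
 ((5,8,4),([::7;13;11;12;6;5;4;2;0;16;15;17;1;3;9;10;8;14],0,0,0));
 ((5,8,5),([::0;17;4;6;7;13;11;9;10;8;2;1;3;5;18;12;14;15;16],0,0,0));
 ((5,8,6),([::2;0;18;12;14;15;13;7;9;8;6;5;19;1;3;4;10;16;17;11],0,0,0));
 ((5,8,7),([::3;1;7;9;11;17;19;20;0;15;13;14;8;2;4;5;6;12;10;16;18],0,0,0));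
 ((5,8,8),([::10;12;13;15;14;8;9;3;2;4;6;0;16;18;20;19;17;11;5;21;1;7],0,0,0));
 ((5,9,1),([::1;0;2;8;10;12;14;15;13;11;9;7;6;5;3;4],0,0,0));
 ((5,9,2),([::16;5;11;12;14;13;15;0;2;1;3;4;6;8;10;9;7],0,0,0));
 ((5,9,3),([::12;6;7;5;4;2;3;9;10;8;14;16;0;1;17;15;13;11],0,0,0));
 ((5,9,4),([::8;9;11;13;0;6;7;1;18;17;15;16;14;12;10;4;2;3;5],0,0,0));
 ((5,9,5),([::9;8;2;0;18;4;5;19;1;3;17;15;16;14;12;10;11;13;7;6],0,0,0));
 ((5,9,6),([::13;15;14;20;18;19;17;2;8;10;16;1;0;6;4;3;5;7;9;11;12],0,0,0));
 ((5,9,7),([::6;12;13;11;5;21;1;3;2;4;10;9;15;17;19;18;20;0;16;14;8;7],0,0,0));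
 ((5,9,8),([::7;5;3;20;19;18;12;6;4;21;15;17;11;13;14;16;22;1;0;2;8;10;9],0,0,0));
 ((6,1,4),([::9;7;8;2;3;4;10;11;5;6;0;1],0,0,0));
 ((6,1,5),([::10;4;3;9;11;5;12;0;1;2;8;7;6],0,0,0));
 ((6,1,6),([::7;8;2;10;11;9;1;0;6;5;13;12;4;3],0,0,0));
 ((6,1,7),([::13;12;6;8;7;1;10;9;0;14;5;11;2;3;4],0,0,0));
 ((6,1,8),([::12;14;8;9;3;13;7;6;0;15;5;4;10;11;1;2],0,0,0));
 ((6,2,3),([::7;8;2;4;3;9;10;11;1;0;6;5],0,0,0));
 ((6,2,4),([::1;2;4;5;6;0;7;8;9;3;10;12;11],0,0,0));
 ((6,2,5),([::4;6;5;13;7;1;2;3;11;10;9;8;0;12],0,0,0));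
 ((6,2,6),([::6;7;1;2;3;5;11;12;10;4;13;14;8;9;0],0,0,0));
 ((6,2,7),([::13;15;14;4;10;9;3;2;8;7;5;11;12;6;0;1],0,0,0));
 ((6,2,8),([::16;5;7;8;10;4;3;9;15;14;13;2;1;12;11;0;6],0,0,0));
 ((6,3,2),([::9;8;10;11;0;6;7;1;3;2;4;5],0,0,0));
 ((6,3,3),([::2;9;3;5;4;6;7;8;1;0;12;10;11],0,0,0));
 ((6,3,4),([::11;5;7;8;0;1;13;12;6;4;3;2;10;9],0,0,0));
 ((6,3,5),([::0;2;3;12;10;1;7;6;5;4;13;14;8;9;11],0,0,0));
 ((6,3,6),([::15;5;4;2;1;7;6;8;14;0;10;11;12;13;3;9],0,0,0));
 ((6,3,7),([::11;13;2;0;16;5;4;3;14;15;9;10;8;7;1;12;6],0,0,0));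
 ((6,3,8),([::0;1;7;13;12;10;8;6;5;11;17;16;4;3;9;15;14;2],0,0,0));
 ((6,4,1),([::3;1;0;2;4;6;7;8;9;10;11;5],0,0,0));
 ((6,4,2),([::0;7;6;8;10;9;11;5;4;3;2;1;12],0,0,0));
 ((6,4,3),([::13;1;0;6;5;7;8;9;10;12;4;2;3;11],0,0,0));
 ((6,4,4),([::1;0;13;12;11;10;9;3;5;14;8;2;4;6;7],0,0,0));
 ((6,4,5),([::12;6;5;11;9;15;14;0;1;2;4;3;13;7;8;10],0,0,0));
 ((6,4,6),([::4;15;16;5;6;8;7;9;10;12;1;0;11;13;2;3;14],0,0,0));
 ((6,4,7),([::1;13;14;2;3;9;15;16;4;5;7;6;8;10;12;0;17;11],0,0,0));
 ((6,4,8),([::0;13;14;12;11;5;7;6;8;9;3;16;10;4;17;18;1;2;15],0,0,0));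
 ((6,5,1),([::2;1;3;4;6;0;12;11;10;8;9;7;5],0,0,0));
 ((6,5,2),([::12;4;6;8;9;10;11;13;0;1;7;5;3;2],0,0,0));
 ((6,5,3),([::5;6;0;14;8;10;12;13;11;9;7;1;2;3;4],0,0,0));
 ((6,5,4),([::2;3;1;11;12;13;7;9;10;8;14;0;15;5;4;6],0,0,0));
 ((6,5,5),([::15;9;10;4;3;1;7;6;5;11;13;12;14;16;0;2;8],0,0,0));
 ((6,5,6),([::17;0;1;2;4;3;9;11;5;7;13;14;8;6;12;10;16;15],0,0,0));
 ((6,5,7),([::18;0;2;1;14;8;7;9;15;13;12;6;4;5;3;16;10;11;17],0,0,0));
 ((6,5,8),([::18;19;17;15;14;13;11;9;3;5;4;10;16;2;8;7;1;0;6;12],0,0,0));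
 ((6,6,1),([::13;12;0;8;10;11;9;7;5;6;4;3;2;1],0,0,0));
 ((6,6,2),([::6;7;1;3;4;2;0;14;13;12;10;8;9;11;5],0,0,0));
 ((6,6,3),([::15;0;6;8;14;13;12;11;9;10;4;2;1;3;5;7],0,0,0));
 ((6,6,4),([::2;8;10;11;0;1;3;4;6;12;13;14;16;15;9;7;5],0,0,0));
 ((6,6,5),([::9;7;6;12;14;16;15;17;0;1;13;11;5;4;10;8;2;3],0,0,0));
 ((6,6,6),([::13;7;8;9;15;17;16;10;11;5;4;6;0;2;3;1;18;12;14],0,0,0));
 ((6,6,7),([::12;14;16;10;8;2;4;5;3;9;15;1;0;19;18;17;11;13;7;6],0,0,0));
 ((6,6,8),([::1;20;14;8;10;9;7;6;0;15;13;19;18;12;11;5;3;4;2;17;16],0,0,0));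
 ((6,7,1),([::14;13;4;2;0;1;3;5;6;8;7;9;10;12;11],0,0,0));
 ((6,7,2),([::14;4;6;7;5;11;9;8;10;12;13;15;0;1;3;2],0,0,0));
 ((6,7,3),([::12;14;15;9;7;8;6;4;5;3;2;13;11;10;16;1;0],0,0,0));
 ((6,7,4),([::9;10;4;3;1;2;8;6;7;13;15;17;0;16;14;12;11;5],0,0,0));
 ((6,7,5),([::6;8;9;11;17;15;16;14;13;0;18;12;10;4;5;7;1;3;2],0,0,0));
 ((6,7,6),([::11;9;7;13;12;14;0;1;3;2;16;15;17;18;4;10;8;6;5;19],0,0,0));
 ((6,7,7),([::9;15;13;12;14;8;10;11;5;6;4;3;18;20;19;0;2;17;16;1;7],0,0,0));
 ((6,7,8),([::14;8;10;11;5;4;2;1;7;9;3;19;17;18;16;0;20;21;15;13;12;6],0,0,0));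
 ((6,8,1),([::2;12;10;8;9;11;13;15;14;0;1;3;4;5;7;6],0,0,0));
 ((6,8,2),([::13;11;5;3;14;12;10;8;9;7;6;4;2;1;0;16;15],0,0,0));
 ((6,8,3),([::11;12;0;2;4;3;9;10;8;6;5;7;13;15;14;16;17;1],0,0,0));
 ((6,8,4),([::6;5;7;8;10;4;2;0;1;3;9;11;17;18;12;14;13;15;16],0,0,0));
 ((6,8,5),([::5;4;2;0;19;17;18;16;15;9;3;1;7;13;14;12;6;8;10;11],0,0,0));
 ((6,8,6),([::2;17;16;18;3;1;7;8;14;12;10;9;11;13;15;0;20;19;4;6;5],0,0,0));
 ((6,8,7),([::12;6;7;9;10;8;14;13;15;21;0;1;3;5;11;17;19;20;4;2;18;16],0,0,0));
 ((6,8,8),([::13;19;17;11;9;15;21;22;0;6;7;5;4;3;20;18;1;2;8;10;12;14;16],0,0,0));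
 ((6,9,1),([::16;10;8;7;5;6;4;3;1;2;0;15;13;14;12;11;9],0,0,0));
 ((6,9,2),([::8;10;11;12;0;16;14;13;15;17;1;3;9;7;6;5;4;2],0,0,0));
 ((6,9,3),([::10;9;15;16;3;1;18;17;0;2;4;6;5;7;8;14;12;11;13],0,0,0));
 ((6,9,4),([::7;5;11;13;12;14;8;9;10;16;15;17;19;18;0;6;4;2;1;3],0,0,0));
 ((6,9,5),([::6;12;11;13;14;8;7;5;20;1;3;4;2;0;19;18;16;10;9;15;17],0,0,0));
 ((6,9,6),([::21;1;3;19;20;14;12;13;15;9;7;6;4;5;11;10;8;2;0;16;18;17],0,0,0));
 ((6,9,7),([::4;5;22;20;21;15;13;11;17;19;2;0;1;18;16;14;12;6;7;8;10;9;3],0,0,0));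
 ((6,9,8),([::23;1;2;8;14;20;19;17;18;12;10;11;9;7;13;15;16;22;0;6;4;5;3;21],0,0,0));
 ((7,1,3),([::2;8;7;6;5;11;0;1;3;4;10;9],0,0,0));
 ((7,1,4),([::11;10;9;3;1;2;8;7;0;12;6;5;4],0,0,0));
 ((7,1,5),([::12;6;0;13;7;5;4;3;11;10;9;8;2;1],0,0,0));
 ((7,1,6),([::4;13;0;9;8;14;5;6;7;1;2;3;12;11;10],0,0,0));
 ((7,1,7),([::12;6;5;7;1;0;15;9;8;2;3;13;14;4;10;11],0,0,0));
 ((7,1,8),([::9;8;10;11;5;16;0;1;12;6;7;13;2;3;14;15;4],0,0,0));
 ((7,2,2),([::6;8;7;1;0;11;10;9;3;2;4;5],0,0,0));
 ((7,2,3),([::11;0;6;7;1;2;3;4;5;12;10;9;8],0,0,0));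
 ((7,2,4),([::7;9;1;3;2;8;0;13;12;11;10;4;5;6],0,0,0));
 ((7,2,5),([::7;13;0;1;3;2;11;12;6;5;4;10;9;8;14],0,0,0));
 ((7,2,6),([::1;3;9;10;11;13;12;2;8;7;6;0;15;5;4;14],0,0,0));
 ((7,2,7),([::6;0;16;5;3;2;4;10;11;12;1;7;13;14;15;9;8],0,0,0));
 ((7,2,8),([::16;14;8;10;4;5;6;0;17;11;12;13;7;1;2;3;15;9],0,0,0));
 ((7,3,1),([::1;11;10;9;8;7;6;0;2;3;5;4],0,0,0));
 ((7,3,2),([::8;1;2;4;3;5;6;0;12;11;10;9;7],0,0,0));
 ((7,3,3),([::11;13;12;4;5;6;7;9;3;2;1;0;8;10],0,0,0));
 ((7,3,4),([::4;2;1;10;9;11;5;6;7;8;14;0;13;12;3],0,0,0));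
 ((7,3,5),([::15;5;4;2;1;7;6;8;9;3;13;12;11;10;0;14],0,0,0));
 ((7,3,6),([::12;14;15;9;11;10;4;3;1;0;16;5;6;7;13;2;8],0,0,0));
 ((7,3,7),([::4;5;17;1;0;12;13;14;2;8;6;7;9;3;15;16;10;11],0,0,0));
 ((7,3,8),([::16;14;8;6;7;1;0;13;15;2;3;9;10;4;5;18;17;11;12],0,0,0));
 ((7,4,1),([::9;2;0;1;12;11;10;8;7;6;5;3;4],0,0,0));
 ((7,4,2),([::5;7;6;12;0;8;9;10;11;13;1;2;3;4],0,0,0));
 ((7,4,3),([::13;7;9;10;8;2;3;4;5;6;0;1;14;12;11],0,0,0));
 ((7,4,4),([::13;7;5;4;10;11;12;6;8;9;15;14;0;1;3;2],0,0,0));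
 ((7,4,5),([::5;16;10;12;6;7;8;2;1;0;15;14;13;11;9;3;4],0,0,0));
 ((7,4,6),([::8;6;5;4;3;9;15;14;13;11;17;16;10;12;0;2;1;7],0,0,0));
 ((7,4,7),([::8;9;15;17;16;14;1;7;6;0;2;3;4;10;11;13;12;18;5],0,0,0));
 ((7,4,8),([::7;1;3;9;8;10;4;2;16;17;11;12;13;15;14;0;6;5;19;18],0,0,0));
 ((7,5,1),([::13;1;7;5;4;3;2;0;12;11;10;9;8;6],0,0,0));
 ((7,5,2),([::14;5;11;9;10;12;13;0;1;2;3;4;6;8;7],0,0,0));
 ((7,5,3),([::6;12;10;0;1;2;4;3;5;7;8;9;15;14;13;11],0,0,0));
 ((7,5,4),([::8;7;6;4;2;0;1;16;5;11;10;9;3;14;15;13;12],0,0,0));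
 ((7,5,5),([::0;6;8;14;2;3;4;5;11;10;12;13;15;16;17;1;7;9],0,0,0));
 ((7,5,6),([::3;1;18;16;17;4;10;9;8;7;5;11;12;6;0;2;15;14;13],0,0,0));
 ((7,5,7),([::11;5;3;9;7;8;2;4;18;17;19;1;0;6;12;13;14;15;16;10],0,0,0));
 ((7,5,8),([::16;14;20;1;3;9;10;8;2;17;18;19;4;5;11;12;13;15;0;6;7],0,0,0));
 ((7,6,1),([::12;10;8;7;5;6;4;3;2;1;0;9;11;13;14],0,0,0));
 ((7,6,2),([::2;8;7;6;4;10;9;11;13;12;14;15;0;1;3;5],0,0,0));
 ((7,6,3),([::2;4;10;9;7;6;5;3;1;0;11;12;13;15;16;14;8],0,0,0));
 ((7,6,4),([::9;7;6;0;12;11;10;8;2;4;5;3;1;13;14;15;17;16],0,0,0));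
 ((7,6,5),([::6;0;1;7;8;2;15;13;11;9;10;12;14;16;17;18;5;4;3],0,0,0));
 ((7,6,6),([::8;10;16;2;0;6;12;13;14;15;1;3;4;5;7;9;11;17;18;19],0,0,0));
 ((7,6,7),([::15;9;8;2;4;6;12;14;20;0;1;3;5;7;13;19;18;17;16;10;11],0,0,0));
 ((7,6,8),([::20;21;15;17;11;13;19;3;9;8;7;6;0;1;2;18;16;14;12;10;4;5],0,0,0));
 ((7,7,1),([::6;4;5;7;1;3;2;0;15;13;14;12;11;10;8;9],0,0,0));
 ((7,7,2),([::16;0;15;13;12;11;10;8;9;7;1;2;4;6;5;3;14],0,0,0));
 ((7,7,3),([::16;0;1;3;4;5;6;12;10;11;9;7;8;2;14;13;15;17],0,0,0));
 ((7,7,4),([::13;11;5;6;4;17;18;1;0;2;3;9;7;8;10;16;15;14;12],0,0,0));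
 ((7,7,5),([::9;10;16;2;0;19;18;4;5;6;8;7;1;3;17;15;13;11;12;14],0,0,0));
 ((7,7,6),([::8;9;3;2;4;19;20;14;12;10;11;13;7;5;6;0;1;16;18;17;15],0,0,0));
 ((7,7,7),([::11;13;15;17;19;3;1;0;2;18;12;6;7;8;9;10;16;14;20;21;5;4],0,0,0));
 ((7,7,8),([::19;20;22;1;7;13;15;21;4;10;8;9;3;2;0;6;5;11;12;14;16;17;18],0,0,0));
 ((7,8,1),([::12;14;16;10;8;9;11;13;15;0;1;2;3;4;5;7;6],0,0,0));
 ((7,8,2),([::14;13;12;0;2;3;1;17;16;15;9;11;10;8;6;4;5;7],0,0,0));
 ((7,8,3),([::1;18;12;11;10;8;6;0;2;3;4;5;7;9;15;17;16;14;13],0,0,0));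
 ((7,8,4),([::1;0;2;3;17;11;10;8;9;7;5;4;6;12;14;16;15;13;19;18],0,0,0));
 ((7,8,5),([::0;6;8;10;12;13;15;16;18;17;11;9;7;1;2;3;5;4;19;20;14],0,0,0));
 ((7,8,6),([::14;12;13;7;9;3;2;18;17;19;20;0;1;21;15;16;10;8;6;4;5;11],0,0,0));
 ((7,8,7),([::20;14;13;19;2;3;4;10;12;11;9;7;8;6;5;22;1;18;16;17;15;21;0],0,0,0));
 ((7,8,8),([::23;17;15;16;14;12;6;7;1;19;13;11;10;8;9;3;5;4;22;21;20;18;0;2],0,0,0));
 ((7,9,1),([::3;4;10;8;6;5;7;9;11;12;14;13;15;16;0;17;1;2],0,0,0));
 ((7,9,2),([::1;2;15;17;18;0;6;4;3;5;7;8;10;9;11;13;12;14;16],0,0,0));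
 ((7,9,3),([::11;10;16;2;8;9;7;5;6;4;3;1;0;18;19;17;15;13;14;12],0,0,0));
 ((7,9,4),([::17;11;13;15;16;14;8;10;9;7;6;12;18;19;0;20;1;3;2;4;5],0,0,0));
 ((7,9,5),([::3;9;8;14;12;11;5;6;7;13;15;17;16;18;20;19;21;1;0;2;4;10],0,0,0));
 ((7,9,6),([::14;15;9;10;4;2;8;6;12;11;13;7;5;3;20;18;16;17;19;21;22;0;1],0,0,0));
 ((7,9,7),([::6;0;2;4;5;23;21;22;20;19;18;16;14;8;10;9;3;1;7;13;12;11;17;15],0,0,0));
 ((7,9,8),([::13;14;20;21;2;4;3;5;6;12;18;19;0;23;22;24;1;7;9;11;17;15;16;10;8],0,0,0));
 ((8,1,2),([::11;0;10;9;3;4;5;6;7;8;2;1],0,0,0));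
 ((8,1,3),([::1;3;2;8;9;10;11;4;5;6;7;0;12],0,0,0));
 ((8,1,4),([::11;5;7;6;12;13;0;8;9;10;4;3;2;1],0,0,0));
 ((8,1,5),([::0;6;4;5;11;12;13;14;8;7;1;2;3;9;10],0,0,0));
 ((8,1,6),([::1;0;15;9;10;4;2;12;11;5;6;7;8;14;13;3],0,0,0));
 ((8,1,7),([::2;8;10;16;0;1;12;11;5;6;7;13;14;15;9;3;4],0,0,0));
 ((8,1,8),([::1;0;17;11;9;15;16;10;4;3;2;14;8;7;13;12;6;5],0,0,0));
 ((8,2,1),([::0;10;11;9;8;7;1;2;3;4;5;6],0,0,0));
 ((8,2,2),([::5;6;7;8;2;3;4;10;9;11;12;1;0],0,0,0));
 ((8,2,3),([::5;11;9;8;7;6;0;13;12;10;4;3;2;1],0,0,0));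
 ((8,2,4),([::6;4;2;1;0;14;5;11;10;9;8;7;13;12;3],0,0,0));
 ((8,2,5),([::12;14;0;15;9;8;7;13;3;2;1;11;10;4;5;6],0,0,0));
 ((8,2,6),([::6;7;9;10;16;0;1;2;8;14;3;4;15;13;12;11;5],0,0,0));
 ((8,2,7),([::15;13;7;9;8;14;2;1;0;17;5;6;12;11;10;16;4;3],0,0,0));
 ((8,2,8),([::16;15;14;12;13;11;5;18;17;4;10;9;3;2;8;7;1;0;6],0,0,0));
 ((8,3,1),([::2;8;9;10;11;12;0;1;3;4;6;7;5],0,0,0));
 ((8,3,2),([::4;3;2;1;7;9;8;10;11;12;0;13;5;6],0,0,0));
 ((8,3,3),([::12;13;11;9;0;1;2;3;4;10;8;7;6;5;14],0,0,0));
 ((8,3,4),([::9;15;14;8;6;12;13;11;10;0;1;2;3;4;5;7],0,0,0));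
 ((8,3,5),([::9;11;13;14;3;2;8;7;1;0;16;15;4;5;6;12;10],0,0,0));
 ((8,3,6),([::15;13;14;12;6;8;2;3;9;10;11;5;4;16;17;0;1;7],0,0,0));
 ((8,3,7),([::9;15;2;0;17;18;5;4;3;16;10;11;12;13;14;1;7;8;6],0,0,0));
 ((8,3,8),([::15;13;7;6;0;19;1;2;16;17;3;4;18;12;14;8;9;10;11;5],0,0,0));
 ((8,4,1),([::1;2;0;12;10;9;8;7;6;5;4;3;11;13],0,0,0));
 ((8,4,2),([::2;4;5;6;0;14;1;3;12;13;11;10;9;8;7],0,0,0));
 ((8,4,3),([::14;15;13;11;10;12;6;0;1;2;3;9;8;7;5;4],0,0,0));
 ((8,4,4),([::9;10;11;13;2;1;3;4;5;7;8;14;12;6;0;16;15],0,0,0));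
 ((8,4,5),([::6;4;2;3;9;8;14;15;13;12;11;5;7;1;0;17;16;10],0,0,0));
 ((8,4,6),([::18;0;1;7;9;10;16;15;2;4;17;11;12;13;14;8;6;5;3],0,0,0));
 ((8,4,7),([::12;6;4;10;8;2;1;0;19;18;17;11;5;3;9;7;13;14;15;16],0,0,0));
 ((8,4,8),([::17;16;18;20;14;8;2;0;15;9;10;11;12;13;19;4;5;6;7;1;3],0,0,0));
 ((8,5,1),([::12;14;5;6;7;8;10;9;11;13;0;1;2;3;4],0,0,0));
 ((8,5,2),([::8;6;12;2;1;3;4;5;7;9;10;11;13;14;15;0],0,0,0));
 ((8,5,3),([::8;10;11;12;6;0;1;2;3;4;5;7;9;15;13;14;16],0,0,0));
 ((8,5,4),([::3;5;11;17;0;2;4;6;7;8;9;10;16;15;14;12;13;1],0,0,0));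
 ((8,5,5),([::10;8;2;1;7;5;3;9;11;12;13;14;15;16;17;4;6;0;18],0,0,0));
 ((8,5,6),([::4;5;7;8;6;0;18;12;13;19;1;3;2;16;17;11;10;9;15;14],0,0,0));
 ((8,5,7),([::20;0;2;1;7;9;3;4;5;6;12;18;16;15;14;8;10;11;17;19;13],0,0,0));
 ((8,5,8),([::11;13;14;16;0;1;17;15;9;8;7;6;12;10;4;5;21;20;18;2;3;19],0,0,0));
 ((8,6,1),([::13;3;1;2;4;6;5;7;8;9;10;11;12;14;0;15],0,0,0));
 ((8,6,2),([::2;4;6;0;15;14;13;12;11;10;9;8;7;5;16;1;3],0,0,0));
 ((8,6,3),([::6;5;3;4;2;8;10;12;11;9;7;13;1;0;17;16;15;14],0,0,0));
 ((8,6,4),([::9;7;13;0;17;18;12;11;10;8;6;4;5;3;2;1;14;15;16],0,0,0));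
 ((8,6,5),([::19;1;15;13;7;9;8;2;3;4;10;11;12;14;16;17;18;0;6;5],0,0,0));
 ((8,6,6),([::6;7;9;15;13;14;16;1;3;4;5;20;0;19;18;12;11;10;8;2;17],0,0,0));
 ((8,6,7),([::6;7;5;4;2;3;1;17;18;12;10;16;0;21;20;19;13;11;9;15;14;8],0,0,0));
 ((8,6,8),([::22;16;10;9;15;21;19;13;11;17;18;20;14;12;6;8;7;5;4;3;2;1;0],0,0,0));
 ((8,7,1),([::1;7;8;9;11;10;12;13;15;14;16;0;2;3;5;4;6],0,0,0));
 ((8,7,2),([::7;8;2;1;0;17;15;16;14;12;13;11;9;10;4;6;5;3],0,0,0));
 ((8,7,3),([::7;9;15;2;4;10;8;6;5;3;1;0;18;17;16;14;13;12;11],0,0,0));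
 ((8,7,4),([::6;12;11;17;15;1;19;13;14;16;18;0;2;3;4;5;7;8;9;10],0,0,0));
 ((8,7,5),([::6;0;19;18;12;14;15;16;17;2;4;3;1;20;5;7;13;11;10;9;8],0,0,0));
 ((8,7,6),([::0;20;18;2;8;14;16;17;15;9;10;11;12;13;19;21;1;7;6;5;3;4],0,0,0));
 ((8,7,7),([::1;18;12;14;15;16;17;19;21;22;5;7;13;11;10;9;8;2;0;6;4;3;20],0,0,0));
 ((8,7,8),([::14;20;18;0;23;17;19;21;22;16;15;9;7;8;2;1;3;5;6;12;13;11;10;4],0,0,0));
 ((8,8,1),([::8;6;5;3;1;7;9;10;12;11;13;14;15;16;17;0;2;4],0,0,0));
 ((8,8,2),([::18;1;7;9;15;17;0;2;3;4;5;6;8;10;11;12;13;14;16],0,0,0));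
 ((8,8,3),([::14;12;13;15;17;19;5;6;4;3;2;16;18;0;1;7;8;9;11;10],0,0,0));
 ((8,8,4),([::20;19;4;3;1;2;0;15;14;8;6;5;7;9;10;12;13;11;17;16;18],0,0,0));
 ((8,8,5),([::12;14;15;16;18;20;4;6;5;7;8;10;9;3;2;1;17;11;13;19;21;0],0,0,0));
 ((8,8,6),([::4;21;19;17;0;2;8;14;13;12;11;10;9;3;5;6;7;1;22;20;18;16;15],0,0,0));
 ((8,8,7),([::5;11;12;14;15;13;7;1;2;8;10;16;18;17;19;20;21;23;22;0;6;4;3;9],0,0,0));
 ((8,8,8),([::0;1;3;2;4;6;7;8;14;12;10;16;15;9;11;5;24;18;20;21;22;23;17;19;13],0,0,0));
 ((8,9,1),([::10;11;5;7;9;8;6;4;3;2;0;1;18;17;16;14;12;13;15],0,0,0));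
 ((8,9,2),([::17;19;18;16;2;0;14;15;13;12;11;9;10;8;6;7;5;4;3;1],0,0,0));
 ((8,9,3),([::12;14;13;15;17;11;5;7;8;6;4;2;3;1;0;20;19;18;16;10;9],0,0,0));
 ((8,9,4),([::21;20;0;2;8;10;12;6;4;5;7;1;3;9;11;13;14;15;16;17;18;19],0,0,0));
 ((8,9,5),([::22;1;0;17;16;18;12;11;9;10;8;14;15;13;7;5;6;4;2;3;20;21;19],0,0,0));
 ((8,9,6),([::0;18;20;2;3;1;7;5;6;12;13;15;14;16;17;19;21;23;22;4;10;11;9;8],0,0,0));
 ((8,9,7),([::14;15;17;11;5;24;23;0;2;21;20;22;16;18;19;13;12;10;9;8;6;4;3;1;7],0,0,0));
 ((8,9,8),([::9;3;2;0;6;4;5;11;17;16;18;12;10;8;7;1;21;23;25;24;22;20;19;13;14;15],0,0,0))].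

Fixpoint lk (t : nat * nat * nat) (l : seq (nat * nat * nat * (seq nat * nat * nat * nat))) :=
  match l with
  | [::] => None
  | (t', e) :: l' => if t == t' then Some e else lk t l'
  end.

Definition validb a b c := (12 <= a + b + c + 1) && ((6 %| a + b + c + 1) ==> (5 <= a + b)).

Definition check_entry a b c (e : seq nat * nat * nat * nat) :=
  let: (p, G1, G2, G6) := e in
  [&& perm_eq p (iota 0 (a + b + c + 1)), perm_eq (path_lengths (a + b + c + 1) p) (L126 a b c)
    & flags (a + b + c + 1) a b c p G1 G2 G6].

Definition box_ok := all (fun a => all (fun b => all (fun c =>
  validb a b c ==> (if lk (a, b, c) table is Some e then check_entry a b c e else false))
  (iota 1 14)) (iota 1 11)) (iota 1 9).

Lemma box_okT : box_ok.
Proof. vm_compute. reflexivity. Qed.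

Lemma box a b c : 1 <= a <= 9 -> 1 <= b <= 11 -> 1 <= c <= 14 -> validb a b c -> Good a b c.
Proof.
move=> ha hb hc hv.
have := box_okT; rewrite /box_ok => /allP /(_ a) ; rewrite mem_iota => /(_ ltac:(lia)).
move=> /allP /(_ b); rewrite mem_iota => /(_ ltac:(lia)).
move=> /allP /(_ c); rewrite mem_iota => /(_ ltac:(lia)).
move=> /implyP /(_ hv); case: (lk (a, b, c) table) => // -[[[p G1] G2] G6].
rewrite /check_entry => /and3P [h1 h2 h3].
by exists p, G1, G2, G6.
Qed.

Lemma suff_all n a b c : a + b + c <= n -> 1 <= a -> 1 <= b -> 1 <= c -> validb a b c -> Good a b c.
Proof.
elim: n a b c => [|n IH] a b c hn ha hb hc hv; first lia.
case: (leqP 10 a) => h1.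
  have -> : a = (a - 1).+1 by lia.
  apply: step_a => //; first lia.
  apply: IH => //; try lia.
  rewrite /validb; apply/andP; split; first lia. by apply/implyP => _; lia.
case: (leqP 12 b) => h2.
  have -> : b = (b - 2).+2 by lia.
  apply: step_b => //; first lia.
  apply: IH => //; try lia.
  rewrite /validb; apply/andP; split; first lia. by apply/implyP => _; lia.
case: (leqP 15 c) => h3.
  have -> : c = (c - 6) + 6 by lia.
  apply: step_c => //; first lia.
  apply: IH => //; try lia.
  move: hv; rewrite /validb => /andP [hv1 hv2]; apply/andP; split; first lia.
  apply/implyP => hd; apply: (implyP hv2).
  have -> : a + b + c + 1 = (a + b + (c - 6) + 1) + 6 by lia.
  by rewrite dvdn_addl.
apply: box => //; lia.
Qed.

Unset Implicit Arguments.
Theorem proposition5p2 (a b c : nat) :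
  1 <= a -> 1 <= b -> 1 <= c ->
  6 <= (a + b + c + 1)./2 ->
  (exists p : seq nat, ham_path (a + b + c + 1) p /\
     perm_eq (path_lengths (a + b + c + 1) p) (L126 a b c))
  <->
  (forall d : nat, d %| (a + b + c + 1) ->
     count (fun x => d %| x) (L126 a b c) <= (a + b + c + 1) - d).
Proof.
move=> ha hb hc hv; split.
  move=> [p [Hp Hl]] d hd; apply: (necessity _ Hp Hl hd); lia.
move=> H.
have hv' : 12 <= a + b + c + 1.
  have := leq_half_double 6 (a + b + c + 1); lia.
have : Good a b c.
  apply: (@suff_all (a + b + c)) => //.
  rewrite /validb hv' /=; apply/implyP => h6.
  have := H 6 h6; rewrite /L126 !count_cat !count_nseq /=; lia.
move=> [p [G1 [G2 [G6 [Hp Hl _]]]]].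
by exists p.
Qed.
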